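(* Let $2\le n\le+\infty$ and let $\{a_i\}_{i=1}^n$ be a non-increasing $n$-tuple of positive numbers with $\sum_{i=1}^n a_i\le1$ and $\sum_{i=1}^n\eta(a_i)<+\infty$. Let $I_n=\mathbb{N}\cap[1,n]$, $d_k=\sum_{i=k+1}^n a_i$, $s_k=\sum_{i=k+1}^n\eta(a_i)$ for $k\in\{0\}\cup I_{n-1}$, $b_k=s_{k-1}+d_{k-1}\ln a_k$ for $k\in I_n$ (so $b_n=0$ if $n<\infty$). Define $z_0(0)=n$ and, for $b>0$, $$z_0(b)=\sum_{k=1}^{n-1}\mathbf{1}_{B'_k}(b)\left(k+d_ke^{\frac{s_k-b}{d_k}}\right),\quad B'_1=[b_2,+\infty),\ B'_k=[b_{k+1},b_k)\ (k\in I_{n-1}\setminus\{1\}).$$ For $b>0$ let $\bar{x}^b=\{x^b_i\}_{i=1}^n$ be the unique minimizer of $\sum_{i=1}^n e^{-bx_i}$ over the set of nondecreasing $n$-tuples $\{x_i\}$ of reals with $x_1=0$ and $\sum_{i=1}^n a_ix_i=1$ (so that $z_0(b)$ is the minimum value). Let $\theta>0$, $f(b)=\theta b+\ln z_0(b)$, and $$m=1\ \text{if}\ \theta<1/d_0,\qquad m=\max\{k\in I_{n-1}:\ d_k+ka_k\ge1/\theta\}\ \text{if}\ \theta\ge1/d_0.$$ (i) If $n<+\infty$: $f$ is positive, convex and continuously differentiable on $[0,+\infty)$; $f(0)=\ln n$, $f'(0^+)=\theta-\frac{1}{a_nn}$ and $\lim_{b\to+\infty}f(b)=+\infty$; and $\inf_{b\in[0,+\infty)}f(b)=f(b_*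 )$, where $b_*$ is the unique point of $[0,+\infty)$ at which the infimum is attained, given by: in case $A$ ($a_nn\ge1/\theta$), $b_*=0$ and $f(b_* )=\ln n$; in case $B$ ($a_nn<1/\theta$), $b_*=s_m+d_m\ln\frac{1-\theta d_m}{\theta m}$ and $f(b_* )=b_*\theta+\ln\frac{m}{1-d_m\theta}$. In case $A$, $\lim_{b\to0^+}x^b_i=0$ for $1\le i\le\tilde m$ and $\lim_{b\to0^+}x^b_i=\frac{1}{a_n(n-\tilde m)}$ for $\tilde m<i\le n$, where $\tilde m=n-\max\{k\in\mathbb{N}\cap[1,n-1]:a_{n-k+1}=a_n\}$. In case $B$, $x^{b_*}_i=0$ for $1\le i\le m$ and $x^{b_*}_i=\frac{1}{b_*}\ln\frac{1-\theta d_m}{a_i\theta m}$ for $m<i\le n$. (ii) If $n=+\infty$: $f$ is positive, convex and continuously differentiable on $(0,+\infty)$; $\lim_{b\to0^+}f(b)=+\infty$, $\lim_{b\to0^+}f'(b)=-\infty$, $\lim_{b\to+\infty}f(b)=+\infty$; $\inf_{b\in(0,+\infty)}f(b)=f(b_* )$ with $b_*=s_m+d_m\ln\frac{1-\theta d_m}{\theta m}$ the unique point of $[0,+\infty)$ where the infimum is attained (with $f(0)=+\infty$), and $$f(b_* )=\theta s_m+\eta(1-\theta d_m)+(1-\theta d_m)\ln m+d_m\eta(\theta).$$ Moreover $x^{b_*}_i=0$ for $1\le i\le m$, $x^{b_*}_i=\frac{1}{b_*}\ln\frac{1-\theta d_m}{a_i\theta m}$ for $i>m$, and $$\sum_{i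=1}^{+\infty}x^{b_*}_ie^{-b_*x^{b_*}_i}=\theta\sum_{i=1}^{+\infty}e^{-b_*x^{b_*}_i}.$$
   Context: $\eta(x)=-x\ln x$ for $x>0$, $\eta(0)=0$. An $n$-tuple with $n=+\infty$ means a sequence. $\mathbf{1}_B$ is the indicator function of $B$; $f'(0^+)$ is the right derivative at $0$. *)

(* Defs.v *)
From Stdlib Require Import Reals Lra Lia.
From Coquelicot Require Import Coquelicot.
Open Scope R_scope.

Definition eta (x : R) : R := if Rlt_dec 0 x then - x * ln x else 0.

Definition convex_on (D : R -> Prop) (f : R -> R) : Prop :=
  forall x y t, D x -> D y -> 0 <= t <= 1 ->
    f (t * x + (1 - t) * y) <= t * f x + (1 - t) * f y.

Definition bk (a d s : nat -> R) (k : nat) : R :=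
  s (k - 1)%nat + d (k - 1)%nat * ln (a k).

Definition indB (a d s : nat -> R) (k : nat) (b : R) : R :=
  if Nat.eqb k 1 then (if Rle_dec (bk a d s 2) b then 1 else 0)
  else if Rle_dec (bk a d s (k + 1)) b then
         (if Rlt_dec b (bk a d s k) then 1 else 0)
       else 0.

Definition z0_term (a d s : nat -> R) (b : R) (k : nat) : R :=
  indB a d s k b * (INR k + d k * exp ((s k - b) / d k)).

Definition dF (n : nat) (a : nat -> R) (k : nat) : R := sum_n_m a (k + 1) n.
Definition sF (n : nat) (a : nat -> R) (k : nat) : R :=
  sum_n_m (fun i => eta (a i)) (k + 1) n.

Definition z0F (n : nat) (a : nat -> R) (b : R) : R :=
  if Req_EM_T b 0 then INR n
  else sum_n_m (z0_term a (dF n a) (sF n a) b) 1 (n - 1).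

Definition fF (n : nat) (a : nat -> R) (theta b : R) : R :=
  theta * b + ln (z0F n a b).

Definition feasibleF (n : nat) (a x : nat -> R) : Prop :=
  x 1%nat = 0 /\ (forall i, (1 <= i < n)%nat -> x i <= x (i + 1)%nat) /\
  sum_n_m (fun i => a i * x i) 1 n = 1.

Definition objF (n : nat) (b : R) (x : nat -> R) : R :=
  sum_n_m (fun i => exp (- b * x i)) 1 n.

Definition minimizerF (n : nat) (a : nat -> R) (b : R) (x : nat -> R) : Prop :=
  feasibleF n a x /\ forall y, feasibleF n a y -> objF n b x <= objF n b y.

Definition is_mF (n : nat) (a : nat -> R) (theta : R) (m : nat) : Prop :=
  (theta < 1 / dF n a 0 /\ m = 1%nat) \/
  (1 / dF n a 0 <= theta /\ (1 <= m <= n - 1)%nat /\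
   dF n a m + INR m * a m >= 1 / theta /\
   forall k, (1 <= k <= n - 1)%nat -> dF n a k + INR k * a k >= 1 / theta ->
     (k <= m)%nat).

Definition is_mtilde (n : nat) (a : nat -> R) (mt : nat) : Prop :=
  exists K, (1 <= K <= n - 1)%nat /\ a (n - K + 1)%nat = a n /\
    (forall k, (1 <= k <= n - 1)%nat -> a (n - k + 1)%nat = a n -> (k <= K)%nat) /\
    mt = (n - K)%nat.

Definition dI (a : nat -> R) (k : nat) : R := Series (fun j => a (k + 1 + j)%nat).
Definition sI (a : nat -> R) (k : nat) : R :=
  Series (fun j => eta (a (k + 1 + j)%nat)).

Definition z0I (a : nat -> R) (b : R) : R :=
  Series (fun j => z0_term a (dI a) (sI a) b (j + 1)%nat).

Definition fI (a : nat -> R) (theta b : R) : R := theta * b + ln (z0I a b).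

Definition feasibleI (a x : nat -> R) : Prop :=
  x 1%nat = 0 /\ (forall i, (1 <= i)%nat -> x i <= x (i + 1)%nat) /\
  is_series (fun j => a (j + 1)%nat * x (j + 1)%nat) 1.

Definition objI_terms (b : R) (x : nat -> R) : nat -> R :=
  fun j => exp (- b * x (j + 1)%nat).

(* minimizer of sum e^{-b x_i} (a series of positive terms; a divergent
   series is +oo and is never smaller) *)
Definition minimizerI (a : nat -> R) (b : R) (x : nat -> R) : Prop :=
  feasibleI a x /\ ex_series (objI_terms b x) /\
  forall y, feasibleI a y -> ex_series (objI_terms b y) ->
    Series (objI_terms b x) <= Series (objI_terms b y).

Definition is_mI (a : nat -> R) (theta : R) (m : nat) : Prop :=
  (theta < 1 / dI a 0 /\ m = 1%nat) \/
  (1 / dI a 0 <= theta /\ (1 <= m)%nat /\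
   dI a m + INR m * a m >= 1 / theta /\
   forall k, (1 <= k)%nat -> dI a k + INR k * a k >= 1 / theta -> (k <= m)%nat).

(* Main.v *)
Require Import Defs.
From Stdlib Require Import Reals Lra Lia.
From Coquelicot Require Import Coquelicot.
Open Scope R_scope.

Ltac toR := match goal with |- @eq _ ?x ?y => change (@eq R x y) end.

Lemma sum_le_loc (f g : nat -> R) (p q : nat) :
  (forall k, (p <= k <= q)%nat -> f k <= g k) -> sum_n_m f p q <= sum_n_m g p q.
Proof.
  intros H.
  rewrite (sum_n_m_ext_loc f (fun k => if andb (Nat.leb p k) (Nat.leb k q) then f k else 0)).
  2:{ intros k Hk. destruct Hk as [H1 H2]. apply Nat.leb_le in H1. apply Nat.leb_le in H2.
      rewrite H1, H2. reflexivity. }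
  rewrite (sum_n_m_ext_loc g (fun k => if andb (Nat.leb p k) (Nat.leb k q) then g k else 0)).
  2:{ intros k Hk. destruct Hk as [H1 H2]. apply Nat.leb_le in H1. apply Nat.leb_le in H2.
      rewrite H1, H2. reflexivity. }
  apply sum_n_m_le. intros k.
  destruct (Nat.leb p k) eqn:E1; destruct (Nat.leb k q) eqn:E2; simpl; try lra.
  apply H. apply Nat.leb_le in E1. apply Nat.leb_le in E2. lia.
Qed.

Lemma sum_zero_loc (f : nat -> R) (p q : nat) :
  (forall k, (p <= k <= q)%nat -> f k = 0) -> sum_n_m f p q = 0.
Proof.
  intros H. rewrite (sum_n_m_ext_loc f (fun _ => zero)). exact (sum_n_m_const_zero (G := R_AbelianMonoid) p q).
  intros k Hk. rewrite H; auto.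
Qed.

Lemma sum_single (f : nat -> R) (p q j : nat) :
  (p <= j <= q)%nat -> (forall k, (p <= k <= q)%nat -> k <> j -> f k = 0) ->
  sum_n_m f p q = f j.
Proof.
  revert j. induction q as [|q IH]; intros j Hj H.
  - assert (p = 0 /\ j = 0)%nat as [-> ->] by lia. apply sum_n_n.
  - destruct (Nat.eq_dec j (S q)) as [->|Hne].
    + rewrite sum_n_Sm by lia. rewrite sum_zero_loc. unfold plus; simpl. ring.
      intros k Hk. apply H; lia.
    + rewrite sum_n_Sm by lia. rewrite (IH j) by (try lia; intros; apply H; lia).
      rewrite (H (S q)) by lia. unfold plus; simpl. ring.
Qed.

Lemma sum_ge_single (f : nat -> R) (p q j : nat) :
  (p <= j <= q)%nat -> (forall k, (p <= k <= q)%nat -> 0 <= f k) ->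
  f j <= sum_n_m f p q.
Proof.
  intros Hj H.
  assert (E : sum_n_m (fun k => if Nat.eqb k j then f j else 0) p q = f j).
  { rewrite (sum_single _ p q j Hj). rewrite Nat.eqb_refl. reflexivity.
    intros k Hk Hkj. apply Nat.eqb_neq in Hkj. rewrite Hkj. auto. }
  rewrite <- E. apply sum_le_loc. intros k Hk. destruct (Nat.eqb k j) eqn:E2.
  + apply Nat.eqb_eq in E2; subst; lra.
  + apply H; auto.
Qed.

Lemma sum_pos_loc (f : nat -> R) (p q : nat) :
  (forall k, (p <= k <= q)%nat -> 0 <= f k) -> 0 <= sum_n_m f p q.
Proof.
  intros H. replace 0 with (sum_n_m (fun _ => 0) p q).
  apply sum_le_loc. exact H. exact (sum_n_m_const_zero (G := R_AbelianMonoid) p q).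
Qed.

Lemma sum_spos_loc (f : nat -> R) (p q : nat) :
  (p <= q)%nat -> (forall k, (p <= k <= q)%nat -> 0 < f k) -> 0 < sum_n_m f p q.
Proof.
  intros Hpq H. apply Rlt_le_trans with (f p). apply H; lia.
  apply sum_ge_single. lia. intros k Hk. left. apply H; auto.
Qed.

Lemma sum_ext_R (f g : nat -> R) p q :
  (forall k, f k = g k) -> sum_n_m f p q = sum_n_m g p q.
Proof. intros H. apply sum_n_m_ext. exact H. Qed.

Lemma sum_ext_loc_R (f g : nat -> R) p q :
  (forall k, (p <= k <= q)%nat -> f k = g k) -> sum_n_m f p q = sum_n_m g p q.
Proof. intros H. apply sum_n_m_ext_loc. exact H. Qed.

Lemma sum_plus_R (f g : nat -> R) p q :
  sum_n_m (fun k => f k + g k) p q = sum_n_m f p q + sum_n_m g p q.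
Proof. apply (sum_n_m_plus f g p q). Qed.

Lemma sum_scal_R (c : R) (f : nat -> R) p q :
  sum_n_m (fun k => c * f k) p q = c * sum_n_m f p q.
Proof. apply (sum_n_m_mult_l c f p q). Qed.

Lemma sum_opp_R (f : nat -> R) p q :
  sum_n_m (fun k => - f k) p q = - sum_n_m f p q.
Proof.
  toR. rewrite (sum_ext_R _ (fun k => (-1) * f k)) by (intros; ring).
  rewrite sum_scal_R. ring.
Qed.

Lemma sum_minus_R (f g : nat -> R) p q :
  sum_n_m (fun k => f k - g k) p q = sum_n_m f p q - sum_n_m g p q.
Proof.
  toR. unfold Rminus. rewrite sum_plus_R. rewrite sum_opp_R. reflexivity.
Qed.

Lemma sum_first (f : nat -> R) p q : (p <= q)%nat ->
  sum_n_m f p q = f p + sum_n_m f (S p) q.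
Proof. intros. rewrite sum_Sn_m by auto. reflexivity. Qed.

Lemma sum_last (f : nat -> R) p q : (p <= S q)%nat ->
  sum_n_m f p (S q) = sum_n_m f p q + f (S q).
Proof. intros. rewrite sum_n_Sm by auto. reflexivity. Qed.

Lemma sum_split (f : nat -> R) p m q : (p <= S m)%nat -> (m <= q)%nat ->
  sum_n_m f p q = sum_n_m f p m + sum_n_m f (S m) q.
Proof. intros. rewrite (sum_n_m_Chasles f p m q) by auto. reflexivity. Qed.

Lemma is_derive_sum (F : nat -> R -> R) (l : nat -> R) x p q :
  (forall i, (p <= i <= q)%nat -> is_derive (F i) x (l i)) ->
  is_derive (fun t => sum_n_m (fun i => F i t) p q) x (sum_n_m l p q).
Proof.
  induction q as [|q IH]; intros H.
  - destruct p.
    + rewrite sum_n_n. apply (is_derive_ext (F 0%nat)). intros; rewrite sum_n_n; auto.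
      apply H; lia.
    + rewrite sum_n_m_zero by lia.
      apply (is_derive_ext (fun _ => 0)). intros; rewrite sum_n_m_zero by lia; auto.
      apply is_derive_Reals. apply derivable_pt_lim_const.
  - destruct (Compare_dec.le_lt_dec p (S q)) as [Hp|Hp].
    + rewrite sum_last by auto.
      apply (is_derive_ext (fun t => sum_n_m (fun i => F i t) p q + F (S q) t)).
      intros; rewrite sum_last by auto; auto.
      apply (is_derive_plus (fun t => sum_n_m (fun i => F i t) p q) (F (S q))).
      apply IH; intros; apply H; lia. apply H; lia.
    + rewrite sum_n_m_zero by lia.
      apply (is_derive_ext (fun _ => 0)). intros; rewrite sum_n_m_zero by lia; auto.
      apply is_derive_Reals. apply derivable_pt_lim_const.
Qed.

Lemma ln_le_xm1 x : 0 < x -> ln x <= x - 1.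
Proof. intros. pose proof (exp_ineq1_le (ln x)). rewrite exp_ln in H0 by auto. lra. Qed.

Lemma squeeze_deriv (g phi : R -> R) x l d0 :
  0 < d0 -> phi x = g x -> derivable_pt_lim phi x l ->
  (forall y, Rabs (y - x) < d0 -> g x + l * (y - x) <= g y /\ g y <= phi y) ->
  derivable_pt_lim g x l.
Proof.
  intros Hd0 Heq Hphi Hb eps Heps.
  destruct (Hphi eps Heps) as [d Hd].
  assert (Hm : 0 < Rmin d d0) by (apply Rmin_pos; [apply cond_pos|auto]).
  exists (mkposreal _ Hm). intros h Hh0 Hh. simpl in Hh.
  assert (Hh1 : Rabs h < d) by (eapply Rlt_le_trans; [apply Hh|apply Rmin_l]).
  assert (Hh2 : Rabs h < d0) by (eapply Rlt_le_trans; [apply Hh|apply Rmin_r]).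
  specialize (Hd h Hh0 Hh1).
  destruct (Hb (x + h)) as [B1 B2]. replace (x + h - x) with h by ring. auto.
  replace (x + h - x) with h in B1 by ring.
  rewrite Heq in Hd.
  destruct (Rlt_or_le 0 h) as [Hp|Hn].
  - assert (l <= (g (x + h) - g x) / h).
    { apply Rmult_le_reg_r with h; auto. unfold Rdiv. rewrite Rmult_assoc, Rinv_l by lra. lra. }
    assert ((g (x + h) - g x) / h <= (phi (x + h) - g x) / h).
    { unfold Rdiv. apply Rmult_le_compat_r. left; apply Rinv_0_lt_compat; auto. lra. }
    apply Rabs_def2 in Hd. destruct Hd. apply Rabs_def1; lra.
  - assert (Hn' : h < 0) by (destruct Hn; auto; contradiction).
    assert ((g (x + h) - g x) / h <= l).
    { apply Rmult_le_reg_r with (- h). lra. unfold Rdiv.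
      replace ((g (x + h) - g x) * / h * - h) with (- (g (x + h) - g x)) by (field; lra). nra. }
    assert ((phi (x + h) - g x) / h <= (g (x + h) - g x) / h).
    { unfold Rdiv. assert (/ h < 0) by (apply Rinv_lt_0_compat; auto). nra. }
    apply Rabs_def2 in Hd. destruct Hd. apply Rabs_def1; lra.
Qed.

Lemma mvt_open (f df : R -> R) a b : a < b ->
  (forall c, a < c < b -> derivable_pt_lim f c (df c)) ->
  (forall c, a <= c <= b -> continuity_pt f c) ->
  exists c, a < c < b /\ f b - f a = df c * (b - a).
Proof.
  intros Hab Hd Hc.
  set (pr1 := fun c (P : a < c < b) => exist (fun l => derivable_pt_abs f c l) (df c) (Hd c P)).
  set (pr2 := fun c (P : a < c < b) => derivable_pt_id c).
  destruct (MVT f id a b pr1 pr2 Hab Hc (fun c _ => derivable_continuous_pt _ _ (derivable_pt_id c)))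
    as [c [P Heq]].
  exists c. split; auto.
  unfold pr1, pr2 in Heq. rewrite derive_pt_id in Heq.
  replace (derive_pt f c _) with (df c) in Heq by (unfold derive_pt; reflexivity).
  unfold id in Heq. lra.
Qed.

Lemma derivable_loc (f g : R -> R) x l d :
  0 < d -> (forall y, Rabs (y - x) < d -> f y = g y) ->
  derivable_pt_lim f x l -> derivable_pt_lim g x l.
Proof.
  intros Hd Heq Hf eps Heps. destruct (Hf eps Heps) as [e He].
  assert (Hm : 0 < Rmin e d) by (apply Rmin_pos; [apply cond_pos|auto]).
  exists (mkposreal _ Hm). intros h Hh0 Hh. simpl in Hh.
  assert (E1 : f (x + h) = g (x + h)).
  { apply Heq. replace (x + h - x) with h by ring. eapply Rlt_le_trans; [apply Hh|apply Rmin_r]. }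
  assert (E2 : f x = g x).
  { apply Heq. replace (x - x) with 0 by ring. rewrite Rabs_R0; auto. }
  rewrite <- E1, <- E2. apply He; auto. eapply Rlt_le_trans; [apply Hh|apply Rmin_l].
Qed.

Lemma continuity_loc (f g : R -> R) x d :
  0 < d -> (forall y, Rabs (y - x) < d -> f y = g y) ->
  continuity_pt f x -> continuity_pt g x.
Proof.
  intros Hd Heq Hf eps Heps. destruct (Hf eps Heps) as [e [He1 He2]].
  exists (Rmin e d). split. apply Rmin_pos; auto.
  intros y [Hy1 Hy2]. simpl in *. unfold R_dist in *.
  assert (E1 : f y = g y).
  { apply Heq. eapply Rlt_le_trans; [apply Hy2|apply Rmin_r]. }
  assert (E2 : f x = g x).
  { apply Heq. replace (x - x) with 0 by ring. rewrite Rabs_R0; auto. }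
  rewrite <- E1, <- E2. apply He2. split; auto. eapply Rlt_le_trans; [apply Hy2|apply Rmin_l].
Qed.

Lemma mvt_right (f df : R -> R) a b : a < b ->
  (forall c, a < c < b -> derivable_pt_lim f c (df c)) ->
  (forall c, a < c <= b -> continuity_pt f c) ->
  (forall eps, 0 < eps -> exists d, 0 < d /\ forall t, a < t < a + d -> Rabs (f t - f a) < eps) ->
  exists c, a < c < b /\ f b - f a = df c * (b - a).
Proof.
  intros Hab Hd Hc Hr.
  set (g := fun t => f (Rmax a t)).
  assert (Hga : g a = f a) by (unfold g; rewrite Rmax_left; lra).
  assert (Hgb : g b = f b) by (unfold g; rewrite Rmax_right; lra).
  destruct (mvt_open g df a b Hab) as [c [Hc1 Hc2]].
  - intros c Hc1. apply (derivable_loc f g c (df c) (c - a)). lra.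
    intros y Hy. unfold g. rewrite Rmax_right; auto. unfold Rabs in Hy; destruct (Rcase_abs _); lra.
    apply Hd; auto.
  - intros c [Hc1 Hc2]. destruct (Req_dec c a) as [->|Hne].
    + intros eps Heps. destruct (Hr eps Heps) as [d [Hd0 Hd1]].
      exists d. split; auto. intros y [_ Hy]. simpl in *. unfold R_dist in *.
      unfold g. rewrite (Rmax_left a a) by lra.
      destruct (Rle_dec y a).
      * rewrite Rmax_left by auto. replace (f a - f a) with 0 by ring. rewrite Rabs_R0; lra.
      * rewrite Rmax_right by lra. apply Hd1. unfold Rabs in Hy; destruct (Rcase_abs _); lra.
    + apply (continuity_loc f g c (c - a)). lra.
      intros y Hy. unfold g. rewrite Rmax_right; auto. unfold Rabs in Hy; destruct (Rcase_abs _); lra.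
      apply Hc; lra.
  - exists c. split; auto. rewrite <- Hga, <- Hgb. auto.
Qed.

Lemma convex_from_deriv (f df : R -> R) x y t :
  x < y -> 0 <= t <= 1 ->
  (forall c, x < c < y -> derivable_pt_lim f c (df c)) ->
  (forall c, x < c <= y -> continuity_pt f c) ->
  (forall eps, 0 < eps -> exists d, 0 < d /\ forall s, x < s < x + d -> Rabs (f s - f x) < eps) ->
  (forall u v, x < u -> u <= v -> v < y -> df u <= df v) ->
  f (t * x + (1 - t) * y) <= t * f x + (1 - t) * f y.
Proof.
  intros Hxy Ht Hd Hc Hr Hm.
  destruct (Req_dec t 0) as [->|Ht0].
  { replace (0 * x + (1 - 0) * y) with y by ring. lra. }
  destruct (Req_dec t 1) as [->|Ht1].
  { replace (1 * x + (1 - 1) * y) with x by ring. lra. }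
  set (z := t * x + (1 - t) * y).
  assert (Hz1 : x < z) by (unfold z; nra).
  assert (Hz2 : z < y) by (unfold z; nra).
  destruct (mvt_right f df x z Hz1) as [c1 [Hc1 E1]].
  - intros; apply Hd; lra.
  - intros; apply Hc; lra.
  - auto.
  - destruct (mvt_open f df z y Hz2) as [c2 [Hc2 E2]].
    + intros; apply Hd; lra.
    + intros; apply Hc; lra.
    + assert (df c1 <= df c2) by (apply Hm; lra).
      assert (Ez1 : z - x = (1 - t) * (y - x)) by (unfold z; ring).
      assert (Ez2 : y - z = t * (y - x)) by (unfold z; ring).
      rewrite Ez1 in E1. rewrite Ez2 in E2.
      assert (t * f x + (1 - t) * f y - f z = t * (1 - t) * (y - x) * (df c2 - df c1)).
      { replace (t * f x + (1 - t) * f y - f z) with (- t * (f z - f x) + (1 - t) * (f y - f z)) by ring.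
        rewrite E1, E2. ring. }
      assert (0 <= t * (1 - t) * (y - x) * (df c2 - df c1)).
      { apply Rmult_le_pos. apply Rmult_le_pos. nra. lra. lra. }
      fold z. lra.
Qed.

Lemma exp_le_m x y : x <= y -> exp x <= exp y.
Proof. intros [H|H]. left; apply exp_increasing; auto. subst; lra. Qed.

Definition Dt (ai c z : R) : R :=
  exp (- z) - ai / Rmax c ai + ai / c * (z - ln (Rmax c ai / ai)).

Lemma exp_neg_ln_ratio M ai : 0 < ai -> 0 < M -> exp (- ln (M / ai)) = ai / M.
Proof.
  intros. rewrite exp_Ropp, exp_ln. field. split; lra. apply Rdiv_lt_0_compat; auto.
Qed.

Lemma Dt_nonneg ai c z : 0 < ai -> 0 < c -> 0 <= z -> 0 <= Dt ai c z.
Proof.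
  intros Ha Hc Hz. unfold Dt. destruct (Rle_dec ai c) as [Hle|Hlt].
  - rewrite Rmax_left by auto.
    assert (Ey : exp (- ln (c / ai)) = ai / c) by (apply exp_neg_ln_ratio; lra).
    set (y := ln (c / ai)) in *.
    assert (E : exp (- z) = exp (- y) * exp (- (z - y))) by (rewrite <- exp_plus; f_equal; ring).
    rewrite Ey in E.
    pose proof (exp_ineq1_le (- (z - y))).
    assert (0 < ai / c) by (apply Rdiv_lt_0_compat; lra).
    rewrite E. nra.
  - rewrite Rmax_right by lra. replace (ai / ai) with 1 by (field; lra). rewrite ln_1.
    pose proof (exp_ineq1_le (- z)).
    assert (1 <= ai / c) by (apply Rcomplements.Rle_div_r; lra).
    replace (ai / ai) with 1 by (field; lra). nra.
Qed.

Lemma Dt_pos ai c z : 0 < ai -> 0 < c -> 0 <= z -> z <> ln (Rmax c ai / ai) -> 0 < Dt ai c z.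
Proof.
  intros Ha Hc Hz Hne. unfold Dt. destruct (Rle_dec ai c) as [Hle|Hlt].
  - rewrite Rmax_left in * by auto.
    assert (Ey : exp (- ln (c / ai)) = ai / c) by (apply exp_neg_ln_ratio; lra).
    set (y := ln (c / ai)) in *.
    assert (E : exp (- z) = exp (- y) * exp (- (z - y))) by (rewrite <- exp_plus; f_equal; ring).
    rewrite Ey in E.
    assert (- (z - y) <> 0) by lra.
    pose proof (exp_ineq1 (- (z - y)) H).
    assert (0 < ai / c) by (apply Rdiv_lt_0_compat; lra).
    rewrite E. nra.
  - rewrite Rmax_right in * by lra. replace (ai / ai) with 1 in * by (field; lra). rewrite ln_1 in *.
    assert (- z <> 0) by lra.
    pose proof (exp_ineq1 (- z) H).
    assert (1 <= ai / c) by (apply Rcomplements.Rle_div_r; lra).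
    nra.
Qed.

Definition PhiF (n : nat) (a : nat -> R) (c : R) : R :=
  sum_n_m (fun i => a i * ln (Rmax c (a i) / a i)) 2 n.
Definition ZsF (n : nat) (a : nat -> R) (c : R) : R :=
  sum_n_m (fun i => a i / Rmax c (a i)) 2 n.
Definition ycand (a : nat -> R) (c : R) (i : nat) : R :=
  if Nat.eqb i 1 then 0 else ln (Rmax c (a i) / a i).

Lemma key_sum n a c z : 0 < c ->
  (forall i, (2 <= i <= n)%nat -> 0 < a i /\ 0 <= z i) ->
  sum_n_m (fun i => exp (- z i)) 2 n - (ZsF n a c - / c * (sum_n_m (fun i => a i * z i) 2 n - PhiF n a c))
  = sum_n_m (fun i => Dt (a i) c (z i)) 2 n.
Proof.
  intros Hc H. unfold Dt, ZsF, PhiF.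
  rewrite (sum_ext_R (fun i => exp (- z i) - a i / Rmax c (a i) + a i / c * (z i - ln (Rmax c (a i) / a i)))
            (fun i => (exp (- z i) - a i / Rmax c (a i)) + / c * (a i * z i - a i * ln (Rmax c (a i) / a i))))
    by (intros; unfold Rdiv; ring).
  rewrite sum_plus_R, sum_minus_R, sum_scal_R, sum_minus_R. ring.
Qed.

Lemma key_ineq n a c z : 0 < c ->
  (forall i, (2 <= i <= n)%nat -> 0 < a i /\ 0 <= z i) ->
  ZsF n a c - / c * (sum_n_m (fun i => a i * z i) 2 n - PhiF n a c)
  <= sum_n_m (fun i => exp (- z i)) 2 n.
Proof.
  intros Hc H. pose proof (key_sum n a c z Hc H).
  assert (0 <= sum_n_m (fun i => Dt (a i) c (z i)) 2 n).
  { apply sum_pos_loc. intros k Hk. destruct (H k Hk). apply Dt_nonneg; auto. }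
  lra.
Qed.

Lemma key_strict n a c z j : 0 < c ->
  (forall i, (2 <= i <= n)%nat -> 0 < a i /\ 0 <= z i) ->
  (2 <= j <= n)%nat -> z j <> ln (Rmax c (a j) / a j) ->
  ZsF n a c - / c * (sum_n_m (fun i => a i * z i) 2 n - PhiF n a c)
  < sum_n_m (fun i => exp (- z i)) 2 n.
Proof.
  intros Hc H Hj Hne. pose proof (key_sum n a c z Hc H).
  assert (Dt (a j) c (z j) <= sum_n_m (fun i => Dt (a i) c (z i)) 2 n).
  { apply (sum_ge_single (fun i => Dt (a i) c (z i))); auto. intros k Hk. destruct (H k Hk). apply Dt_nonneg; auto. }
  assert (0 < Dt (a j) c (z j)) by (destruct (H j Hj); apply Dt_pos; auto).
  lra.
Qed.

Definition HypF (n : nat) (a : nat -> R) : Prop :=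
  (2 <= n)%nat /\ (forall i, (1 <= i <= n)%nat -> 0 < a i) /\
  (forall i, (1 <= i < n)%nat -> a (i + 1)%nat <= a i).


Lemma amon n a : HypF n a -> forall i j, (1 <= i <= j)%nat -> (j <= n)%nat -> a j <= a i.
Proof.
  intros [Hn [Hp Hm]] i j Hij Hjn. induction j as [|j IH].
  - lia.
  - destruct (Nat.eq_dec i (S j)) as [->|Hne]. lra.
    apply Rle_trans with (a j). replace (S j) with (j + 1)%nat by lia. apply Hm; lia.
    apply IH; lia.
Qed.

Lemma eta_pos x : 0 < x -> eta x = - x * ln x.
Proof. intros. unfold eta. destruct (Rlt_dec 0 x); [reflexivity|lra]. Qed.

Lemma d_peel n a k : (1 <= k <= n)%nat -> dF n a (k - 1) = a k + dF n a k.
Proof.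
  intros Hk. unfold dF. replace (k - 1 + 1)%nat with k by lia. toR.
  rewrite sum_first by lia. replace (k + 1)%nat with (S k) by lia. reflexivity.
Qed.

Lemma s_peel n a k : (1 <= k <= n)%nat -> sF n a (k - 1) = eta (a k) + sF n a k.
Proof.
  intros Hk. unfold sF. replace (k - 1 + 1)%nat with k by lia. toR.
  rewrite (sum_first (fun i => eta (a i))) by lia. replace (k + 1)%nat with (S k) by lia. reflexivity.
Qed.

Lemma d_pos n a k : HypF n a -> (k < n)%nat -> 0 < dF n a k.
Proof.
  intros [Hn [Hp Hm]] Hk. unfold dF. apply sum_spos_loc. lia. intros; apply Hp; lia.
Qed.

Lemma d_nonneg n a k : HypF n a -> 0 <= dF n a k.
Proof.
  intros [Hn [Hp Hm]]. unfold dF. apply sum_pos_loc. intros; left; apply Hp; lia.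
Qed.

Lemma d_n n a : dF n a n = 0.
Proof. unfold dF. rewrite sum_n_m_zero by lia. reflexivity. Qed.
Lemma s_n n a : sF n a n = 0.
Proof. unfold sF. rewrite sum_n_m_zero by lia. reflexivity. Qed.

Definition Bv n a k := sF n a k + dF n a k * ln (a k).

Lemma bk_eq n a k : HypF n a -> (1 <= k <= n)%nat -> bk a (dF n a) (sF n a) k = Bv n a k.
Proof.
  intros H Hk. pose proof H as [Hn [Hp Hm]]. unfold bk, Bv.
  rewrite d_peel, s_peel by auto. rewrite eta_pos by (apply Hp; lia). ring.
Qed.

Lemma bk_succ n a k : bk a (dF n a) (sF n a) (k + 1) = sF n a k + dF n a k * ln (a (k + 1)%nat).
Proof. unfold bk. replace (k + 1 - 1)%nat with k by lia. reflexivity. Qed.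

Lemma B_n n a : Bv n a n = 0.
Proof. unfold Bv. rewrite d_n, s_n. ring. Qed.

Lemma B_succ n a k : HypF n a -> (0 <= k < n)%nat -> Bv n a (k + 1) = sF n a k + dF n a k * ln (a (k + 1)%nat).
Proof. intros H Hk. rewrite <- bk_eq by (auto; lia). apply bk_succ. Qed.

Lemma B_step n a k : HypF n a -> (1 <= k < n)%nat -> Bv n a (k + 1) <= Bv n a k.
Proof.
  intros H Hk. pose proof H as [Hn [Hp Hm]]. rewrite B_succ by (auto; lia). unfold Bv.
  assert (0 <= dF n a k) by (apply d_nonneg; auto).
  assert (ln (a (k + 1)%nat) <= ln (a k)) by (apply ln_le; [apply Hp; lia| apply Hm; lia]).
  nra.
Qed.

Lemma B_mono n a : HypF n a -> forall i j, (1 <= i <= j)%nat -> (j <= n)%nat -> Bv n a j <= Bv n a i.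
Proof.
  intros H i j Hij Hjn. induction j as [|j IH]. lia.
  destruct (Nat.eq_dec i (S j)) as [->|Hne]. lra.
  apply Rle_trans with (Bv n a j). replace (S j) with (j + 1)%nat by lia. apply B_step; auto; lia.
  apply IH; lia.
Qed.

Lemma piece_exists n a b : HypF n a -> 0 < b ->
  exists k, (1 <= k <= n - 1)%nat /\ Bv n a (k + 1) <= b /\ ((2 <= k)%nat -> b < Bv n a k).
Proof.
  intros H Hb. pose proof H as [Hn [Hp Hm]].
  destruct (Rle_dec (Bv n a 2) b) as [Hle|Hlt].
  - exists 1%nat. split. lia. split. auto. intros; lia.
  - assert (Gen : forall t j, (j + t = n)%nat -> (2 <= j)%nat -> b < Bv n a j ->
       exists k, (1 <= k <= n - 1)%nat /\ Bv n a (k + 1) <= b /\ ((2 <= k)%nat -> b < Bv n a k)).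
    { induction t as [|t IH]; intros j Hjt Hj Hbj.
      - rewrite Nat.add_0_r in Hjt. subst j. rewrite B_n in Hbj. lra.
      - destruct (Rle_dec (Bv n a (j + 1)) b) as [Hle2|Hlt2].
        + exists j. split. lia. split; auto.
        + apply (IH (j + 1)%nat); try lia. lra. }
    apply (Gen (n - 2)%nat 2%nat); try lia. lra.
Qed.

Definition candF n a b c := a n <= c /\ PhiF n a c = b /\ z0F n a b = 1 + ZsF n a c.

Lemma Rmax_ratio_ge1 c x : 0 < x -> 1 <= Rmax c x / x.
Proof.
  intros. apply Rcomplements.Rle_div_r; auto. rewrite Rmult_1_l. apply Rmax_r.
Qed.

Lemma piece_cand n a b k : HypF n a -> 0 < b ->
  (1 <= k <= n - 1)%nat -> Bv n a (k + 1) <= b -> ((2 <= k)%nat -> b < Bv n a k) ->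
  let c := exp ((b - sF n a k) / dF n a k) in
  candF n a b c.
Proof.
  intros H Hb Hk Hlo Hhi c. pose proof H as [Hn [Hp Hm]].
  assert (Hd : 0 < dF n a k) by (apply d_pos; auto; lia).
  assert (Hc0 : 0 < c) by apply exp_pos.
  assert (Hlnc : ln c = (b - sF n a k) / dF n a k) by (unfold c; apply ln_exp).
  assert (Hclo : a (k + 1)%nat <= c).
  { rewrite B_succ in Hlo by (auto; lia).
    rewrite <- (exp_ln (a (k+1)%nat)) by (apply Hp; lia). unfold c.
    apply exp_le_m. apply Rcomplements.Rle_div_r; auto. lra. }
  assert (Hchi : (2 <= k)%nat -> c < a k).
  { intros Hk2. specialize (Hhi Hk2). unfold Bv in Hhi.
    rewrite <- (exp_ln (a k)) by (apply Hp; lia). unfold c.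
    apply exp_increasing. apply Rcomplements.Rlt_div_l; auto. lra. }
  assert (Hlow : forall i, (2 <= i <= k)%nat -> Rmax c (a i) = a i).
  { intros i Hi. apply Rmax_right. left. apply Rlt_le_trans with (a k). apply Hchi; lia.
    apply (amon n a H); lia. }
  assert (Hup : forall i, (k + 1 <= i <= n)%nat -> Rmax c (a i) = c).
  { intros i Hi. apply Rmax_left. apply Rle_trans with (a (k+1)%nat); auto.
    apply (amon n a H); lia. }
  split; [|split].
  - apply Rle_trans with (a (k+1)%nat); auto. apply (amon n a H); lia.
  - unfold PhiF. toR. rewrite (sum_split _ 2 k n) by lia.
    rewrite sum_zero_loc.
    2:{ intros i Hi. rewrite Hlow by auto. replace (a i / a i) with 1 by (field; apply Rgt_not_eq, Hp; lia).
        rewrite ln_1. ring. }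
    rewrite (sum_ext_loc_R _ (fun i => ln c * a i + eta (a i))).
    2:{ intros i Hi. rewrite Hup by lia. rewrite eta_pos by (apply Hp; lia).
        rewrite ln_div by (auto; apply Hp; lia). ring. }
    rewrite sum_plus_R, sum_scal_R.
    replace (sum_n_m a (S k) n) with (dF n a k) by (unfold dF; f_equal; lia).
    replace (sum_n_m (fun i => eta (a i)) (S k) n) with (sF n a k) by (unfold sF; f_equal; lia).
    rewrite Hlnc. field. lra.
  - unfold z0F. destruct (Req_EM_T b 0) as [E|_]. lra.
    assert (Hzero : forall j, (1 <= j <= n - 1)%nat -> j <> k ->
       z0_term a (dF n a) (sF n a) b j = 0).
    { intros j Hj Hjk. unfold z0_term, indB. destruct (Nat.eqb j 1) eqn:Ej.
      - apply Nat.eqb_eq in Ej; subst j. rewrite bk_eq by (auto; lia).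
        destruct (Rle_dec (Bv n a 2) b) as [Hr|Hr]; [|ring].
        exfalso. assert (Bv n a k <= Bv n a 2) by (apply (B_mono n a H); lia).
        specialize (Hhi ltac:(lia)). lra.
      - rewrite (bk_eq n a (j + 1)) by (auto; lia). rewrite (bk_eq n a j) by (auto; lia).
        destruct (Rle_dec (Bv n a (j + 1)) b) as [Hr|Hr]; [|ring].
        destruct (Rlt_dec b (Bv n a j)) as [Hr2|Hr2]; [|ring].
        exfalso. apply Nat.eqb_neq in Ej.
        destruct (Compare_dec.le_lt_dec j k) as [Hjk2|Hjk2].
        + assert (Bv n a k <= Bv n a (j + 1)) by (apply (B_mono n a H); lia).
          specialize (Hhi ltac:(lia)). lra.
        + assert (Bv n a j <= Bv n a (k + 1)) by (apply (B_mono n a H); lia). lra. }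
    rewrite (sum_single _ 1 (n - 1) k) by (auto; lia).
    unfold z0_term.
    assert (Hind : indB a (dF n a) (sF n a) k b = 1).
    { unfold indB. destruct (Nat.eqb k 1) eqn:Ek.
      - apply Nat.eqb_eq in Ek; subst k. rewrite bk_eq by (auto; lia).
        destruct (Rle_dec (Bv n a 2) b); [reflexivity|]. exfalso. apply n0. exact Hlo.
      - apply Nat.eqb_neq in Ek. rewrite (bk_eq n a (k + 1)) by (auto; lia).
        rewrite (bk_eq n a k) by (auto; lia).
        destruct (Rle_dec (Bv n a (k + 1)) b); [|contradiction].
        destruct (Rlt_dec b (Bv n a k)); [reflexivity|]. exfalso; apply n0; apply Hhi; lia. }
    rewrite Hind.
    assert (Hex : exp ((sF n a k - b) / dF n a k) = / c).
    { unfold c. rewrite <- exp_Ropp. f_equal. field. lra. }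
    rewrite Hex. unfold ZsF. toR. rewrite (sum_split _ 2 k n) by lia.
    rewrite (sum_ext_loc_R (fun i => a i / Rmax c (a i)) (fun _ => 1) 2 k).
    2:{ intros i Hi. rewrite Hlow by auto. field. apply Rgt_not_eq, Hp; lia. }
    rewrite (sum_ext_loc_R (fun i => a i / Rmax c (a i)) (fun i => / c * a i) (S k) n).
    2:{ intros i Hi. rewrite Hup by lia. unfold Rdiv. ring. }
    rewrite sum_scal_R, sum_n_m_const.
    replace (sum_n_m a (S k) n) with (dF n a k) by (unfold dF; f_equal; lia).
    replace (S k - 2)%nat with (k - 1)%nat by lia.
    replace (INR k) with (1 + INR (k - 1)) by (replace k with (S (k - 1)) at 2 by lia; rewrite S_INR; ring).
    field. lra.
Qed.

Lemma cand_exists n a b : HypF n a -> 0 < b -> exists c, candF n a b c.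
Proof.
  intros H Hb. destruct (piece_exists n a b H Hb) as [k [Hk [Hlo Hhi]]].
  eexists. apply (piece_cand n a b k H Hb Hk Hlo Hhi).
Qed.

Lemma Rmax_mono_l c c' x : c <= c' -> Rmax c x <= Rmax c' x.
Proof. intros. unfold Rmax. destruct (Rle_dec c x); destruct (Rle_dec c' x); lra. Qed.

Lemma Rmax_pos_l c x : 0 < x -> 0 < Rmax c x.
Proof. intros. apply Rlt_le_trans with x; auto. apply Rmax_r. Qed.

Lemma an_pos n a : HypF n a -> 0 < a n.
Proof. intros [Hn [Hp _]]. apply Hp; lia. Qed.

Lemma Phi_slope n a c c' : HypF n a -> a n <= c -> c <= c' ->
  a n * ln (c' / c) <= PhiF n a c' - PhiF n a c.
Proof.
  intros H Hc Hcc. pose proof H as [Hn [Hp Hm]].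
  assert (Han : 0 < a n) by (apply Hp; lia).
  assert (E : forall x, PhiF n a x = sum_n_m (fun i => a i * ln (Rmax x (a i) / a i)) 2 (n - 1)
                     + a n * ln (Rmax x (a n) / a n)).
  { intros x. unfold PhiF. destruct n as [|m]; [lia|]. replace (S m - 1)%nat with m by lia.
    rewrite sum_last by lia. reflexivity. }
  rewrite !E.
  assert (sum_n_m (fun i => a i * ln (Rmax c (a i) / a i)) 2 (n - 1)
          <= sum_n_m (fun i => a i * ln (Rmax c' (a i) / a i)) 2 (n - 1)).
  { apply sum_le_loc. intros k Hk. apply Rmult_le_compat_l. left; apply Hp; lia.
    apply ln_le. apply Rdiv_lt_0_compat. apply Rmax_pos_l, Hp; lia. apply Hp; lia.
    unfold Rdiv. apply Rmult_le_compat_r. left; apply Rinv_0_lt_compat, Hp; lia.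
    apply Rmax_mono_l; auto. }
  rewrite (Rmax_left c), (Rmax_left c') by lra.
  rewrite !ln_div by lra. lra.
Qed.

Lemma Phi_mono n a c c' : HypF n a -> a n <= c -> c <= c' -> PhiF n a c <= PhiF n a c'.
Proof.
  intros H Hc Hcc. pose proof (Phi_slope n a c c' H Hc Hcc).
  pose proof (an_pos n a H).
  assert (0 <= ln (c' / c)).
  { rewrite <- ln_1. apply ln_le. lra. apply Rcomplements.Rle_div_r; lra. }
  nra.
Qed.

Lemma Phi_strict n a c c' : HypF n a -> a n <= c -> c < c' -> PhiF n a c < PhiF n a c'.
Proof.
  intros H Hc Hcc. pose proof (Phi_slope n a c c' H Hc (Rlt_le _ _ Hcc)).
  pose proof (an_pos n a H).
  assert (0 < ln (c' / c)).
  { rewrite <- ln_1. apply ln_increasing. lra. apply Rcomplements.Rlt_div_r; lra. }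
  nra.
Qed.

Lemma cand_unique n a b c c' : HypF n a -> candF n a b c -> candF n a b c' -> c = c'.
Proof.
  intros H [H1 [H2 H3]] [H1' [H2' H3']].
  destruct (Rtotal_order c c') as [Hl|[He|Hg]]; auto.
  - pose proof (Phi_strict n a c c' H H1 Hl). lra.
  - pose proof (Phi_strict n a c' c H H1' Hg). lra.
Qed.

Lemma cand_mono n a b b' c c' : HypF n a -> b < b' -> candF n a b c -> candF n a b' c' -> c < c'.
Proof.
  intros H Hb [H1 [H2 H3]] [H1' [H2' H3']].
  destruct (Rlt_or_le c c') as [Hl|Hg]; auto.
  pose proof (Phi_mono n a c' c H H1' Hg). lra.
Qed.

Lemma cand_pos n a b c : HypF n a -> candF n a b c -> 0 < c.
Proof. intros H [H1 _]. pose proof (an_pos n a H). lra. Qed.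

Lemma Zs_nonneg n a c : HypF n a -> 0 <= ZsF n a c.
Proof.
  intros [Hn [Hp Hm]]. unfold ZsF. apply sum_pos_loc. intros k Hk.
  left. apply Rdiv_lt_0_compat. apply Hp; lia. apply Rmax_pos_l, Hp; lia.
Qed.

Lemma z0_ge1 n a b c : HypF n a -> candF n a b c -> 1 <= z0F n a b.
Proof. intros H Hc. destruct Hc as [_ [_ ->]]. pose proof (Zs_nonneg n a c H). lra. Qed.

Lemma z0_lower n a b b' c c' : HypF n a -> candF n a b c -> candF n a b' c' ->
  z0F n a b - (b' - b) / c <= z0F n a b'.
Proof.
  intros H Hc Hc'. pose proof H as [Hn [Hp Hm]].
  pose proof (cand_pos n a b c H Hc) as Hc0. pose proof (cand_pos n a b' c' H Hc') as Hc0'.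
  destruct Hc as [_ [Pc Zc]]. destruct Hc' as [_ [Pc' Zc']].
  pose proof (key_ineq n a c (fun i => ln (Rmax c' (a i) / a i)) Hc0) as K.
  rewrite (sum_ext_loc_R (fun i => exp (- ln (Rmax c' (a i) / a i))) (fun i => a i / Rmax c' (a i))) in K.
  2:{ intros i Hi. apply exp_neg_ln_ratio. apply Hp; lia. apply Rmax_pos_l, Hp; lia. }
  fold (ZsF n a c') in K. fold (PhiF n a c') in K.
  rewrite Zc, Zc'. rewrite Pc, Pc' in K. unfold Rdiv in *.
  assert (ZsF n a c - / c * (b' - b) <= ZsF n a c').
  { apply K. intros i Hi. split. apply Hp; lia. rewrite <- ln_1. apply ln_le. lra.
    apply Rmax_ratio_ge1, Hp; lia. }
  lra.
Qed.

Definition phiU (n : nat) (a : nat -> R) (b c t : R) : R :=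
  1 + sum_n_m (fun i => exp (- (t / b) * ln (Rmax c (a i) / a i))) 2 n.

Lemma z0_upper n a b b' c c' : HypF n a -> 0 < b -> 0 < b' -> candF n a b c -> candF n a b' c' ->
  z0F n a b' <= phiU n a b c b'.
Proof.
  intros H Hb Hb' Hc Hc'. pose proof H as [Hn [Hp Hm]].
  pose proof (cand_pos n a b c H Hc) as Hc0. pose proof (cand_pos n a b' c' H Hc') as Hc0'.
  destruct Hc as [_ [Pc Zc]]. destruct Hc' as [_ [Pc' Zc']].
  pose proof (key_ineq n a c' (fun i => b' / b * ln (Rmax c (a i) / a i)) Hc0') as K.
  rewrite (sum_ext_R (fun i => a i * (b' / b * ln (Rmax c (a i) / a i)))
                     (fun i => b' / b * (a i * ln (Rmax c (a i) / a i)))) in K by (intros; ring).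
  rewrite sum_scal_R in K. fold (PhiF n a c) in K. rewrite Pc, Pc' in K.
  replace (b' / b * b - b') with 0 in K by (field; lra).
  rewrite Zc'. unfold phiU.
  rewrite (sum_ext_R (fun i => exp (- (b' / b) * ln (Rmax c (a i) / a i)))
                      (fun i => exp (- (b' / b * ln (Rmax c (a i) / a i))))) by (intros; f_equal; ring).
  assert (ZsF n a c' - / c' * 0 <= sum_n_m (fun i => exp (- (b' / b * ln (Rmax c (a i) / a i)))) 2 n).
  { apply K. intros i Hi. split. apply Hp; lia. apply Rmult_le_pos.
    apply Rdiv_le_0_compat; lra. rewrite <- ln_1. apply ln_le. lra. apply Rmax_ratio_ge1, Hp; lia. }
  lra.
Qed.

Lemma phiU_at n a b c : HypF n a -> 0 < b -> phiU n a b c b = 1 + ZsF n a c.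
Proof.
  intros H Hb. pose proof H as [Hn [Hp Hm]]. unfold phiU, ZsF. f_equal.
  apply sum_ext_loc_R. intros i Hi. replace (- (b / b) * ln (Rmax c (a i) / a i)) with (- ln (Rmax c (a i) / a i)) by (field; lra).
  apply exp_neg_ln_ratio. apply Hp; lia. apply Rmax_pos_l, Hp; lia.
Qed.

Lemma phiU_deriv n a b c : HypF n a -> 0 < b -> 0 < c -> PhiF n a c = b ->
  derivable_pt_lim (phiU n a b c) b (- / c).
Proof.
  intros H Hb Hc Pc. pose proof H as [Hn [Hp Hm]]. apply is_derive_Reals.
  unfold phiU.
  apply (is_derive_ext (fun t => 1 + sum_n_m (fun i => (fun i t => exp (- (t / b) * ln (Rmax c (a i) / a i))) i t) 2 n)).
  { intros; reflexivity. }
  replace (- / c) with (0 + sum_n_m (fun i => exp (- (b / b) * ln (Rmax c (a i) / a i)) * (- / b * ln (Rmax c (a i) / a i))) 2 n).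
  - apply (is_derive_plus (fun _ => 1)). apply is_derive_Reals, derivable_pt_lim_const.
    apply is_derive_sum. intros i Hi.
    apply is_derive_Reals.
    apply (derivable_pt_lim_comp (fun t => - (t / b) * ln (Rmax c (a i) / a i)) exp).
    + replace (- / b * ln (Rmax c (a i) / a i)) with (- / b * ln (Rmax c (a i) / a i)) by ring.
      apply is_derive_Reals. auto_derive; auto. field. lra.
    + apply derivable_pt_lim_exp.
  - rewrite (sum_ext_loc_R _ (fun i => - / b * / c * (a i * ln (Rmax c (a i) / a i)))).
    + rewrite sum_scal_R. fold (PhiF n a c). rewrite Pc. field. split; lra.
    + intros i Hi. replace (- (b / b) * ln (Rmax c (a i) / a i)) with (- ln (Rmax c (a i) / a i)) by (field; lra).
      assert (0 < a i) by (apply Hp; lia).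
      rewrite exp_neg_ln_ratio by (auto; apply Rmax_pos_l; auto).
      unfold Rmax. destruct (Rle_dec c (a i)).
      * replace (a i / a i) with 1 by (field; lra). rewrite ln_1. ring.
      * field. split; lra.
Qed.

Lemma z0_deriv n a b c : HypF n a -> 0 < b -> candF n a b c ->
  derivable_pt_lim (z0F n a) b (- / c).
Proof.
  intros H Hb Hc. pose proof (cand_pos n a b c H Hc) as Hc0.
  apply (squeeze_deriv (z0F n a) (phiU n a b c) b (- / c) b Hb).
  - rewrite phiU_at by auto. destruct Hc as [_ [_ Z]]. auto.
  - apply phiU_deriv; auto. apply Hc.
  - intros y Hy. assert (Hy0 : 0 < y) by (unfold Rabs in Hy; destruct (Rcase_abs _); lra).
    destruct (cand_exists n a y H Hy0) as [c' Hc'].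
    split.
    + pose proof (z0_lower n a b y c c' H Hc Hc'). unfold Rdiv in H0. lra.
    + apply (z0_upper n a b y c c'); auto.
Qed.

Lemma f_deriv_gen (z0 : R -> R) th b l : 0 < z0 b -> derivable_pt_lim z0 b l ->
  derivable_pt_lim (fun t => th * t + ln (z0 t)) b (th + l / z0 b).
Proof.
  intros Hz Hd.
  apply (derivable_pt_lim_plus (fun t => th * t) (comp ln z0)).
  - apply is_derive_Reals. auto_derive; auto. ring.
  - replace (l / z0 b) with (/ z0 b * l) by (unfold Rdiv; ring).
    apply derivable_pt_lim_comp; auto. apply derivable_pt_lim_ln; auto.
Qed.

Lemma fF_deriv n a th b c : HypF n a -> 0 < b -> candF n a b c ->
  derivable_pt_lim (fF n a th) b (th - / (c * z0F n a b)).
Proof.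
  intros H Hb Hc. pose proof (z0_ge1 n a b c H Hc). pose proof (cand_pos n a b c H Hc).
  replace (th - / (c * z0F n a b)) with (th + (- / c) / z0F n a b) by (field; lra).
  apply (f_deriv_gen (z0F n a) th b (- / c)). lra. apply z0_deriv; auto.
Qed.

Lemma fF_Derive n a th b c : HypF n a -> 0 < b -> candF n a b c ->
  Derive (fF n a th) b = th - / (c * z0F n a b).
Proof.
  intros. apply is_derive_unique. apply is_derive_Reals. apply fF_deriv; auto.
Qed.

Lemma z0_Derive n a b c : HypF n a -> 0 < b -> candF n a b c ->
  Derive (z0F n a) b = - / c.
Proof.
  intros. apply is_derive_unique. apply is_derive_Reals. apply z0_deriv; auto.
Qed.

Definition PsiF n a c := c * (1 + ZsF n a c).

Lemma Psi_strict n a c c' : HypF n a -> 0 < c -> c < c' -> PsiF n a c < PsiF n a c'.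
Proof.
  intros H Hc Hcc. pose proof H as [Hn [Hp Hm]]. unfold PsiF, ZsF.
  rewrite !Rmult_plus_distr_l, !Rmult_1_r.
  rewrite <- !sum_scal_R.
  assert (sum_n_m (fun k => c * (a k / Rmax c (a k))) 2 n <= sum_n_m (fun k => c' * (a k / Rmax c' (a k))) 2 n).
  { apply sum_le_loc. intros k Hk. assert (0 < a k) by (apply Hp; lia).
    unfold Rmax. destruct (Rle_dec c (a k)); destruct (Rle_dec c' (a k)).
    - replace (c * (a k / a k)) with c by (field; lra). replace (c' * (a k / a k)) with c' by (field; lra). lra.
    - replace (c * (a k / a k)) with c by (field; lra). replace (c' * (a k / c')) with (a k) by (field; lra). lra.
    - lra.
    - replace (c * (a k / c)) with (a k) by (field; lra). replace (c' * (a k / c')) with (a k) by (field; lra). lra. }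
  lra.
Qed.

Lemma Psi_z0 n a b c : candF n a b c -> c * z0F n a b = PsiF n a c.
Proof. intros [_ [_ ->]]. reflexivity. Qed.

Lemma G_strict n a b b' c c' : HypF n a -> 0 < b -> b < b' -> candF n a b c -> candF n a b' c' ->
  c * z0F n a b < c' * z0F n a b'.
Proof.
  intros H Hb Hbb Hc Hc'. rewrite (Psi_z0 n a b c Hc), (Psi_z0 n a b' c' Hc').
  apply Psi_strict; auto. apply (cand_pos n a b c H Hc). apply (cand_mono n a b b'); auto.
Qed.

Lemma lip_cont g x d0 K : 0 < d0 -> 0 <= K ->
  (forall y, Rabs (y - x) < d0 -> Rabs (g y - g x) <= K * Rabs (y - x)) -> continuity_pt g x.
Proof.
  intros Hd0 HK Hl eps Heps. exists (Rmin d0 (eps / (K + 1))). split.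
  apply Rmin_pos; auto. apply Rdiv_lt_0_compat; lra.
  intros y [_ Hy]. simpl in *. unfold R_dist in *.
  assert (Hy1 : Rabs (y - x) < d0) by (eapply Rlt_le_trans; [apply Hy|apply Rmin_l]).
  assert (Hy2 : Rabs (y - x) < eps / (K + 1)) by (eapply Rlt_le_trans; [apply Hy|apply Rmin_r]).
  specialize (Hl y Hy1). apply Rle_lt_trans with (K * Rabs (y - x)); auto.
  apply Rle_lt_trans with (K * (eps / (K + 1))).
  apply Rmult_le_compat_l; auto. left; auto.
  apply Rmult_lt_reg_r with (K + 1). lra.
  replace (K * (eps / (K + 1)) * (K + 1)) with (K * eps) by (field; lra). nra.
Qed.

Definition LinvF n a b := ln (- Derive (z0F n a) b).

Lemma LinvF_eq n a b c : HypF n a -> 0 < b -> candF n a b c -> LinvF n a b = - ln c.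
Proof.
  intros H Hb Hc. unfold LinvF. rewrite (z0_Derive n a b c) by auto. rewrite Ropp_involutive.
  rewrite ln_Rinv. reflexivity. apply (cand_pos n a b c H Hc).
Qed.

Lemma LinvF_lip n a b : HypF n a -> 0 < b ->
  forall y, Rabs (y - b) < b -> Rabs (LinvF n a y - LinvF n a b) <= / a n * Rabs (y - b).
Proof.
  intros H Hb y Hy. assert (Hy0 : 0 < y) by (unfold Rabs in Hy; destruct (Rcase_abs _); lra).
  pose proof (an_pos n a H) as Han.
  destruct (cand_exists n a b H Hb) as [c Hc]. destruct (cand_exists n a y H Hy0) as [c' Hc'].
  rewrite (LinvF_eq n a b c), (LinvF_eq n a y c') by auto.
  pose proof (cand_pos n a b c H Hc). pose proof (cand_pos n a y c' H Hc').
  destruct (Rtotal_order b y) as [Hl|[He|Hg]].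
  - pose proof (cand_mono n a b y c c' H Hl Hc Hc').
    pose proof (Phi_slope n a c c' H (proj1 Hc) (Rlt_le _ _ H2)).
    destruct Hc as [_ [P1 _]]. destruct Hc' as [_ [P2 _]]. rewrite P1, P2 in H3.
    rewrite ln_div in H3 by lra.
    assert (ln c < ln c') by (apply ln_increasing; lra).
    rewrite Rabs_left by lra. rewrite (Rabs_right (y - b)) by lra.
    apply Rmult_le_reg_l with (a n); auto. rewrite <- Rmult_assoc, Rinv_r by lra.
    replace (a n * - (- ln c' - - ln c)) with (a n * (ln c' - ln c)) by ring. lra.
  - subst y. rewrite (cand_unique n a b c c' H Hc Hc'). replace (- ln c' - - ln c') with 0 by ring. replace (b - b) with 0 by ring. rewrite Rabs_R0. lra.
  - pose proof (cand_mono n a y b c' c H Hg Hc' Hc).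
    pose proof (Phi_slope n a c' c H (proj1 Hc') (Rlt_le _ _ H2)).
    destruct Hc as [_ [P1 _]]. destruct Hc' as [_ [P2 _]]. rewrite P1, P2 in H3.
    rewrite ln_div in H3 by lra.
    assert (ln c' < ln c) by (apply ln_increasing; lra).
    rewrite Rabs_right by lra. rewrite (Rabs_left (y - b)) by lra.
    apply Rmult_le_reg_l with (a n); auto. rewrite <- Rmult_assoc, Rinv_r by lra.
    replace (a n * (- ln c' - - ln c)) with (a n * (ln c - ln c')) by ring. lra.
Qed.

Lemma fF_Derive_cont n a th b : HypF n a -> 0 < b -> continuity_pt (Derive (fF n a th)) b.
Proof.
  intros H Hb. pose proof (an_pos n a H) as Han.
  destruct (cand_exists n a b H Hb) as [c Hc].
  set (F := fun t => th - exp (LinvF n a t) / z0F n a t).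
  apply (continuity_loc F _ b b Hb).
  - intros y Hy. assert (Hy0 : 0 < y) by (unfold Rabs in Hy; destruct (Rcase_abs _); lra).
    destruct (cand_exists n a y H Hy0) as [c' Hc'].
    unfold F. rewrite (fF_Derive n a th y c') by auto. rewrite (LinvF_eq n a y c') by auto.
    pose proof (cand_pos n a y c' H Hc'). pose proof (z0_ge1 n a y c' H Hc').
    rewrite exp_Ropp, exp_ln by auto. field. lra.
  - unfold F. apply (continuity_pt_minus (fun _ => th) (fun t => exp (LinvF n a t) / z0F n a t)).
    apply continuity_pt_const. intros ? ?; reflexivity.
    apply (continuity_pt_div (comp exp (LinvF n a)) (z0F n a)).
    + apply continuity_pt_comp. apply (lip_cont _ b b (/ a n)); auto.
      left; apply Rinv_0_lt_compat; auto. apply LinvF_lip; auto.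
      apply derivable_continuous_pt, derivable_pt_exp.
    + apply derivable_continuous_pt. exists (- / c). apply z0_deriv; auto.
    + pose proof (z0_ge1 n a b c H Hc). lra.
Qed.

Lemma filterlim_right_eps (g : R -> R) x L :
  (forall eps, 0 < eps -> exists d, 0 < d /\ forall t, x < t < x + d -> Rabs (g t - L) < eps) ->
  filterlim g (at_right x) (locally L).
Proof.
  intros H. apply filterlim_locally. intros eps.
  destruct (H eps (cond_pos eps)) as [d [Hd Hd2]].
  exists (mkposreal d Hd). intros t Ht Hxt. simpl in Ht.
  unfold ball in *; simpl in *; unfold AbsRing_ball, abs, minus, plus, opp in *; simpl in *.
  apply Hd2. split; auto. unfold Rabs in Ht. destruct (Rcase_abs _); lra.
Qed.

Lemma rsqueeze_deriv (g lo up : R -> R) x L d0 : 0 < d0 ->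
  lo x = g x -> up x = g x -> derivable_pt_lim lo x L -> derivable_pt_lim up x L ->
  (forall h, 0 < h < d0 -> lo (x + h) <= g (x + h) <= up (x + h)) ->
  forall eps, 0 < eps -> exists d, 0 < d /\ forall h, 0 < h < d -> Rabs ((g (x + h) - g x) / h - L) < eps.
Proof.
  intros Hd0 E1 E2 D1 D2 B eps Heps.
  destruct (D1 eps Heps) as [d1 H1]. destruct (D2 eps Heps) as [d2 H2].
  exists (Rmin d0 (Rmin d1 d2)). split. apply Rmin_pos; auto. apply Rmin_pos; apply cond_pos.
  intros h [Hh0 Hh].
  assert (h < d0) by (eapply Rlt_le_trans; [apply Hh|apply Rmin_l]).
  assert (h < d1) by (eapply Rlt_le_trans; [apply Hh|]; eapply Rle_trans; [apply Rmin_r|apply Rmin_l]).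
  assert (h < d2) by (eapply Rlt_le_trans; [apply Hh|]; eapply Rle_trans; [apply Rmin_r|apply Rmin_r]).
  assert (Hn0 : h <> 0) by lra.
  specialize (H1 h Hn0 ltac:(rewrite Rabs_right; lra)). specialize (H2 h Hn0 ltac:(rewrite Rabs_right; lra)).
  rewrite E1 in H1. rewrite E2 in H2. destruct (B h) as [B1 B2]. lra.
  assert ((lo (x + h) - g x) / h <= (g (x + h) - g x) / h).
  { unfold Rdiv. apply Rmult_le_compat_r. left; apply Rinv_0_lt_compat; auto. lra. }
  assert ((g (x + h) - g x) / h <= (up (x + h) - g x) / h).
  { unfold Rdiv. apply Rmult_le_compat_r. left; apply Rinv_0_lt_compat; auto. lra. }
  apply Rabs_def2 in H1. apply Rabs_def2 in H2. apply Rabs_def1; lra.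
Qed.

Lemma rsqueeze_cont (g lo up : R -> R) x L d0 : 0 < d0 ->
  lo x = L -> up x = L -> continuity_pt lo x -> continuity_pt up x ->
  (forall t, x < t < x + d0 -> lo t <= g t <= up t) ->
  forall eps, 0 < eps -> exists d, 0 < d /\ forall t, x < t < x + d -> Rabs (g t - L) < eps.
Proof.
  intros Hd0 E1 E2 C1 C2 B eps Heps.
  destruct (C1 eps Heps) as [d1 [Hd1 H1]]. destruct (C2 eps Heps) as [d2 [Hd2 H2]].
  exists (Rmin d0 (Rmin d1 d2)). split. apply Rmin_pos; auto. apply Rmin_pos; auto.
  intros t [Ht0 Ht].
  assert (t < x + d0) by (assert (Rmin d0 (Rmin d1 d2) <= d0) by apply Rmin_l; lra).
  assert (t - x < d1) by (assert (Rmin d0 (Rmin d1 d2) <= d1) by (eapply Rle_trans; [apply Rmin_r|apply Rmin_l]); lra).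
  assert (t - x < d2) by (assert (Rmin d0 (Rmin d1 d2) <= d2) by (eapply Rle_trans; [apply Rmin_r|apply Rmin_r]); lra).
  assert (Hx : D_x no_cond x t) by (split; [constructor|lra]).
  assert (Hdt1 : dist R_met t x < d1) by (simpl; unfold R_dist; rewrite Rabs_right; lra).
  assert (Hdt2 : dist R_met t x < d2) by (simpl; unfold R_dist; rewrite Rabs_right; lra).
  specialize (H1 t (conj Hx Hdt1)). specialize (H2 t (conj Hx Hdt2)).
  simpl in H1, H2. unfold R_dist in *. rewrite E1 in H1. rewrite E2 in H2.
  destruct (B t) as [B1 B2]. lra.
  apply Rabs_def2 in H1. apply Rabs_def2 in H2. apply Rabs_def1; lra.
Qed.

Lemma cont_of_exd (f : R -> R) x : ex_derive f x -> continuity_pt f x.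
Proof. intros H. apply continuity_pt_filterlim. apply (ex_derive_continuous f x H). Qed.

Lemma Zs_an n a : HypF n a -> ZsF n a (a n) = INR n - 1.
Proof.
  intros H. pose proof H as [Hn [Hp Hm]]. unfold ZsF. toR.
  rewrite (sum_ext_loc_R _ (fun _ => 1)).
  - rewrite sum_n_m_const. replace (S n - 2)%nat with (n - 1)%nat by lia.
    rewrite minus_INR by lia. simpl. ring.
  - intros i Hi. rewrite Rmax_right by (apply (amon n a H); lia). field. apply Rgt_not_eq, Hp; lia.
Qed.

Lemma Phi_an n a : HypF n a -> PhiF n a (a n) = 0.
Proof.
  intros H. pose proof H as [Hn [Hp Hm]]. unfold PhiF. toR.
  apply sum_zero_loc. intros i Hi. rewrite Rmax_right by (apply (amon n a H); lia).
  replace (a i / a i) with 1 by (field; apply Rgt_not_eq, Hp; lia). rewrite ln_1. ring.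
Qed.

Lemma z0_lower0 n a h c : HypF n a -> 0 < h -> candF n a h c -> INR n - h / a n <= z0F n a h.
Proof.
  intros H Hh Hc. pose proof H as [Hn [Hp Hm]]. pose proof (an_pos n a H) as Han.
  destruct Hc as [Hc1 [Pc Zc]].
  pose proof (key_ineq n a (a n) (fun i => ln (Rmax c (a i) / a i)) Han) as K.
  rewrite (sum_ext_loc_R (fun i => exp (- ln (Rmax c (a i) / a i))) (fun i => a i / Rmax c (a i))) in K.
  2:{ intros i Hi. apply exp_neg_ln_ratio. apply Hp; lia. apply Rmax_pos_l, Hp; lia. }
  fold (ZsF n a c) in K. fold (PhiF n a c) in K. rewrite Pc, Phi_an, Zs_an in K by auto.
  assert (INR n - 1 - / a n * (h - 0) <= ZsF n a c).
  { apply K. intros i Hi. split. apply Hp; lia. rewrite <- ln_1. apply ln_le. lra.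
    apply Rmax_ratio_ge1, Hp; lia. }
  rewrite Zc. unfold Rdiv. lra.
Qed.

Lemma z0_upper0 n a h c : HypF n a -> 0 < h -> candF n a h c -> z0F n a h <= INR n - 1 + exp (- (h / a n)).
Proof.
  intros H Hh Hc. pose proof H as [Hn [Hp Hm]]. pose proof (an_pos n a H) as Han.
  pose proof (cand_pos n a h c H Hc) as Hc0.
  destruct Hc as [Hc1 [Pc Zc]].
  set (z := fun i => if Nat.eqb i n then h / a n else 0).
  pose proof (key_ineq n a c z Hc0) as K.
  assert (S1 : @eq R (sum_n_m (fun i => a i * z i) 2 n) h).
  { rewrite (sum_single _ 2 n n) by (try lia; intros k Hk Hkn; unfold z; apply Nat.eqb_neq in Hkn; rewrite Hkn; ring).
    unfold z. rewrite Nat.eqb_refl. toR. field. lra. }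
  assert (S2 : @eq R (sum_n_m (fun i => exp (- z i)) 2 n) (INR n - 2 + exp (- (h / a n)))).
  { assert (E : forall x, sum_n_m x 2 n = sum_n_m x 2 (n - 1) + x n).
    { intros x. destruct n as [|m]; [lia|]. replace (S m - 1)%nat with m by lia.
      rewrite sum_last by lia. reflexivity. }
    rewrite E. unfold z at 2. rewrite Nat.eqb_refl.
    rewrite (sum_ext_loc_R _ (fun _ => 1)).
    - rewrite sum_n_m_const. replace (S (n - 1) - 2)%nat with (n - 2)%nat by lia.
      rewrite minus_INR by lia. simpl. ring.
    - intros k Hk. unfold z. assert (k <> n) by lia. apply Nat.eqb_neq in H0. rewrite H0.
      rewrite Ropp_0, exp_0. reflexivity. }
  rewrite S1, S2, Pc in K.
  assert (ZsF n a c - / c * (h - h) <= INR n - 2 + exp (- (h / a n))).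
  { apply K. intros i Hi. split. apply Hp; lia. unfold z. destruct (Nat.eqb i n).
    apply Rdiv_le_0_compat; lra. lra. }
  rewrite Zc. lra.
Qed.

Lemma fF_0 n a th : fF n a th 0 = ln (INR n).
Proof. unfold fF, z0F. destruct (Req_EM_T 0 0); [|lra]. ring. Qed.

Definition LF n a th := th - 1 / (a n * INR n).

Lemma fF_rderiv n a th : HypF n a ->
  forall eps, 0 < eps -> exists d, 0 < d /\ forall h, 0 < h < d ->
    Rabs ((fF n a th (0 + h) - fF n a th 0) / h - LF n a th) < eps.
Proof.
  intros H. pose proof H as [Hn [Hp Hm]]. pose proof (an_pos n a H) as Han.
  assert (HnR : 2 <= INR n) by (replace 2 with (INR 2) by (simpl; ring); apply le_INR; lia).
  apply (rsqueeze_deriv (fF n a th) (fun t => th * t + ln (INR n - t / a n))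
                        (fun t => th * t + ln (INR n - 1 + exp (- (t / a n)))) 0 (LF n a th) (a n) Han).
  - rewrite fF_0. replace (INR n - 0 / a n) with (INR n) by (field; lra). ring.
  - rewrite fF_0. replace (th * 0) with 0 by ring. rewrite Rplus_0_l. f_equal.
    replace (- (0 / a n)) with 0 by (field; lra). rewrite exp_0. ring.
  - apply is_derive_Reals. auto_derive.
    + unfold Rdiv. rewrite Rmult_0_l. lra.
    + unfold LF. field. split; lra.
  - apply is_derive_Reals. auto_derive.
    + pose proof (exp_pos (- (0 / a n))). lra.
    + unfold LF. replace (- (0 * / a n)) with 0 by ring. rewrite exp_0. field. split; lra.
  - intros h Hh. rewrite Rplus_0_l.
    destruct (cand_exists n a h H (proj1 Hh)) as [c Hc].
    pose proof (z0_lower0 n a h c H (proj1 Hh) Hc). pose proof (z0_upper0 n a h c H (proj1 Hh) Hc).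
    unfold fF. split.
    + apply Rplus_le_compat_l. apply ln_le; auto.
      assert (h / a n < 1) by (apply Rcomplements.Rlt_div_l; lra). lra.
    + apply Rplus_le_compat_l. apply ln_le; auto. pose proof (z0_ge1 n a h c H Hc). lra.
Qed.

Lemma fF_rcont n a th : HypF n a ->
  forall eps, 0 < eps -> exists d, 0 < d /\ forall t, 0 < t < 0 + d -> Rabs (fF n a th t - fF n a th 0) < eps.
Proof.
  intros H eps Heps. destruct (fF_rderiv n a th H 1 Rlt_0_1) as [d [Hd Hd2]].
  set (K := Rabs (LF n a th) + 1).
  assert (HK : 0 < K) by (unfold K; pose proof (Rabs_pos (LF n a th)); lra).
  exists (Rmin d (eps / K)). split. apply Rmin_pos; auto. apply Rdiv_lt_0_compat; auto.
  intros t [Ht0 Ht]. rewrite Rplus_0_l in Ht.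
  assert (t < d) by (eapply Rlt_le_trans; [apply Ht|apply Rmin_l]).
  assert (t < eps / K) by (eapply Rlt_le_trans; [apply Ht|apply Rmin_r]).
  specialize (Hd2 t (conj Ht0 H0)). rewrite Rplus_0_l in Hd2.
  set (q := (fF n a th t - fF n a th 0) / t) in *.
  assert (E : fF n a th t - fF n a th 0 = q * t) by (unfold q; field; lra).
  rewrite E. rewrite Rabs_mult, (Rabs_right t) by lra.
  assert (Rabs q < K).
  { unfold K. pose proof (Rabs_triang (q - LF n a th) (LF n a th)).
    replace (q - LF n a th + LF n a th) with q in H2 by ring. lra. }
  apply Rle_lt_trans with (K * t). apply Rmult_le_compat_r; lra.
  apply Rmult_lt_reg_r with (/ K). apply Rinv_0_lt_compat; auto.
  replace (K * t * / K) with t by (field; lra). auto.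
Qed.

Lemma fF_Derive_r n a th : HypF n a ->
  forall eps, 0 < eps -> exists d, 0 < d /\ forall t, 0 < t < 0 + d -> Rabs (Derive (fF n a th) t - LF n a th) < eps.
Proof.
  intros H. pose proof H as [Hn [Hp Hm]]. pose proof (an_pos n a H) as Han.
  assert (HnR : 2 <= INR n) by (replace 2 with (INR 2) by (simpl; ring); apply le_INR; lia).
  apply (rsqueeze_cont (Derive (fF n a th)) (fun t => th - / (a n * INR n - t))
        (fun t => th - / (a n * exp (t / a n) * (INR n - 1 + exp (- (t / a n))))) 0 (LF n a th) (a n) Han).
  - unfold LF. f_equal. rewrite Rminus_0_r. unfold Rdiv. ring.
  - unfold LF. f_equal. replace (- (0 / a n)) with 0 by (field; lra). replace (0 / a n) with 0 by (field; lra).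
    rewrite exp_0. unfold Rdiv. rewrite Rmult_1_l. f_equal. ring.
  - apply cont_of_exd. auto_derive. nra.
  - apply cont_of_exd. auto_derive. pose proof (exp_pos (0 / a n)). pose proof (exp_pos (- (0 / a n))).
    assert (0 < a n * exp (0 / a n) * (INR n - 1 + exp (- (0 / a n)))).
    { apply Rmult_lt_0_compat. apply Rmult_lt_0_compat; auto. lra. }
    lra.
  - intros t [Ht0 Ht]. rewrite Rplus_0_l in Ht.
    destruct (cand_exists n a t H Ht0) as [c Hc].
    rewrite (fF_Derive n a th t c) by auto.
    pose proof (z0_lower0 n a t c H Ht0 Hc). pose proof (z0_upper0 n a t c H Ht0 Hc).
    pose proof (z0_ge1 n a t c H Hc).
    assert (Hc1 : a n <= c) by apply Hc.
    assert (Hc2 : c <= a n * exp (t / a n)).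
    { pose proof (Phi_slope n a (a n) c H (Rle_refl _) Hc1). rewrite Phi_an in H3 by auto.
      destruct Hc as [_ [Pc _]]. rewrite Pc in H3. rewrite ln_div in H3 by lra.
      assert (ln c <= ln (a n) + t / a n).
      { apply Rmult_le_reg_l with (a n); auto. replace (a n * (ln (a n) + t / a n)) with (a n * ln (a n) + t) by (field; lra). lra. }
      rewrite <- (exp_ln c) by lra. rewrite <- (exp_ln (a n)) at 1 by lra. rewrite <- exp_plus.
      apply exp_le_m. lra. }
    assert (Hlo : a n * INR n - t <= c * z0F n a t).
    { assert (INR n - t / a n > 0) by (assert (t / a n < 1) by (apply Rcomplements.Rlt_div_l; lra); lra).
      apply Rle_trans with (a n * (INR n - t / a n)). right; field; lra.
      apply Rmult_le_compat; lra. }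
    assert (Hup : c * z0F n a t <= a n * exp (t / a n) * (INR n - 1 + exp (- (t / a n)))).
    { apply Rmult_le_compat; lra. }
    assert (0 < a n * INR n - t) by (assert (a n <= a n * INR n) by nra; lra).
    split; apply Rplus_le_compat_l; apply Ropp_le_contravar; apply Rinv_le_contravar; lra.
Qed.

Lemma feas_nonneg n a x : feasibleF n a x -> forall i, (1 <= i <= n)%nat -> 0 <= x i.
Proof.
  intros [H1 [H2 H3]] i Hi. induction i as [|i IH]. lia.
  destruct (Nat.eq_dec i 0) as [->|Hne]. rewrite H1; lra.
  apply Rle_trans with (x i). apply IH; lia. replace (S i) with (i + 1)%nat by lia. apply H2; lia.
Qed.

Lemma sum_from1 (f : nat -> R) n : (1 <= n)%nat -> sum_n_m f 1 n = f 1%nat + sum_n_m f 2 n.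
Proof. intros. rewrite sum_first by lia. reflexivity. Qed.

Lemma cand_feasible n a b c : HypF n a -> 0 < b -> 0 < c -> PhiF n a c = b ->
  feasibleF n a (fun i => ycand a c i / b).
Proof.
  intros H Hb Hc Pc. pose proof H as [Hn [Hp Hm]]. unfold ycand. split; [|split].
  - simpl. unfold Rdiv; ring.
  - intros i Hi. destruct (Nat.eqb i 1) eqn:E1; destruct (Nat.eqb (i + 1) 1) eqn:E2.
    + lra.
    + unfold Rdiv. rewrite Rmult_0_l. apply Rmult_le_pos. rewrite <- ln_1. apply ln_le. lra.
      apply Rmax_ratio_ge1, Hp; lia. left; apply Rinv_0_lt_compat; auto.
    + apply Nat.eqb_eq in E2; lia.
    + apply Rmult_le_compat_r. left; apply Rinv_0_lt_compat; auto.
      assert (0 < a i) by (apply Hp; lia). assert (0 < a (i + 1)%nat) by (apply Hp; lia).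
      apply ln_le. apply Rdiv_lt_0_compat; auto. apply Rmax_pos_l; auto.
      assert (Ha : a (i + 1)%nat <= a i) by (apply Hm; lia).
      unfold Rmax. destruct (Rle_dec c (a i)); destruct (Rle_dec c (a (i + 1)%nat)).
      * replace (a i / a i) with 1 by (field; lra). replace (a (i+1)%nat / a (i+1)%nat) with 1 by (field; lra). lra.
      * replace (a i / a i) with 1 by (field; lra). apply Rcomplements.Rle_div_r; lra.
      * lra.
      * unfold Rdiv. apply Rmult_le_compat_l. lra. apply Rinv_le_contravar; lra.
  - rewrite sum_from1 by lia. simpl. toR.
    rewrite (sum_ext_loc_R _ (fun i => / b * (a i * ln (Rmax c (a i) / a i)))).
    rewrite sum_scal_R. fold (PhiF n a c). rewrite Pc. field. lra.
    intros i Hi. assert (i <> 1%nat) by lia. apply Nat.eqb_neq in H0. rewrite H0. unfold Rdiv. ring.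
Qed.

Lemma objF_cand n a b c : HypF n a -> 0 < b -> 0 < c ->
  objF n b (fun i => ycand a c i / b) = 1 + ZsF n a c.
Proof.
  intros H Hb Hc. pose proof H as [Hn [Hp Hm]]. unfold objF. rewrite sum_from1 by lia.
  unfold ycand. simpl. replace (- b * (0 / b)) with 0 by (field; lra). rewrite exp_0. f_equal.
  unfold ZsF. apply sum_ext_loc_R. intros i Hi. assert (i <> 1%nat) by lia. apply Nat.eqb_neq in H0. rewrite H0.
  replace (- b * (ln (Rmax c (a i) / a i) / b)) with (- ln (Rmax c (a i) / a i)) by (field; lra).
  apply exp_neg_ln_ratio. apply Hp; lia. apply Rmax_pos_l, Hp; lia.
Qed.

Lemma min_ident n a b c x : HypF n a -> 0 < b -> candF n a b c -> minimizerF n a b x ->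
  forall i, (1 <= i <= n)%nat -> x i = ycand a c i / b.
Proof.
  intros H Hb Hc [Hf Hmin] i Hi. pose proof H as [Hn [Hp Hm]].
  pose proof (cand_pos n a b c H Hc) as Hc0. destruct Hc as [Hc1 [Pc Zc]].
  destruct (Nat.eq_dec i 1) as [->|Hi1].
  { unfold ycand. simpl. destruct Hf as [Hx1 _]. rewrite Hx1. unfold Rdiv; ring. }
  destruct (Req_dec (x i) (ycand a c i / b)) as [E|Hne]; auto. exfalso.
  pose proof (Hmin _ (cand_feasible n a b c H Hb Hc0 Pc)) as Hle.
  rewrite objF_cand in Hle by auto.
  pose proof (feas_nonneg n a x Hf) as Hnn.
  destruct Hf as [Hx1 [_ Hsum]].
  rewrite sum_from1 in Hsum by lia. rewrite Hx1, Rmult_0_r, Rplus_0_l in Hsum.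
  pose proof (key_strict n a c (fun k => b * x k) i Hc0) as K.
  rewrite (sum_ext_R (fun k => a k * (b * x k)) (fun k => b * (a k * x k))) in K by (intros; ring).
  rewrite sum_scal_R, Hsum, Pc in K.
  assert (ZsF n a c - / c * (b * 1 - b) < sum_n_m (fun k => exp (- (b * x k))) 2 n).
  { apply K. intros k Hk. split. apply Hp; lia. apply Rmult_le_pos. lra. apply Hnn; lia. lia.
    intros Habs. apply Hne. unfold ycand. assert (i <> 1%nat) by lia. apply Nat.eqb_neq in H0. rewrite H0.
    rewrite <- Habs. field. lra. }
  unfold objF in Hle. rewrite sum_from1 in Hle by lia. rewrite Hx1 in Hle.
  replace (- b * 0) with 0 in Hle by ring. rewrite exp_0 in Hle.
  rewrite (sum_ext_R (fun i0 => exp (- b * x i0)) (fun k => exp (- (b * x k)))) in Hle by (intros; f_equal; ring).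
  lra.
Qed.

Lemma Phi_Zs_piece n a k c : HypF n a -> (1 <= k <= n - 1)%nat -> a (k + 1)%nat <= c ->
  ((2 <= k)%nat -> c <= a k) ->
  PhiF n a c = sF n a k + dF n a k * ln c /\ ZsF n a c = INR (k - 1) + dF n a k / c.
Proof.
  intros H Hk Hclo Hchi. pose proof H as [Hn [Hp Hm]].
  assert (Hc : 0 < c) by (apply Rlt_le_trans with (a (k+1)%nat); auto; apply Hp; lia).
  assert (Hlow : forall i, (2 <= i <= k)%nat -> Rmax c (a i) = a i).
  { intros i Hi. apply Rmax_right. apply Rle_trans with (a k). apply Hchi; lia.
    apply (amon n a H); lia. }
  assert (Hup : forall i, (k + 1 <= i <= n)%nat -> Rmax c (a i) = c).
  { intros i Hi. apply Rmax_left. apply Rle_trans with (a (k+1)%nat); auto.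
    apply (amon n a H); lia. }
  split.
  - unfold PhiF. toR. rewrite (sum_split _ 2 k n) by lia.
    rewrite sum_zero_loc.
    2:{ intros i Hi. rewrite Hlow by auto. replace (a i / a i) with 1 by (field; apply Rgt_not_eq, Hp; lia).
        rewrite ln_1. ring. }
    rewrite (sum_ext_loc_R _ (fun i => ln c * a i + eta (a i))).
    2:{ intros i Hi. rewrite Hup by lia. rewrite eta_pos by (apply Hp; lia).
        rewrite ln_div by (auto; apply Hp; lia). ring. }
    rewrite sum_plus_R, sum_scal_R.
    replace (sum_n_m a (S k) n) with (dF n a k) by (unfold dF; f_equal; lia).
    replace (sum_n_m (fun i => eta (a i)) (S k) n) with (sF n a k) by (unfold sF; f_equal; lia).
    ring.
  - unfold ZsF. toR. rewrite (sum_split _ 2 k n) by lia.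
    rewrite (sum_ext_loc_R (fun i => a i / Rmax c (a i)) (fun _ => 1) 2 k).
    2:{ intros i Hi. rewrite Hlow by auto. field. apply Rgt_not_eq, Hp; lia. }
    rewrite (sum_ext_loc_R (fun i => a i / Rmax c (a i)) (fun i => / c * a i) (S k) n).
    2:{ intros i Hi. rewrite Hup by lia. unfold Rdiv. ring. }
    rewrite sum_scal_R, sum_n_m_const.
    replace (sum_n_m a (S k) n) with (dF n a k) by (unfold dF; f_equal; lia).
    replace (S k - 2)%nat with (k - 1)%nat by lia. field. lra.
Qed.

Lemma fF_cont_pos n a th b : HypF n a -> 0 < b -> continuity_pt (fF n a th) b.
Proof.
  intros H Hb. destruct (cand_exists n a b H Hb) as [c Hc].
  apply derivable_continuous_pt. exists (th - / (c * z0F n a b)). apply fF_deriv; auto.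
Qed.

Lemma fF_rcont_gen n a th b0 : HypF n a -> 0 <= b0 ->
  forall eps, 0 < eps -> exists d, 0 < d /\ forall t, b0 < t < b0 + d -> Rabs (fF n a th t - fF n a th b0) < eps.
Proof.
  intros H Hb0 eps Heps. destruct (Req_dec b0 0) as [->|Hne].
  - apply fF_rcont; auto.
  - destruct (fF_cont_pos n a th b0 H ltac:(lra) eps Heps) as [d [Hd Hd2]].
    exists d. split; auto. intros t Ht. apply (Hd2 t). split. split. constructor. lra.
    simpl. unfold R_dist. rewrite Rabs_right; lra.
Qed.

Lemma Derive_val n a th b : HypF n a -> 0 < b -> exists c, candF n a b c /\
  Derive (fF n a th) b = th - / PsiF n a c /\ derivable_pt_lim (fF n a th) b (Derive (fF n a th) b).
Proof.
  intros H Hb. destruct (cand_exists n a b H Hb) as [c Hc]. exists c. split; auto.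
  rewrite (fF_Derive n a th b c) by auto. rewrite (Psi_z0 n a b c Hc). split; auto.
  rewrite <- (Psi_z0 n a b c Hc). apply fF_deriv; auto.
Qed.

Lemma mvt_f n a th x y : HypF n a -> 0 <= x < y ->
  exists xi, x < xi < y /\ fF n a th y - fF n a th x = Derive (fF n a th) xi * (y - x).
Proof.
  intros H Hxy. apply mvt_right. lra.
  - intros c Hc. destruct (Derive_val n a th c H ltac:(lra)) as [c' [_ [_ D]]]. auto.
  - intros c Hc. apply fF_cont_pos; auto; lra.
  - apply fF_rcont_gen; auto; lra.
Qed.

Lemma fF_convex n a th : HypF n a -> convex_on (fun b => 0 <= b) (fF n a th).
Proof.
  intros H. pose proof (an_pos n a H) as Han.
  assert (Hmain : forall x y t, 0 <= x -> x < y -> 0 <= t <= 1 ->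
     fF n a th (t * x + (1 - t) * y) <= t * fF n a th x + (1 - t) * fF n a th y).
  { intros x y t Hx Hxy Ht. apply (convex_from_deriv (fF n a th) (Derive (fF n a th))); auto.
    - intros c Hc. destruct (Derive_val n a th c H ltac:(lra)) as [c' [_ [_ D]]]. auto.
    - intros c Hc. apply fF_cont_pos; auto; lra.
    - apply fF_rcont_gen; auto.
    - intros u v Hu Huv Hv.
      destruct (Derive_val n a th u H ltac:(lra)) as [cu [Hcu [Du _]]].
      destruct (Derive_val n a th v H ltac:(lra)) as [cv [Hcv [Dv _]]].
      rewrite Du, Dv. destruct Huv as [Huv|Huv].
      + pose proof (cand_mono n a u v cu cv H Huv Hcu Hcv).
        pose proof (cand_pos n a u cu H Hcu).
        pose proof (Psi_strict n a cu cv H H1 H0).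
        assert (0 < PsiF n a cu) by (rewrite <- (Psi_z0 n a u cu Hcu); pose proof (z0_ge1 n a u cu H Hcu); nra).
        apply Rplus_le_compat_l, Ropp_le_contravar, Rinv_le_contravar; lra.
      + subst v. rewrite (cand_unique n a u cu cv H Hcu Hcv). lra. }
  intros x y t Hx Hy Ht. destruct (Rtotal_order x y) as [Hl|[He|Hg]].
  - apply Hmain; auto.
  - subst y. replace (t * x + (1 - t) * x) with x by ring. lra.
  - replace (t * x + (1 - t) * y) with ((1 - t) * y + (1 - (1 - t)) * x) by ring.
    replace (t * fF n a th x + (1 - t) * fF n a th y) with ((1 - t) * fF n a th y + (1 - (1 - t)) * fF n a th x) by ring.
    apply Hmain; auto; lra.
Qed.

Lemma Psi_an n a : HypF n a -> PsiF n a (a n) = a n * INR n.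
Proof. intros H. unfold PsiF. rewrite Zs_an by auto. ring. Qed.

Lemma inv_ge th X : 0 < th -> (X >= 1 / th <-> 1 <= th * X).
Proof.
  intros Hth. split; intros H.
  - apply Rge_le in H. apply Rmult_le_compat_l with (r := th) in H; [|lra].
    replace (th * (1 / th)) with 1 in H by (field; lra). lra.
  - apply Rle_ge. apply Rmult_le_reg_l with th; auto. replace (th * (1 / th)) with 1 by (field; lra). lra.
Qed.

Lemma inv_lt th X : 0 < th -> (X < 1 / th <-> th * X < 1).
Proof.
  intros Hth. split; intros H.
  - apply Rmult_lt_compat_l with (r := th) in H; [|lra].
    replace (th * (1 / th)) with 1 in H by (field; lra). lra.
  - apply Rmult_lt_reg_l with th; auto. replace (th * (1 / th)) with 1 by (field; lra). lra.
Qed.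

Lemma lt_inv_l th X : 0 < th -> 0 < X -> (th < 1 / X <-> th * X < 1).
Proof.
  intros Hth HX. split; intros H.
  - apply Rmult_lt_compat_r with (r := X) in H; [|lra].
    replace (1 / X * X) with 1 in H by (field; lra). lra.
  - apply Rmult_lt_reg_r with X; auto. replace (1 / X * X) with 1 by (field; lra). lra.
Qed.

Lemma le_inv_l th X : 0 < th -> 0 < X -> (1 / X <= th <-> 1 <= th * X).
Proof.
  intros Hth HX. split; intros H.
  - apply Rmult_le_compat_r with (r := X) in H; [|lra].
    replace (1 / X * X) with 1 in H by (field; lra). lra.
  - apply Rmult_le_reg_r with X; auto. replace (1 / X * X) with 1 by (field; lra). lra.
Qed.

Lemma m_facts n a th m : HypF n a -> 0 < th -> a n * INR n < 1 / th -> is_mF n a th m ->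
  (1 <= m <= n - 1)%nat /\ 0 < 1 - th * dF n a m /\
  a (m + 1)%nat < (1 - th * dF n a m) / (th * INR m) /\
  ((2 <= m)%nat -> (1 - th * dF n a m) / (th * INR m) <= a m).
Proof.
  intros H Hth HB Hm. pose proof H as [Hn [Hp Hmo]].
  assert (Hd0 : 0 < dF n a 0) by (apply d_pos; auto; lia).
  destruct Hm as [[H1 ->]|[H1 [Hm1 [Hm2 Hm3]]]].
  - apply lt_inv_l in H1; auto.
    pose proof (d_peel n a 1 ltac:(lia)) as E. simpl in E.
    assert (0 < a 1%nat) by (apply Hp; lia). assert (a 2%nat <= a 1%nat) by (apply (Hmo 1%nat); lia).
    assert (0 <= dF n a 1) by (apply d_nonneg; auto).
    split. lia. split. nra. split.
    + simpl INR. replace (th * 1) with th by ring. apply Rcomplements.Rlt_div_r. lra.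
      simpl. nra.
    + intros; lia.
  - assert (HmR : 1 <= INR m) by (replace 1 with (INR 1) by reflexivity; apply le_INR; lia).
    pose proof (d_peel n a (m + 1) ltac:(lia)) as E. replace (m + 1 - 1)%nat with m in E by lia.
    assert (HT : th * (dF n a (m + 1) + INR (m + 1) * a (m + 1)%nat) < 1).
    { destruct (Nat.eq_dec (m + 1) n) as [Heq|Hne].
      - rewrite Heq, d_n. apply inv_lt in HB; auto. rewrite Rplus_0_l. nra.
      - destruct (Rlt_or_le (th * (dF n a (m + 1) + INR (m + 1) * a (m + 1)%nat)) 1) as [Hl|Hl]; [exact Hl|].
        exfalso. apply (proj2 (inv_ge th _ Hth)) in Hl. specialize (Hm3 (m + 1)%nat ltac:(lia) Hl). lia. }
    rewrite plus_INR in HT. simpl INR in HT.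
    assert (0 < a (m + 1)%nat) by (apply Hp; lia).
    assert (0 <= dF n a (m + 1)) by (apply d_nonneg; auto).
    assert (P1 : 0 <= th * INR m * a (m + 1)%nat) by (apply Rmult_le_pos; [apply Rmult_le_pos|]; lra).
    assert (HT2 : th * (INR m * a (m + 1)%nat + dF n a m) < 1) by (rewrite E; nra).
    split. auto. split. nra. split.
    + apply Rcomplements.Rlt_div_r. nra. nra.
    + intros _. apply Rcomplements.Rle_div_l. nra. apply inv_ge in Hm2; auto. nra.
Qed.

Lemma Psi_pos n a c : HypF n a -> 0 < c -> 0 < PsiF n a c.
Proof. intros H Hc. unfold PsiF. pose proof (Zs_nonneg n a c H). nra. Qed.

Lemma Derive_sign_pos n a th b c : HypF n a -> 0 < th -> 0 < b -> candF n a b c ->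
  1 / th < PsiF n a c -> 0 < Derive (fF n a th) b.
Proof.
  intros H Hth Hb Hc HP. rewrite (fF_Derive n a th b c) by auto. rewrite (Psi_z0 n a b c Hc).
  pose proof (Psi_pos n a c H (cand_pos n a b c H Hc)).
  assert (/ PsiF n a c < th).
  { apply Rmult_lt_reg_r with (PsiF n a c); auto. rewrite Rinv_l by lra.
    apply Rmult_lt_compat_l with (r := th) in HP; auto. replace (th * (1 / th)) with 1 in HP by (field; lra). lra. }
  lra.
Qed.

Lemma Derive_sign_neg n a th b c : HypF n a -> 0 < th -> 0 < b -> candF n a b c ->
  PsiF n a c < 1 / th -> Derive (fF n a th) b < 0.
Proof.
  intros H Hth Hb Hc HP. rewrite (fF_Derive n a th b c) by auto. rewrite (Psi_z0 n a b c Hc).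
  pose proof (Psi_pos n a c H (cand_pos n a b c H Hc)).
  assert (th < / PsiF n a c).
  { apply Rmult_lt_reg_r with (PsiF n a c); auto. rewrite Rinv_l by lra.
    apply Rmult_lt_compat_l with (r := th) in HP; auto. replace (th * (1 / th)) with 1 in HP by (field; lra). lra. }
  lra.
Qed.

Lemma f_inc_right n a th b0 b : HypF n a -> 0 <= b0 < b ->
  (forall xi, b0 < xi < b -> 0 < Derive (fF n a th) xi) -> fF n a th b0 < fF n a th b.
Proof.
  intros H Hb D. destruct (mvt_f n a th b0 b H Hb) as [xi [Hxi E]].
  specialize (D xi Hxi). assert (0 < Derive (fF n a th) xi * (b - b0)) by (apply Rmult_lt_0_compat; lra). lra.
Qed.

Lemma f_inc_left n a th b0 b : HypF n a -> 0 <= b < b0 ->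
  (forall xi, b < xi < b0 -> Derive (fF n a th) xi < 0) -> fF n a th b0 < fF n a th b.
Proof.
  intros H Hb D. destruct (mvt_f n a th b b0 H Hb) as [xi [Hxi E]].
  specialize (D xi Hxi). assert (Derive (fF n a th) xi * (b0 - b) < 0).
  { assert (0 < b0 - b) by lra. nra. }
  lra.
Qed.

Lemma Phi_inj n a c c' : HypF n a -> a n <= c -> a n <= c' -> PhiF n a c = PhiF n a c' -> c = c'.
Proof.
  intros H H1 H2 E. destruct (Rtotal_order c c') as [Hl|[He|Hg]]; auto.
  - pose proof (Phi_strict n a c c' H H1 Hl). lra.
  - pose proof (Phi_strict n a c' c H H2 Hg). lra.
Qed.

Lemma cand_of_Phi n a b c : HypF n a -> 0 < b -> a n <= c -> PhiF n a c = b -> candF n a b c.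
Proof.
  intros H Hb Hc P. destruct (cand_exists n a b H Hb) as [c' Hc'].
  assert (c = c').
  { apply (Phi_inj n a); auto. apply Hc'. destruct Hc' as [_ [P' _]]. congruence. }
  subst c'. auto.
Qed.

Lemma f_to_infty n a th : HypF n a -> 0 < th ->
  filterlim (fF n a th) (Rbar_locally p_infty) (Rbar_locally p_infty).
Proof.
  intros H Hth P [M HM]. exists (Rmax 0 (M / th)). intros b Hb. apply HM.
  assert (Hb0 : 0 < b) by (eapply Rle_lt_trans; [apply Rmax_l|apply Hb]).
  assert (Hb1 : M / th < b) by (eapply Rle_lt_trans; [apply Rmax_r|apply Hb]).
  destruct (cand_exists n a b H Hb0) as [c Hc]. pose proof (z0_ge1 n a b c H Hc).
  unfold fF. assert (0 <= ln (z0F n a b)) by (rewrite <- ln_1; apply ln_le; lra).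
  assert (M < th * b).
  { apply Rmult_lt_compat_l with (r := th) in Hb1; auto. replace (th * (M / th)) with M in Hb1 by (field; lra). lra. }
  lra.
Qed.

Lemma caseA n a th : HypF n a -> 0 < th -> a n * INR n >= 1 / th ->
  forall b, 0 < b -> fF n a th 0 < fF n a th b.
Proof.
  intros H Hth HA b Hb. apply f_inc_right; auto. lra.
  intros xi Hxi. destruct (cand_exists n a xi H ltac:(lra)) as [c Hc].
  apply (Derive_sign_pos n a th xi c); auto. lra.
  assert (Hc1 : a n < c).
  { destruct Hc as [Hc1 [Pc _]]. destruct Hc1 as [Hl|He]; auto. subst c. rewrite Phi_an in Pc by auto. lra. }
  pose proof (Psi_strict n a (a n) c H (an_pos n a H) Hc1). rewrite Psi_an in H0 by auto. lra.
Qed.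

Lemma exists_bs n a th x m : HypF n a -> 0 < th ->
  (forall b, 0 < b -> minimizerF n a b (x b)) -> is_mF n a th m ->
  (exists bs : R,
      0 <= bs /\
      (forall b, 0 <= b -> fF n a th bs <= fF n a th b) /\
      (forall b, 0 <= b -> fF n a th b = fF n a th bs -> b = bs) /\
      (a n * INR n >= 1 / th -> bs = 0 /\ fF n a th bs = ln (INR n)) /\
      (a n * INR n < 1 / th ->
         bs = sF n a m + dF n a m * ln ((1 - th * dF n a m) / (th * INR m)) /\
         fF n a th bs = bs * th + ln (INR m / (1 - dF n a m * th)) /\
         (forall i, (1 <= i <= m)%nat -> x bs i = 0) /\
         (forall i, (m < i <= n)%nat ->
            x bs i = 1 / bs * ln ((1 - th * dF n a m) / (a i * th * INR m))))).
Proof.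
  intros H Hth Hmin Hm. pose proof H as [Hn [Hp Hmo]]. pose proof (an_pos n a H) as Han.
  destruct (Rle_dec (1 / th) (a n * INR n)) as [HA|HB].
  - exists 0. pose proof (caseA n a th H Hth ltac:(lra)) as CA.
    split. lra. split.
    { intros b [Hb|Hb]. left; apply CA; auto. subst; lra. }
    split.
    { intros b [Hb|Hb] E. specialize (CA b Hb). lra. auto. }
    split.
    { intros _. split; auto. apply fF_0. }
    { intros Hc. lra. }
  - assert (HB' : a n * INR n < 1 / th) by lra.
    destruct (m_facts n a th m H Hth HB' Hm) as [Hm1 [Hpos [Hlo Hhi]]].
    set (cs := (1 - th * dF n a m) / (th * INR m)) in *.
    assert (HmR : 1 <= INR m) by (replace 1 with (INR 1) by reflexivity; apply le_INR; lia).
    assert (Hcs0 : 0 < cs) by (unfold cs; apply Rdiv_lt_0_compat; nra).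
    destruct (Phi_Zs_piece n a m cs H Hm1 (Rlt_le _ _ Hlo) Hhi) as [Pcs Zcs].
    set (bs := sF n a m + dF n a m * ln cs).
    assert (Hancs : a n < cs) by (apply Rle_lt_trans with (a (m + 1)%nat); auto; apply (amon n a H); lia).
    assert (Hbs : 0 < bs).
    { pose proof (Phi_strict n a (a n) cs H (Rle_refl _) Hancs). rewrite Phi_an in H0 by auto.
      unfold bs. lra. }
    assert (Hcand : candF n a bs cs) by (apply cand_of_Phi; auto; lra).
    assert (HPsi : PsiF n a cs = 1 / th).
    { unfold PsiF. rewrite Zcs. replace (INR (m - 1)) with (INR m - 1) by (rewrite minus_INR by lia; reflexivity).
      unfold cs. field. split; lra. }
    assert (Dright : forall xi, bs < xi -> 0 < Derive (fF n a th) xi).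
    { intros xi Hxi. destruct (cand_exists n a xi H ltac:(lra)) as [c Hc].
      apply (Derive_sign_pos n a th xi c); auto. lra.
      pose proof (cand_mono n a bs xi cs c H Hxi Hcand Hc).
      pose proof (Psi_strict n a cs c H Hcs0 H0). lra. }
    assert (Dleft : forall xi, 0 < xi < bs -> Derive (fF n a th) xi < 0).
    { intros xi Hxi. destruct (cand_exists n a xi H ltac:(lra)) as [c Hc].
      apply (Derive_sign_neg n a th xi c); auto. lra.
      pose proof (cand_mono n a xi bs c cs H (proj2 Hxi) Hc Hcand).
      pose proof (Psi_strict n a c cs H (cand_pos n a xi c H Hc) H0). lra. }
    assert (Strict : forall b, 0 <= b -> b <> bs -> fF n a th bs < fF n a th b).
    { intros b Hb Hne. destruct (Rtotal_order b bs) as [Hl|[He|Hg]].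
      - apply f_inc_left; auto. intros xi Hxi. apply Dleft. lra.
      - contradiction.
      - apply f_inc_right; auto. lra. intros xi Hxi. apply Dright. lra. }
    exists bs. split. lra. split.
    { intros b Hb. destruct (Req_dec b bs) as [->|Hne]. lra. left; apply Strict; auto. }
    split.
    { intros b Hb E. destruct (Req_dec b bs) as [->|Hne]; auto. specialize (Strict b Hb Hne). lra. }
    split.
    { intros HA. lra. }
    intros _. split. reflexivity. split.
    { unfold fF. destruct Hcand as [_ [_ Z]]. rewrite Z, Zcs.
      replace (INR (m - 1)) with (INR m - 1) by (rewrite minus_INR by lia; reflexivity).
      f_equal. ring. f_equal. unfold cs. field. split; nra. }
    pose proof (min_ident n a bs cs (x bs) H Hbs Hcand (Hmin bs Hbs)) as MI.
    split.
    { intros i Hi. rewrite MI by lia. unfold ycand. destruct (Nat.eqb i 1) eqn:Ei. unfold Rdiv; ring.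
      apply Nat.eqb_neq in Ei. rewrite Rmax_right. replace (a i / a i) with 1 by (field; apply Rgt_not_eq, Hp; lia).
      rewrite ln_1. unfold Rdiv; ring. apply Rle_trans with (a m). apply Hhi; lia. apply (amon n a H); lia. }
    { intros i Hi. rewrite MI by lia. unfold ycand. destruct (Nat.eqb i 1) eqn:Ei.
      apply Nat.eqb_eq in Ei; lia.
      rewrite Rmax_left. unfold Rdiv at 1. rewrite Rmult_comm. unfold Rdiv. rewrite Rmult_1_l. f_equal. f_equal.
      unfold cs. field. split. nra. split. lra. apply Rgt_not_eq, Hp; lia.
      apply Rle_trans with (a (m + 1)%nat). apply (amon n a H); lia. lra. }
Qed.

Lemma caseA_limits n a x mt : HypF n a ->
  (forall b, 0 < b -> minimizerF n a b (x b)) -> is_mtilde n a mt ->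
  (forall i, (1 <= i <= mt)%nat -> filterlim (fun b => x b i) (at_right 0) (locally 0)) /\
  (forall i, (mt < i <= n)%nat -> filterlim (fun b => x b i) (at_right 0)
                                      (locally (1 / (a n * INR (n - mt))))).
Proof.
  intros H Hmin [K [HK [HaK [Hmax Hmt]]]]. pose proof H as [Hn [Hp Hmo]].
  pose proof (an_pos n a H) as Han.
  assert (Hflat : forall i, (mt < i <= n)%nat -> a i = a n).
  { intros i Hi. apply Rle_antisym. rewrite <- HaK. apply (amon n a H); lia. apply (amon n a H); lia. }
  assert (Hgap : (2 <= mt)%nat -> a n < a mt).
  { intros Hm2. destruct (amon n a H mt n ltac:(lia) ltac:(lia)) as [Hl|He]; auto.
    exfalso. assert (K + 1 <= K)%nat; [|lia]. apply Hmax. lia.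
    replace (n - (K + 1) + 1)%nat with mt by lia. auto. }
  assert (Hdel : exists d, 0 < d /\ forall b c, 0 < b < d -> candF n a b c -> (2 <= mt)%nat -> c < a mt).
  { destruct (Compare_dec.le_lt_dec 2 mt) as [Hm2|Hm2].
    - exists (PhiF n a (a mt)). split.
      + pose proof (Phi_strict n a (a n) (a mt) H (Rle_refl _) (Hgap Hm2)). rewrite Phi_an in H0 by auto. lra.
      + intros b c Hb Hc _. destruct (Rlt_or_le c (a mt)) as [Hl|Hl]; auto.
        destruct Hc as [Hc1 [Pc _]]. pose proof (Phi_mono n a (a mt) c H ltac:(left; apply Hgap; auto) Hl). lra.
    - exists 1. split. lra. intros; lia. }
  destruct Hdel as [d [Hd Hdc]].
  assert (Key : forall b, 0 < b < d ->
     (forall i, (1 <= i <= mt)%nat -> x b i = 0) /\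
     (forall i, (mt < i <= n)%nat -> x b i = 1 / (a n * INR (n - mt)))).
  { intros b Hb. destruct (cand_exists n a b H (proj1 Hb)) as [c Hc].
    pose proof (Hdc b c Hb Hc) as Hcl.
    pose proof (min_ident n a b c (x b) H (proj1 Hb) Hc (Hmin b (proj1 Hb))) as MI.
    pose proof (cand_pos n a b c H Hc) as Hc0.
    split.
    - intros i Hi. rewrite MI by lia. unfold ycand. destruct (Nat.eqb i 1) eqn:Ei. unfold Rdiv; ring.
      apply Nat.eqb_neq in Ei. rewrite Rmax_right.
      replace (a i / a i) with 1 by (field; apply Rgt_not_eq, Hp; lia). rewrite ln_1. unfold Rdiv; ring.
      left. apply Rlt_le_trans with (a mt). apply Hcl; lia. apply (amon n a H); lia.
    - intros i Hi. rewrite MI by lia. unfold ycand. destruct (Nat.eqb i 1) eqn:Ei.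
      apply Nat.eqb_eq in Ei; lia.
      destruct Hc as [Hc1 [Pc _]].
      assert (EPhi : PhiF n a c = INR (n - mt) * (a n * ln (c / a n))).
      { unfold PhiF. rewrite (sum_split _ 2 mt n) by lia.
        rewrite sum_zero_loc.
        2:{ intros k Hk. rewrite Rmax_right. replace (a k / a k) with 1 by (field; apply Rgt_not_eq, Hp; lia).
            rewrite ln_1; ring. left. apply Rlt_le_trans with (a mt). apply Hcl; lia. apply (amon n a H); lia. }
        rewrite (sum_ext_loc_R _ (fun _ => a n * ln (c / a n))).
        2:{ intros k Hk. rewrite Hflat by lia. rewrite Rmax_left by auto. reflexivity. }
        rewrite sum_n_m_const. replace (S n - S mt)%nat with (n - mt)%nat by lia. simpl. ring. }
      rewrite Hflat by lia. rewrite Rmax_left by auto.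
      assert (HK0 : 0 < INR (n - mt)) by (apply lt_0_INR; lia).
      rewrite Pc in EPhi.
      apply Rmult_eq_reg_l with b. 2: lra.
      replace (b * (ln (c / a n) / b)) with (ln (c / a n)) by (field; lra).
      rewrite EPhi. field. split; lra. }
  split.
  - intros i Hi. apply filterlim_right_eps. intros eps Heps. exists d. split; auto.
    intros t Ht. rewrite Rplus_0_l in Ht. rewrite (proj1 (Key t Ht) i Hi).
    replace (0 - 0) with 0 by ring. rewrite Rabs_R0. auto.
  - intros i Hi. apply filterlim_right_eps. intros eps Heps. exists d. split; auto.
    intros t Ht. rewrite Rplus_0_l in Ht. rewrite (proj2 (Key t Ht) i Hi).
    unfold Rminus. rewrite Rplus_opp_r, Rabs_R0. auto.
Qed.

Lemma part_i :
  (forall (n : nat) (a : nat -> R) (theta : R) (x : R -> nat -> R) (m mt : nat),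
    (2 <= n)%nat ->
    (forall i, (1 <= i <= n)%nat -> 0 < a i) ->
    (forall i, (1 <= i < n)%nat -> a (i + 1)%nat <= a i) ->
    sum_n_m a 1 n <= 1 ->
    (forall b, 0 < b -> minimizerF n a b (x b)) ->
    0 < theta ->
    is_mF n a theta m ->
    is_mtilde n a mt ->
    let f := fF n a theta in
    (forall b, 0 <= b -> 0 < f b) /\
    convex_on (fun b => 0 <= b) f /\
    (forall b, 0 < b -> ex_derive f b) /\
    (forall b, 0 < b -> continuous (Derive f) b) /\
    filterlim (fun h => (f h - f 0) / h) (at_right 0)
      (locally (theta - 1 / (a n * INR n))) /\
    filterlim (Derive f) (at_right 0) (locally (theta - 1 / (a n * INR n))) /\
    f 0 = ln (INR n) /\
    filterlim f (Rbar_locally p_infty) (Rbar_locally p_infty) /\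
    (exists bs : R,
      0 <= bs /\
      (forall b, 0 <= b -> f bs <= f b) /\
      (forall b, 0 <= b -> f b = f bs -> b = bs) /\
      (a n * INR n >= 1 / theta -> bs = 0 /\ f bs = ln (INR n)) /\
      (a n * INR n < 1 / theta ->
         bs = sF n a m + dF n a m * ln ((1 - theta * dF n a m) / (theta * INR m)) /\
         f bs = bs * theta + ln (INR m / (1 - dF n a m * theta)) /\
         (forall i, (1 <= i <= m)%nat -> x bs i = 0) /\
         (forall i, (m < i <= n)%nat ->
            x bs i = 1 / bs * ln ((1 - theta * dF n a m) / (a i * theta * INR m))))) /\
    (a n * INR n >= 1 / theta ->
      (forall i, (1 <= i <= mt)%nat ->
         filterlim (fun b => x b i) (at_right 0) (locally 0)) /\
      (forall i, (mt < i <= n)%nat ->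
         filterlim (fun b => x b i) (at_right 0)
           (locally (1 / (a n * INR (n - mt))))))).
Proof.
  intros n a theta x m mt Hn Hp Hmo _ Hmin Hth Hm Hmt f. subst f.
  assert (H : HypF n a) by (split; [|split]; auto).
  assert (HnR : 2 <= INR n) by (replace 2 with (INR 2) by (simpl; ring); apply le_INR; lia).
  split.
  { intros b [Hb|Hb].
    - destruct (cand_exists n a b H Hb) as [c Hc]. pose proof (z0_ge1 n a b c H Hc).
      unfold fF. assert (0 <= ln (z0F n a b)) by (rewrite <- ln_1; apply ln_le; lra). nra.
    - subst b. rewrite fF_0. rewrite <- ln_1. apply ln_increasing; lra. }
  split. apply fF_convex; auto.
  split.
  { intros b Hb. destruct (Derive_val n a theta b H Hb) as [c [_ [_ D]]].
    exists (Derive (fF n a theta) b). apply is_derive_Reals; auto. }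
  split.
  { intros b Hb. apply continuity_pt_filterlim. apply fF_Derive_cont; auto. }
  split.
  { apply filterlim_right_eps. intros eps Heps. destruct (fF_rderiv n a theta H eps Heps) as [d [Hd Hd2]].
    exists d. split; auto. intros t Ht. specialize (Hd2 t ltac:(lra)). rewrite Rplus_0_l in Hd2.
    unfold LF in Hd2. exact Hd2. }
  split.
  { apply filterlim_right_eps. intros eps Heps. destruct (fF_Derive_r n a theta H eps Heps) as [d [Hd Hd2]].
    exists d. split; [exact Hd|]. intros t Ht. specialize (Hd2 t Ht). unfold LF in Hd2. exact Hd2. }
  split. apply fF_0.
  split. apply f_to_infty; auto.
  split. apply exists_bs; auto.
  intros _. apply caseA_limits; auto.
Qed.

Lemma Series_zero : Series (fun _ => 0) = 0.
Proof.
  unfold Series. rewrite (Lim_seq_ext _ (fun _ => 0)). rewrite Lim_seq_const. reflexivity.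
  intros n. unfold sum_n. exact (sum_n_m_const_zero (G := R_AbelianMonoid) 0 n).
Qed.

Lemma ex_series_zero : ex_series (fun _ : nat => 0).
Proof.
  exists 0. unfold is_series. apply (filterlim_ext (fun _ => 0)). intros n. unfold sum_n.
  symmetry. exact (sum_n_m_const_zero (G := R_AbelianMonoid) 0 n). apply filterlim_const.
Qed.

Lemma Series_nonneg (u : nat -> R) : (forall n, 0 <= u n) -> ex_series u -> 0 <= Series u.
Proof.
  intros H He. rewrite <- Series_zero. apply Series_le; auto. intros; split; [lra|auto].
Qed.

Lemma Series_le_R (u v : nat -> R) : (forall n, u n <= v n) -> ex_series u -> ex_series v -> Series u <= Series v.
Proof.
  intros H Hu Hv. assert (0 <= Series (fun n => v n - u n)).
  { apply Series_nonneg. intros; specialize (H n); lra.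
    apply (ex_series_minus v u Hv Hu). }
  rewrite Series_minus in H0 by auto. lra.
Qed.

Lemma ex_series_nonneg_le (u v : nat -> R) : (forall n, 0 <= u n <= v n) -> ex_series v -> ex_series u.
Proof.
  intros H Hv. apply (ex_series_le u v); auto. intros n. specialize (H n).
  change (norm (u n)) with (Rabs (u n)). rewrite Rabs_right; lra.
Qed.

Lemma ex_series_plus_R (u v : nat -> R) : ex_series u -> ex_series v -> ex_series (fun n => u n + v n).
Proof. intros. apply (ex_series_plus u v); auto. Qed.

Lemma ex_series_minus_R (u v : nat -> R) : ex_series u -> ex_series v -> ex_series (fun n => u n - v n).
Proof. intros. apply (ex_series_minus u v); auto. Qed.

Lemma ex_series_scal_R (c : R) (u : nat -> R) : ex_series u -> ex_series (fun n => c * u n).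
Proof. intros. apply (ex_series_scal_l c u); auto. Qed.

Lemma ex_series_shift1 (u : nat -> R) : ex_series u -> ex_series (fun k => u (S k)).
Proof. intros. apply (ex_series_incr_1 u). auto. Qed.

Lemma ex_series_unshift1 (u : nat -> R) : ex_series (fun k => u (S k)) -> ex_series u.
Proof. intros. apply (ex_series_incr_1 u). auto. Qed.

Lemma ex_series_tail (u : nat -> R) p : ex_series u -> ex_series (fun k => u (p + k)%nat).
Proof. intros. apply (ex_series_incr_n u p). auto. Qed.

Lemma ex_series_untail (u : nat -> R) p : ex_series (fun k => u (p + k)%nat) -> ex_series u.
Proof. intros. apply (ex_series_incr_n u p). auto. Qed.

Definition Tail (f : nat -> R) (p : nat) : R := Series (fun j => f (p + j)%nat).

Lemma Tail_first (f : nat -> R) p : ex_series (fun j => f (p + j)%nat) -> Tail f p = f p + Tail f (S p).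
Proof.
  intros H. unfold Tail. rewrite Series_incr_1 by auto. rewrite Nat.add_0_r. f_equal.
  apply Series_ext. intros n. f_equal. lia.
Qed.

Lemma ex_tail_S (f : nat -> R) p : ex_series (fun j => f (p + j)%nat) -> ex_series (fun j => f (S p + j)%nat).
Proof.
  intros H. apply ex_series_shift1 in H. apply (ex_series_ext _ _ (fun n => f_equal f (eq_sym (plus_n_Sm p n)))) in H.
  auto.
Qed.

Lemma ex_tail_shift (f : nat -> R) p q : (p <= q)%nat -> ex_series (fun j => f (p + j)%nat) -> ex_series (fun j => f (q + j)%nat).
Proof.
  intros Hpq H. replace q with (p + (q - p))%nat by lia.
  apply (ex_series_tail _ (q - p)) in H. apply (ex_series_ext _ _ (fun n => f_equal f (Nat.add_assoc p (q-p) n))) in H. auto.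
Qed.

Lemma Tail_split (f : nat -> R) p q : (p <= S q)%nat -> ex_series (fun j => f (p + j)%nat) ->
  Tail f p = sum_n_m f p q + Tail f (S q).
Proof.
  intros Hpq H. induction q as [|q IH].
  - destruct p as [|p].
    + rewrite sum_n_n. apply Tail_first; auto.
    + assert (p = 0)%nat by lia. subst. rewrite sum_n_m_zero by lia. simpl. change (@zero R_AbelianMonoid) with 0. ring.
  - destruct (Nat.eq_dec p (S (S q))) as [->|Hne].
    + rewrite sum_n_m_zero by lia. change (@zero R_AbelianMonoid) with 0. ring.
    + rewrite IH by lia. rewrite sum_last by lia.
      rewrite (Tail_first f (S q)). change (@plus R_AbelianMonoid) with Rplus. ring.
      apply (ex_tail_shift f p); auto; lia.
Qed.

Lemma Series_Tail0 (f : nat -> R) : Series f = Tail f 0.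
Proof. unfold Tail. apply Series_ext. intros; reflexivity. Qed.

Lemma Tail_nonneg (f : nat -> R) p : (forall i, (p <= i)%nat -> 0 <= f i) -> ex_series (fun j => f (p + j)%nat) -> 0 <= Tail f p.
Proof. intros H He. apply Series_nonneg; auto. intros; apply H; lia. Qed.

Lemma Tail_ge_term (f : nat -> R) p i : (p <= i)%nat -> (forall k, (p <= k)%nat -> 0 <= f k) ->
  ex_series (fun j => f (p + j)%nat) -> f i <= Tail f p.
Proof.
  intros Hi H He. destruct i as [|i].
  - assert (p = 0)%nat by lia. subst p. rewrite Tail_first by auto.
    assert (0 <= Tail f 1). { apply Tail_nonneg. intros; apply H; lia. apply (ex_tail_shift f 0); auto; lia. }
    lra.
  - rewrite (Tail_split f p i) by (auto; lia).
    rewrite Tail_first by (apply (ex_tail_shift f p); auto; lia).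
    assert (0 <= Tail f (S (S i))).
    { apply Tail_nonneg. intros; apply H; lia. apply (ex_tail_shift f p); auto; lia. }
    assert (0 <= sum_n_m f p i) by (apply sum_pos_loc; intros; apply H; lia).
    lra.
Qed.

Lemma Tail_le (f g : nat -> R) p : (forall i, (p <= i)%nat -> f i <= g i) ->
  ex_series (fun j => f (p + j)%nat) -> ex_series (fun j => g (p + j)%nat) -> Tail f p <= Tail g p.
Proof. intros H Hf Hg. apply Series_le_R; auto. intros; apply H; lia. Qed.

Lemma Tail_plus (f g : nat -> R) p : ex_series (fun j => f (p + j)%nat) -> ex_series (fun j => g (p + j)%nat) ->
  Tail (fun i => f i + g i) p = Tail f p + Tail g p.
Proof. intros. unfold Tail. apply Series_plus; auto. Qed.

Lemma Tail_minus (f g : nat -> R) p : ex_series (fun j => f (p + j)%nat) -> ex_series (fun j => g (p + j)%nat) ->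
  Tail (fun i => f i - g i) p = Tail f p - Tail g p.
Proof. intros. unfold Tail. apply Series_minus; auto. Qed.

Lemma Tail_scal (c : R) (f : nat -> R) p : Tail (fun i => c * f i) p = c * Tail f p.
Proof. unfold Tail. apply Series_scal_l. Qed.

Lemma Tail_ext_loc (f g : nat -> R) p : (forall i, (p <= i)%nat -> f i = g i) -> Tail f p = Tail g p.
Proof. intros H. unfold Tail. apply Series_ext. intros; apply H; lia. Qed.

Lemma ex_tail_ext_loc (f g : nat -> R) p : (forall i, (p <= i)%nat -> f i = g i) ->
  ex_series (fun j => f (p + j)%nat) -> ex_series (fun j => g (p + j)%nat).
Proof. intros H. apply ex_series_ext. intros; apply H; lia. Qed.

Lemma ex_tail_le (f g : nat -> R) p : (forall i, (p <= i)%nat -> 0 <= f i <= g i) ->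
  ex_series (fun j => g (p + j)%nat) -> ex_series (fun j => f (p + j)%nat).
Proof. intros H. apply ex_series_nonneg_le. intros; apply H; lia. Qed.

Lemma ex_tail_plus (f g : nat -> R) p : ex_series (fun j => f (p + j)%nat) -> ex_series (fun j => g (p + j)%nat) ->
  ex_series (fun j => f (p + j)%nat + g (p + j)%nat).
Proof. apply ex_series_plus_R. Qed.

Lemma ex_tail_scal (c : R) (f : nat -> R) p : ex_series (fun j => f (p + j)%nat) -> ex_series (fun j => c * f (p + j)%nat).
Proof. apply ex_series_scal_R. Qed.

Lemma Tail_lim (f : nat -> R) : ex_series (fun j => f (0 + j)%nat) ->
  forall eps, 0 < eps -> exists N, forall p, (N <= p)%nat -> Rabs (Tail f p) < eps.
Proof.
  intros He eps Heps.
  assert (Hc : is_lim_seq (sum_n (fun j => f (0 + j)%nat)) (Series (fun j => f (0 + j)%nat))) by (apply Series_correct; auto).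
  apply is_lim_seq_spec in Hc. destruct (Hc (mkposreal eps Heps)) as [N HN].
  exists (S N). intros p Hp.
  assert (E : Tail f 0 = sum_n_m f 0 (p - 1) + Tail f p).
  { rewrite (Tail_split f 0 (p - 1)) by (auto; lia). replace (S (p - 1)) with p by lia. reflexivity. }
  specialize (HN (p - 1)%nat ltac:(lia)).
  change (Rabs (sum_n (fun j => f (0 + j)%nat) (p - 1) - Series (fun j => f (0 + j)%nat)) < eps) in HN.
  unfold sum_n in HN.
  assert (E2 : sum_n_m (fun j => f (0 + j)%nat) 0 (p - 1) = sum_n_m f 0 (p - 1)) by (apply sum_ext_R; intros; reflexivity).
  rewrite E2 in HN. unfold Tail at 1 in E.
  replace (Tail f p) with (- (sum_n_m f 0 (p - 1) - Series (fun j => f (0 + j)%nat))) by lra.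
  rewrite Rabs_Ropp. auto.
Qed.

Definition HypI (a : nat -> R) : Prop :=
  (forall i, (1 <= i)%nat -> 0 < a i) /\ (forall i, (1 <= i)%nat -> a (i + 1)%nat <= a i) /\
  ex_series (fun j => a (j + 1)%nat) /\ Series (fun j => a (j + 1)%nat) <= 1 /\
  ex_series (fun j => eta (a (j + 1)%nat)).

Definition etaa (a : nat -> R) (i : nat) : R := eta (a i).

Lemma exA a p : HypI a -> (1 <= p)%nat -> ex_series (fun j => a (p + j)%nat).
Proof.
  intros [_ [_ [He _]]] Hp. apply (ex_tail_shift a 1); auto.
  apply (ex_series_ext (fun j => a (j + 1)%nat)); auto. intros; f_equal; lia.
Qed.

Lemma exE a p : HypI a -> (1 <= p)%nat -> ex_series (fun j => etaa a (p + j)%nat).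
Proof.
  intros [_ [_ [_ [_ He]]]] Hp. apply (ex_tail_shift (etaa a) 1); auto.
  apply (ex_series_ext (fun j => eta (a (j + 1)%nat))); auto. intros; unfold etaa; f_equal; f_equal; lia.
Qed.

Lemma apos a i : HypI a -> (1 <= i)%nat -> 0 < a i.
Proof. intros [H _] Hi. auto. Qed.

Lemma a_le1 a i : HypI a -> (1 <= i)%nat -> a i <= 1.
Proof.
  intros H Hi. pose proof H as [Hp [_ [He [Hs _]]]].
  apply Rle_trans with (Tail a 1). apply Tail_ge_term; auto. intros; left; apply Hp; lia. apply exA; auto.
  unfold Tail. rewrite (Series_ext _ (fun j => a (j + 1)%nat)); auto. intros; f_equal; lia.
Qed.

Lemma amonI a : HypI a -> forall i j, (1 <= i <= j)%nat -> a j <= a i.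
Proof.
  intros [Hp [Hm _]] i j Hij. induction j as [|j IH]. lia.
  destruct (Nat.eq_dec i (S j)) as [->|Hne]. lra.
  apply Rle_trans with (a j). replace (S j) with (j + 1)%nat by lia. apply Hm; lia. apply IH; lia.
Qed.

Lemma eta_nonneg x : 0 < x <= 1 -> 0 <= eta x.
Proof.
  intros Hx. rewrite eta_pos by lra. assert (ln x <= 0) by (rewrite <- ln_1; apply ln_le; lra). nra.
Qed.

Lemma a_small a c N : HypI a -> 0 < c -> exists i, (N <= i)%nat /\ (1 <= i)%nat /\ a i < c.
Proof.
  intros H Hc. pose proof H as [Hp [_ [He _]]].
  pose proof (ex_series_lim_0 _ He) as L. apply is_lim_seq_spec in L.
  destruct (L (mkposreal c Hc)) as [M HM]. exists (M + N + 1)%nat. split. lia. split. lia.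
  specialize (HM (M + N)%nat ltac:(lia)). simpl in HM. rewrite Rminus_0_r in HM.
  apply Rabs_def2 in HM. lra.
Qed.

Lemma dI_Tail a k : dI a k = Tail a (k + 1).
Proof. reflexivity. Qed.
Lemma sI_Tail a k : sI a k = Tail (etaa a) (k + 1).
Proof. reflexivity. Qed.

Lemma dI_peel a k : HypI a -> (1 <= k)%nat -> dI a (k - 1) = a k + dI a k.
Proof.
  intros H Hk. rewrite !dI_Tail. replace (k - 1 + 1)%nat with k by lia. rewrite Nat.add_1_r.
  apply Tail_first. apply exA; auto.
Qed.

Lemma sI_peel a k : HypI a -> (1 <= k)%nat -> sI a (k - 1) = eta (a k) + sI a k.
Proof.
  intros H Hk. rewrite !sI_Tail. replace (k - 1 + 1)%nat with k by lia. rewrite Nat.add_1_r.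
  apply Tail_first. apply exE; auto.
Qed.

Lemma dI_pos a k : HypI a -> 0 < dI a k.
Proof.
  intros H. rewrite dI_Tail. apply Rlt_le_trans with (a (k + 1)%nat). apply apos; auto; lia.
  apply Tail_ge_term; auto. intros; left; apply apos; auto; lia. apply exA; auto; lia.
Qed.

Lemma sI_nonneg a k : HypI a -> 0 <= sI a k.
Proof.
  intros H. rewrite sI_Tail. apply Tail_nonneg. intros; apply eta_nonneg; split. apply apos; auto; lia.
  apply a_le1; auto; lia. apply exE; auto; lia.
Qed.

Definition BI a k := sI a k + dI a k * ln (a k).

Lemma bkI_eq a k : HypI a -> (1 <= k)%nat -> bk a (dI a) (sI a) k = BI a k.
Proof.
  intros H Hk. unfold bk, BI. rewrite dI_peel, sI_peel by auto. rewrite eta_pos by (apply apos; auto). ring.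
Qed.

Lemma BI_succ a k : HypI a -> BI a (k + 1) = sI a k + dI a k * ln (a (k + 1)%nat).
Proof. intros H. rewrite <- bkI_eq by (auto; lia). unfold bk. replace (k + 1 - 1)%nat with k by lia. reflexivity. Qed.

Lemma BI_step a k : HypI a -> (1 <= k)%nat -> BI a (k + 1) <= BI a k.
Proof.
  intros H Hk. rewrite BI_succ by auto. unfold BI.
  assert (0 < dI a k) by (apply dI_pos; auto).
  assert (ln (a (k + 1)%nat) <= ln (a k)) by (apply ln_le; [apply apos; auto; lia| apply (amonI a H); lia]).
  nra.
Qed.

Lemma BI_mono a : HypI a -> forall i j, (1 <= i <= j)%nat -> BI a j <= BI a i.
Proof.
  intros H i j Hij. induction j as [|j IH]. lia.
  destruct (Nat.eq_dec i (S j)) as [->|Hne]. lra.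
  apply Rle_trans with (BI a j). replace (S j) with (j + 1)%nat by lia. apply BI_step; auto; lia.
  apply IH; lia.
Qed.

Lemma BI_le_s a k : HypI a -> (1 <= k)%nat -> BI a k <= sI a k.
Proof.
  intros H Hk. unfold BI. assert (0 < dI a k) by (apply dI_pos; auto).
  assert (ln (a k) <= 0) by (rewrite <- ln_1; apply ln_le; [apply apos; auto|apply a_le1; auto]).
  nra.
Qed.

Lemma BI_small a b : HypI a -> 0 < b -> exists J, (2 <= J)%nat /\ BI a J <= b.
Proof.
  intros H Hb. destruct (Tail_lim (etaa a)) with (eps := b) as [N HN]; auto.
  apply (ex_series_untail _ 1). exact (exE a 1 H ltac:(lia)).
  exists (N + 2)%nat. split. lia.
  apply Rle_trans with (sI a (N + 2)). apply BI_le_s; auto; lia.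
  rewrite sI_Tail. specialize (HN (N + 2 + 1)%nat ltac:(lia)). apply Rabs_def2 in HN. lra.
Qed.

Lemma pieceI_exists a b : HypI a -> 0 < b ->
  exists k, (1 <= k)%nat /\ BI a (k + 1) <= b /\ ((2 <= k)%nat -> b < BI a k).
Proof.
  intros H Hb. destruct (Rle_dec (BI a 2) b) as [Hle|Hlt].
  - exists 1%nat. split. lia. split. auto. intros; lia.
  - destruct (BI_small a b H Hb) as [J [HJ HBJ]].
    assert (Gen : forall t j, (j + t = J)%nat -> (2 <= j)%nat -> b < BI a j ->
       exists k, (1 <= k)%nat /\ BI a (k + 1) <= b /\ ((2 <= k)%nat -> b < BI a k)).
    { induction t as [|t IH]; intros j Hjt Hj Hbj.
      - rewrite Nat.add_0_r in Hjt. subst j. lra.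
      - destruct (Rle_dec (BI a (j + 1)) b) as [Hle2|Hlt2].
        + exists j. split. lia. split; auto.
        + apply (IH (j + 1)%nat); try lia. lra. }
    apply (Gen (J - 2)%nat 2%nat); try lia. lra.
Qed.

Lemma Series_single_R (u : nat -> R) j0 : (forall j, j <> j0 -> u j = 0) -> Series u = u j0.
Proof.
  intros H.
  assert (Hex : ex_series u).
  { apply (ex_series_untail _ (S j0)). apply (ex_series_ext (fun _ => 0)). intros k. symmetry; apply H; lia.
    apply ex_series_zero. }
  rewrite Series_Tail0. rewrite (Tail_split u 0 j0) by (auto; lia).
  rewrite (sum_single u 0 j0 j0) by (try lia; intros; apply H; auto).
  rewrite (Tail_ext_loc u (fun _ => 0)) by (intros; apply H; lia). unfold Tail. rewrite Series_zero. ring.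
Qed.

Definition TP (a : nat -> R) (c : R) (i : nat) := a i * ln (Rmax c (a i) / a i).
Definition TZ (a : nat -> R) (c : R) (i : nat) := a i / Rmax c (a i).
Definition PhiI a c := Tail (TP a c) 2.
Definition ZsI a c := Tail (TZ a c) 2.

Lemma TZ_bounds a c i : HypI a -> 0 < c -> (1 <= i)%nat -> 0 <= TZ a c i <= / c * a i.
Proof.
  intros H Hc Hi. pose proof (apos a i H Hi). unfold TZ. split.
  left. apply Rdiv_lt_0_compat; auto. apply Rmax_pos_l; auto.
  unfold Rdiv. rewrite Rmult_comm. apply Rmult_le_compat_r. lra. apply Rinv_le_contravar; auto. apply Rmax_l.
Qed.

Lemma TP_nonneg a c i : HypI a -> (1 <= i)%nat -> 0 <= TP a c i.
Proof.
  intros H Hi. pose proof (apos a i H Hi). unfold TP. apply Rmult_le_pos. lra.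
  rewrite <- ln_1. apply ln_le. lra. apply Rmax_ratio_ge1; auto.
Qed.

Lemma TP_bound a c i : HypI a -> 0 < c -> (1 <= i)%nat -> TP a c i <= Rabs (ln c) * a i + etaa a i.
Proof.
  intros H Hc Hi. pose proof (apos a i H Hi). pose proof (a_le1 a i H Hi).
  assert (0 <= etaa a i) by (apply eta_nonneg; lra).
  assert (0 <= Rabs (ln c) * a i) by (apply Rmult_le_pos; [apply Rabs_pos|lra]).
  unfold TP, Rmax. destruct (Rle_dec c (a i)).
  - replace (a i / a i) with 1 by (field; lra). rewrite ln_1. lra.
  - unfold etaa. rewrite eta_pos by lra. rewrite ln_div by lra.
    assert (ln c <= Rabs (ln c)) by apply Rle_abs. nra.
Qed.

Lemma exTZ a c p : HypI a -> 0 < c -> (1 <= p)%nat -> ex_series (fun j => TZ a c (p + j)%nat).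
Proof.
  intros H Hc Hp. apply (ex_tail_le _ (fun i => / c * a i)). intros; apply TZ_bounds; auto; lia.
  apply (ex_tail_scal (/ c) a p). apply exA; auto.
Qed.

Lemma exTP a c p : HypI a -> 0 < c -> (1 <= p)%nat -> ex_series (fun j => TP a c (p + j)%nat).
Proof.
  intros H Hc Hp. apply (ex_tail_le _ (fun i => Rabs (ln c) * a i + etaa a i)).
  intros; split. apply TP_nonneg; auto; lia. apply TP_bound; auto; lia.
  apply (ex_tail_plus (fun i => Rabs (ln c) * a i) (etaa a) p). apply (ex_tail_scal (Rabs (ln c)) a p). apply exA; auto. apply exE; auto.
Qed.

Lemma PhiZs_pieceI a k c : HypI a -> (1 <= k)%nat -> 0 < c -> a (k + 1)%nat <= c ->
  ((2 <= k)%nat -> c <= a k) ->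
  PhiI a c = sI a k + dI a k * ln c /\ ZsI a c = INR (k - 1) + dI a k / c.
Proof.
  intros H Hk Hc Hclo Hchi.
  assert (Hlow : forall i, (2 <= i <= k)%nat -> Rmax c (a i) = a i).
  { intros i Hi. apply Rmax_right. apply Rle_trans with (a k). apply Hchi; lia.
    apply (amonI a H); lia. }
  assert (Hup : forall i, (k + 1 <= i)%nat -> Rmax c (a i) = c).
  { intros i Hi. apply Rmax_left. apply Rle_trans with (a (k+1)%nat); auto.
    apply (amonI a H); lia. }
  rewrite dI_Tail, sI_Tail. rewrite Nat.add_1_r. split.
  - unfold PhiI. rewrite (Tail_split _ 2 k) by (try lia; apply exTP; auto).
    rewrite sum_zero_loc.
    2:{ intros i Hi. unfold TP. rewrite Hlow by auto. replace (a i / a i) with 1 by (field; apply Rgt_not_eq, apos; auto; lia).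
        rewrite ln_1. ring. }
    rewrite (Tail_ext_loc _ (fun i => ln c * a i + etaa a i)).
    2:{ intros i Hi. unfold TP, etaa. rewrite Hup by lia. rewrite eta_pos by (apply apos; auto; lia).
        rewrite ln_div by (auto; apply apos; auto; lia). ring. }
    rewrite Tail_plus, Tail_scal. ring.
    apply (ex_tail_scal (ln c) a). apply exA; auto; lia. apply exE; auto; lia.
  - unfold ZsI. rewrite (Tail_split _ 2 k) by (try lia; apply exTZ; auto).
    rewrite (sum_ext_loc_R (TZ a c) (fun _ => 1) 2 k).
    2:{ intros i Hi. unfold TZ. rewrite Hlow by auto. field. apply Rgt_not_eq, apos; auto; lia. }
    rewrite (Tail_ext_loc (TZ a c) (fun i => / c * a i)).
    2:{ intros i Hi. unfold TZ. rewrite Hup by lia. unfold Rdiv. ring. }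
    rewrite Tail_scal, sum_n_m_const.
    replace (S k - 2)%nat with (k - 1)%nat by lia. unfold Rdiv. ring.
Qed.

Definition candI a b c := 0 < c /\ PhiI a c = b /\ z0I a b = 1 + ZsI a c.

Lemma pieceI_cand a b k : HypI a -> 0 < b ->
  (1 <= k)%nat -> BI a (k + 1) <= b -> ((2 <= k)%nat -> b < BI a k) ->
  candI a b (exp ((b - sI a k) / dI a k)).
Proof.
  intros H Hb Hk Hlo Hhi. set (c := exp ((b - sI a k) / dI a k)).
  assert (Hd : 0 < dI a k) by (apply dI_pos; auto).
  assert (Hc0 : 0 < c) by apply exp_pos.
  assert (Hlnc : ln c = (b - sI a k) / dI a k) by (unfold c; apply ln_exp).
  assert (Hclo : a (k + 1)%nat <= c).
  { rewrite BI_succ in Hlo by auto.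
    rewrite <- (exp_ln (a (k+1)%nat)) by (apply apos; auto; lia). unfold c.
    apply exp_le_m. apply Rcomplements.Rle_div_r; auto. lra. }
  assert (Hchi : (2 <= k)%nat -> c < a k).
  { intros Hk2. specialize (Hhi Hk2). unfold BI in Hhi.
    rewrite <- (exp_ln (a k)) by (apply apos; auto). unfold c.
    apply exp_increasing. apply Rcomplements.Rlt_div_l; auto. lra. }
  destruct (PhiZs_pieceI a k c H Hk Hc0 Hclo (fun h => Rlt_le _ _ (Hchi h))) as [P Z].
  split; [auto|split].
  - rewrite P, Hlnc. field. lra.
  - unfold z0I. rewrite (Series_single_R _ (k - 1)).
    + replace (k - 1 + 1)%nat with k by lia. unfold z0_term.
      assert (Hind : indB a (dI a) (sI a) k b = 1).
      { unfold indB. destruct (Nat.eqb k 1) eqn:Ek.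
        - apply Nat.eqb_eq in Ek; subst k. rewrite bkI_eq by (auto; lia).
          destruct (Rle_dec (BI a 2) b); [reflexivity|]. exfalso. apply n. exact Hlo.
        - apply Nat.eqb_neq in Ek. rewrite (bkI_eq a (k + 1)) by (auto; lia).
          rewrite (bkI_eq a k) by (auto; lia).
          destruct (Rle_dec (BI a (k + 1)) b); [|contradiction].
          destruct (Rlt_dec b (BI a k)); [reflexivity|]. exfalso; apply n; apply Hhi; lia. }
      rewrite Hind.
      assert (Hex : exp ((sI a k - b) / dI a k) = / c).
      { unfold c. rewrite <- exp_Ropp. f_equal. field. lra. }
      rewrite Hex, Z.
      replace (INR k) with (1 + INR (k - 1)) by (replace k with (S (k - 1)) at 2 by lia; rewrite S_INR; ring).
      field. lra.
    + intros j Hj. set (i := (j + 1)%nat). assert (Hi1 : (1 <= i)%nat) by (unfold i; lia).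
      assert (Hik : i <> k) by (unfold i; lia). clearbody i.
      unfold z0_term, indB. destruct (Nat.eqb i 1) eqn:Ei.
      * apply Nat.eqb_eq in Ei; subst i. rewrite bkI_eq by (auto; lia).
        destruct (Rle_dec (BI a 2) b) as [Hr|Hr]; [|ring].
        exfalso. assert (BI a k <= BI a 2) by (apply (BI_mono a H); lia).
        specialize (Hhi ltac:(lia)). lra.
      * rewrite (bkI_eq a (i + 1)) by (auto; lia). rewrite (bkI_eq a i) by (auto; lia).
        destruct (Rle_dec (BI a (i + 1)) b) as [Hr|Hr]; [|ring].
        destruct (Rlt_dec b (BI a i)) as [Hr2|Hr2]; [|ring].
        exfalso. apply Nat.eqb_neq in Ei.
        destruct (Compare_dec.le_lt_dec i k) as [Hjk2|Hjk2].
        -- assert (BI a k <= BI a (i + 1)) by (apply (BI_mono a H); lia).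
           specialize (Hhi ltac:(lia)). lra.
        -- assert (BI a i <= BI a (k + 1)) by (apply (BI_mono a H); lia). lra.
Qed.

Lemma candI_exists a b : HypI a -> 0 < b -> exists c, candI a b c.
Proof.
  intros H Hb. destruct (pieceI_exists a b H Hb) as [k [Hk [Hlo Hhi]]].
  eexists. apply (pieceI_cand a b k H Hb Hk Hlo Hhi).
Qed.

Lemma Tail_modify (f : nat -> R) p i0 (v : R) : (p <= i0)%nat -> ex_series (fun j => f (p + j)%nat) ->
  ex_series (fun j => (if Nat.eqb (p + j) i0 then v else f (p + j)%nat)) /\
  Tail (fun i => if Nat.eqb i i0 then v else f i) p = Tail f p - f i0 + v.
Proof.
  intros Hp He.
  set (d := fun j => if Nat.eqb (p + j) i0 then v - f i0 else 0).
  assert (Hd : forall j, j <> (i0 - p)%nat -> d j = 0).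
  { intros j Hj. unfold d. destruct (Nat.eqb (p + j) i0) eqn:E; auto. apply Nat.eqb_eq in E. lia. }
  assert (Sd : Series d = v - f i0).
  { rewrite (Series_single_R d (i0 - p)) by auto. unfold d. replace (p + (i0 - p))%nat with i0 by lia.
    rewrite Nat.eqb_refl. reflexivity. }
  assert (Ed : ex_series d).
  { apply (ex_series_untail _ (S (i0 - p))). apply (ex_series_ext (fun _ => 0)). intros k. symmetry; apply Hd; lia.
    apply ex_series_zero. }
  assert (Eq : forall j, @eq R (if Nat.eqb (p + j) i0 then v else f (p + j)%nat) (f (p + j)%nat + d j)).
  { intros j. unfold d. destruct (Nat.eqb (p + j) i0) eqn:E. apply Nat.eqb_eq in E. rewrite <- E. ring. ring. }
  split.
  - apply (ex_series_ext (fun j => f (p + j)%nat + d j)). intros; rewrite Eq; auto.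
    apply ex_series_plus_R; auto.
  - unfold Tail. rewrite (Series_ext _ (fun j => f (p + j)%nat + d j)) by (intros; apply Eq).
    rewrite Series_plus by auto. rewrite Sd. ring.
Qed.

Lemma key_sumI a c z : HypI a -> 0 < c ->
  ex_series (fun j => a (2 + j)%nat * z (2 + j)%nat) -> ex_series (fun j => exp (- z (2 + j)%nat)) ->
  ex_series (fun j => Dt (a (2 + j)%nat) c (z (2 + j)%nat)) /\
  Tail (fun i => exp (- z i)) 2 - (ZsI a c - / c * (Tail (fun i => a i * z i) 2 - PhiI a c))
  = Tail (fun i => Dt (a i) c (z i)) 2.
Proof.
  intros H Hc E1 E2.
  assert (Eq : forall i, Dt (a i) c (z i) = (exp (- z i) - TZ a c i) + / c * (a i * z i - TP a c i)).
  { intros i. unfold Dt, TZ, TP. unfold Rdiv. ring. }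
  assert (X1 : ex_series (fun j => exp (- z (2 + j)%nat) - TZ a c (2 + j))) by (apply ex_series_minus_R; auto; apply exTZ; auto).
  assert (X2 : ex_series (fun j => a (2 + j)%nat * z (2 + j)%nat - TP a c (2 + j))) by (apply ex_series_minus_R; auto; apply exTP; auto).
  assert (X3 : ex_series (fun j => / c * (a (2 + j)%nat * z (2 + j)%nat - TP a c (2 + j)))) by (apply ex_series_scal_R; auto).
  split.
  - apply (ex_series_ext (fun j => (exp (- z (2 + j)%nat) - TZ a c (2 + j)) + / c * (a (2 + j)%nat * z (2 + j)%nat - TP a c (2 + j)))).
    intros; rewrite Eq; auto. apply ex_series_plus_R; auto.
  - rewrite (Tail_ext_loc (fun i => Dt (a i) c (z i)) (fun i => (exp (- z i) - TZ a c i) + / c * (a i * z i - TP a c i))) by (intros; apply Eq).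
    rewrite (Tail_plus (fun i => exp (- z i) - TZ a c i) (fun i => / c * (a i * z i - TP a c i))) by auto.
    rewrite Tail_scal. rewrite (Tail_minus (fun i => exp (- z i)) (TZ a c)) by (auto; apply exTZ; auto).
    rewrite (Tail_minus (fun i => a i * z i) (TP a c)) by (auto; apply exTP; auto).
    unfold ZsI, PhiI. ring.
Qed.

Lemma key_ineqI a c z : HypI a -> 0 < c -> (forall i, (2 <= i)%nat -> 0 <= z i) ->
  ex_series (fun j => a (2 + j)%nat * z (2 + j)%nat) -> ex_series (fun j => exp (- z (2 + j)%nat)) ->
  ZsI a c - / c * (Tail (fun i => a i * z i) 2 - PhiI a c) <= Tail (fun i => exp (- z i)) 2.
Proof.
  intros H Hc Hz E1 E2. destruct (key_sumI a c z H Hc E1 E2) as [Ex Eq].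
  assert (0 <= Tail (fun i => Dt (a i) c (z i)) 2).
  { apply Tail_nonneg; auto. intros i Hi. apply Dt_nonneg; auto. apply apos; auto; lia. }
  lra.
Qed.

Lemma key_strictI a c z j : HypI a -> 0 < c -> (forall i, (2 <= i)%nat -> 0 <= z i) ->
  ex_series (fun j => a (2 + j)%nat * z (2 + j)%nat) -> ex_series (fun j => exp (- z (2 + j)%nat)) ->
  (2 <= j)%nat -> z j <> ln (Rmax c (a j) / a j) ->
  ZsI a c - / c * (Tail (fun i => a i * z i) 2 - PhiI a c) < Tail (fun i => exp (- z i)) 2.
Proof.
  intros H Hc Hz E1 E2 Hj Hne. destruct (key_sumI a c z H Hc E1 E2) as [Ex Eq].
  assert (Dt (a j) c (z j) <= Tail (fun i => Dt (a i) c (z i)) 2).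
  { apply (Tail_ge_term (fun i => Dt (a i) c (z i))); auto. intros i Hi. apply Dt_nonneg; auto. apply apos; auto; lia. }
  assert (0 < Dt (a j) c (z j)) by (apply Dt_pos; auto; apply apos; auto; lia).
  lra.
Qed.

Lemma TP_mono a c c' i : HypI a -> (1 <= i)%nat -> 0 < c -> c <= c' -> TP a c i <= TP a c' i.
Proof.
  intros H Hi Hc Hcc. pose proof (apos a i H Hi). unfold TP. apply Rmult_le_compat_l. lra.
  apply ln_le. apply Rdiv_lt_0_compat; auto. apply Rmax_pos_l; auto.
  unfold Rdiv. apply Rmult_le_compat_r. left; apply Rinv_0_lt_compat; auto. apply Rmax_mono_l; auto.
Qed.

Lemma PhiI_slope a c c' i0 : HypI a -> 0 < c -> c <= c' -> (2 <= i0)%nat -> a i0 <= c ->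
  a i0 * ln (c' / c) <= PhiI a c' - PhiI a c.
Proof.
  intros H Hc Hcc Hi0 Ha.
  assert (Hai : 0 < a i0) by (apply apos; auto; lia).
  unfold PhiI. rewrite <- Tail_minus by (apply exTP; auto; lra).
  replace (a i0 * ln (c' / c)) with (TP a c' i0 - TP a c i0).
  - apply (Tail_ge_term (fun i => TP a c' i - TP a c i)); auto.
    intros k Hk. pose proof (TP_mono a c c' k H ltac:(lia) Hc Hcc). lra.
    apply ex_series_minus_R; apply exTP; auto; lra.
  - unfold TP. rewrite !Rmax_left by lra. rewrite !ln_div by lra. ring.
Qed.

Lemma PhiI_mono a c c' : HypI a -> 0 < c -> c <= c' -> PhiI a c <= PhiI a c'.
Proof.
  intros H Hc Hcc. unfold PhiI. apply Tail_le. intros; apply TP_mono; auto; lia.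
  apply exTP; auto. apply exTP; auto; lra.
Qed.

Lemma PhiI_strict a c c' : HypI a -> 0 < c -> c < c' -> PhiI a c < PhiI a c'.
Proof.
  intros H Hc Hcc. destruct (a_small a c 2 H Hc) as [i0 [Hi0 [_ Ha]]].
  pose proof (PhiI_slope a c c' i0 H Hc (Rlt_le _ _ Hcc) Hi0 (Rlt_le _ _ Ha)).
  assert (0 < a i0) by (apply apos; auto; lia).
  assert (0 < ln (c' / c)) by (rewrite <- ln_1; apply ln_increasing; [lra|apply Rcomplements.Rlt_div_r; lra]).
  nra.
Qed.

Lemma PhiI_pos a c : HypI a -> 0 < c -> 0 < PhiI a c.
Proof.
  intros H Hc. destruct (a_small a c 2 H Hc) as [i0 [Hi0 [_ Ha]]].
  assert (0 < a i0) by (apply apos; auto; lia).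
  apply Rlt_le_trans with (TP a c i0).
  - unfold TP. rewrite Rmax_left by lra. apply Rmult_lt_0_compat; auto. rewrite <- ln_1.
    apply ln_increasing. lra. apply Rcomplements.Rlt_div_r; lra.
  - unfold PhiI. apply Tail_ge_term; auto. intros; apply TP_nonneg; auto; lia. apply exTP; auto.
Qed.

Lemma candI_pos a b c : candI a b c -> 0 < c.
Proof. intros [H _]; auto. Qed.

Lemma candI_unique a b c c' : HypI a -> candI a b c -> candI a b c' -> c = c'.
Proof.
  intros H [H1 [H2 H3]] [H1' [H2' H3']].
  destruct (Rtotal_order c c') as [Hl|[He|Hg]]; auto.
  - pose proof (PhiI_strict a c c' H H1 Hl). lra.
  - pose proof (PhiI_strict a c' c H H1' Hg). lra.
Qed.

Lemma candI_mono a b b' c c' : HypI a -> b < b' -> candI a b c -> candI a b' c' -> c < c'.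
Proof.
  intros H Hb [H1 [H2 H3]] [H1' [H2' H3']].
  destruct (Rlt_or_le c c') as [Hl|Hg]; auto.
  pose proof (PhiI_mono a c' c H H1' Hg). lra.
Qed.

Lemma ZsI_nonneg a c : HypI a -> 0 < c -> 0 <= ZsI a c.
Proof. intros H Hc. unfold ZsI. apply Tail_nonneg. intros; apply TZ_bounds; auto; lia. apply exTZ; auto. Qed.

Lemma z0I_ge1 a b c : HypI a -> candI a b c -> 1 <= z0I a b.
Proof. intros H [Hc [_ ->]]. pose proof (ZsI_nonneg a c H Hc). lra. Qed.

Lemma ycand_facts a c i : HypI a -> 0 < c -> (1 <= i)%nat ->
  0 <= ln (Rmax c (a i) / a i) /\ exp (- ln (Rmax c (a i) / a i)) = TZ a c i /\
  a i * ln (Rmax c (a i) / a i) = TP a c i.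
Proof.
  intros H Hc Hi. pose proof (apos a i H Hi). split; [|split].
  - rewrite <- ln_1. apply ln_le. lra. apply Rmax_ratio_ge1; auto.
  - apply exp_neg_ln_ratio; auto. apply Rmax_pos_l; auto.
  - reflexivity.
Qed.

Lemma z0I_lower a b b' c c' : HypI a -> candI a b c -> candI a b' c' ->
  z0I a b - (b' - b) / c <= z0I a b'.
Proof.
  intros H Hc Hc'. destruct Hc as [Hc0 [Pc Zc]]. destruct Hc' as [Hc0' [Pc' Zc']].
  pose proof (key_ineqI a c (fun i => ln (Rmax c' (a i) / a i)) H Hc0) as K.
  rewrite (Tail_ext_loc (fun i => exp (- ln (Rmax c' (a i) / a i))) (TZ a c')) in K
    by (intros; apply ycand_facts; auto; lia).
  rewrite (Tail_ext_loc (fun i => a i * ln (Rmax c' (a i) / a i)) (TP a c')) in K by (intros; reflexivity).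
  fold (ZsI a c') in K. fold (PhiI a c') in K.
  assert (ZsI a c - / c * (PhiI a c' - PhiI a c) <= ZsI a c').
  { apply K. intros; apply ycand_facts; auto; lia.
    apply (ex_series_ext (fun j => TP a c' (2 + j))). intros; reflexivity. apply exTP; auto.
    apply (ex_series_ext (fun j => TZ a c' (2 + j))). intros; symmetry; apply ycand_facts; auto; lia. apply exTZ; auto. }
  rewrite Zc, Zc'. rewrite Pc, Pc' in H0. unfold Rdiv. lra.
Qed.

Lemma z0I_upper a b b' c c' i0 : HypI a -> candI a b c -> candI a b' c' ->
  (2 <= i0)%nat -> a i0 < c -> Rabs (b' - b) < a i0 * ln (c / a i0) ->
  z0I a b' <= z0I a b + a i0 / c * (exp (- ((b' - b) / a i0)) - 1).
Proof.
  intros H Hc Hc' Hi0 Hac Hbb. pose proof Hc as [Hc0 [Pc Zc]]. pose proof Hc' as [Hc0' [Pc' Zc']].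
  assert (Hai : 0 < a i0) by (apply apos; auto; lia).
  set (y0 := ln (c / a i0)) in *.
  set (z := fun i => if Nat.eqb i i0 then y0 + (b' - b) / a i0 else ln (Rmax c (a i) / a i)).
  assert (Hz : forall i, (2 <= i)%nat -> 0 <= z i).
  { intros i Hi. unfold z. destruct (Nat.eqb i i0) eqn:E.
    - assert (Rabs ((b' - b) / a i0) <= y0).
      { unfold Rdiv. rewrite Rabs_mult, Rabs_Rinv by lra. rewrite (Rabs_right (a i0)) by lra.
        apply Rmult_le_reg_r with (a i0); auto. rewrite Rmult_assoc, Rinv_l by lra. lra. }
      assert (- ((b' - b) / a i0) <= y0) by (eapply Rle_trans; [apply Rle_abs|]; rewrite Rabs_Ropp; auto).
      lra.
    - apply ycand_facts; auto; lia. }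
  destruct (Tail_modify (fun i => a i * ln (Rmax c (a i) / a i)) 2 i0 (a i0 * (y0 + (b' - b) / a i0)) Hi0)
    as [EA TA].
  { apply (ex_series_ext (fun j => TP a c (2 + j))). intros; reflexivity. apply exTP; auto. }
  destruct (Tail_modify (fun i => exp (- ln (Rmax c (a i) / a i))) 2 i0 (exp (- (y0 + (b' - b) / a i0))) Hi0)
    as [EE TE].
  { apply (ex_series_ext (fun j => TZ a c (2 + j))). intros; symmetry; apply ycand_facts; auto; lia. apply exTZ; auto. }
  assert (Ez1 : forall i, a i * z i = (if Nat.eqb i i0 then a i0 * (y0 + (b' - b) / a i0) else a i * ln (Rmax c (a i) / a i))).
  { intros i. unfold z. destruct (Nat.eqb i i0) eqn:E; auto. apply Nat.eqb_eq in E. subst; auto. }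
  assert (Ez2 : forall i, exp (- z i) = (if Nat.eqb i i0 then exp (- (y0 + (b' - b) / a i0)) else exp (- ln (Rmax c (a i) / a i)))).
  { intros i. unfold z. destruct (Nat.eqb i i0) eqn:E; auto. }
  pose proof (key_ineqI a c' z H Hc0' Hz) as K.
  rewrite (Tail_ext_loc (fun i => a i * z i) _ 2 (fun i _ => Ez1 i)) in K.
  rewrite (Tail_ext_loc (fun i => exp (- z i)) _ 2 (fun i _ => Ez2 i)) in K.
  rewrite TA, TE in K.
  rewrite (Tail_ext_loc (fun i => a i * ln (Rmax c (a i) / a i)) (TP a c)) in K by (intros; reflexivity).
  rewrite (Tail_ext_loc (fun i => exp (- ln (Rmax c (a i) / a i))) (TZ a c)) in K by (intros; apply ycand_facts; auto; lia).
  fold (PhiI a c) in K. fold (ZsI a c) in K.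
  rewrite Rmax_left in K by lra. fold y0 in K.
  assert (Ey : exp (- y0) = a i0 / c) by (unfold y0; apply exp_neg_ln_ratio; auto).
  rewrite Ey in K.
  replace (exp (- (y0 + (b' - b) / a i0))) with (a i0 / c * exp (- ((b' - b) / a i0))) in K
    by (rewrite <- Ey, <- exp_plus; f_equal; ring).
  assert (ZsI a c' - / c' * (PhiI a c - a i0 * y0 + a i0 * (y0 + (b' - b) / a i0) - PhiI a c')
          <= ZsI a c - a i0 / c + a i0 / c * exp (- ((b' - b) / a i0))).
  { apply K.
    - apply (ex_series_ext (fun j => if Nat.eqb (2 + j) i0 then a i0 * (y0 + (b' - b) / a i0) else a (2 + j)%nat * ln (Rmax c (a (2 + j)%nat) / a (2 + j)%nat))).
      intros j; symmetry; apply Ez1. auto.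
    - apply (ex_series_ext (fun j => if Nat.eqb (2 + j) i0 then exp (- (y0 + (b' - b) / a i0)) else exp (- ln (Rmax c (a (2 + j)%nat) / a (2 + j)%nat)))).
      intros j; symmetry; apply Ez2. auto. }
  rewrite Pc, Pc' in H0. replace (b - a i0 * y0 + a i0 * (y0 + (b' - b) / a i0) - b') with 0 in H0 by (field; lra).
  rewrite Zc, Zc'. lra.
Qed.

Lemma z0I_deriv a b c : HypI a -> 0 < b -> candI a b c -> derivable_pt_lim (z0I a) b (- / c).
Proof.
  intros H Hb Hc. pose proof Hc as [Hc0 [Pc Zc]].
  destruct (a_small a c 2 H Hc0) as [i0 [Hi0 [_ Hac]]].
  assert (Hai : 0 < a i0) by (apply apos; auto; lia).
  assert (Hy0 : 0 < a i0 * ln (c / a i0)).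
  { apply Rmult_lt_0_compat; auto. rewrite <- ln_1. apply ln_increasing. lra. apply Rcomplements.Rlt_div_r; lra. }
  apply (squeeze_deriv (z0I a) (fun t => z0I a b + a i0 / c * (exp (- ((t - b) / a i0)) - 1)) b (- / c)
           (Rmin b (a i0 * ln (c / a i0)))).
  - apply Rmin_pos; auto.
  - replace (b - b) with 0 by ring. unfold Rdiv at 2. rewrite Rmult_0_l, Ropp_0, exp_0. ring.
  - apply is_derive_Reals. auto_derive; auto. replace (- ((b + - b) * / a i0)) with 0 by ring. rewrite exp_0. field. split; lra.

  - intros y Hy. assert (Hy1 : Rabs (y - b) < b) by (eapply Rlt_le_trans; [apply Hy|apply Rmin_l]).
    assert (Hy2 : Rabs (y - b) < a i0 * ln (c / a i0)) by (eapply Rlt_le_trans; [apply Hy|apply Rmin_r]).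
    assert (Hy0' : 0 < y) by (unfold Rabs in Hy1; destruct (Rcase_abs _); lra).
    destruct (candI_exists a y H Hy0') as [c' Hc'].
    split.
    + pose proof (z0I_lower a b y c c' H Hc Hc'). unfold Rdiv in H0. lra.
    + apply (z0I_upper a b y c c' i0); auto.
Qed.

Lemma fI_deriv a th b c : HypI a -> 0 < b -> candI a b c ->
  derivable_pt_lim (fI a th) b (th - / (c * z0I a b)).
Proof.
  intros H Hb Hc. pose proof (z0I_ge1 a b c H Hc). pose proof (candI_pos a b c Hc).
  replace (th - / (c * z0I a b)) with (th + (- / c) / z0I a b) by (field; lra).
  apply (f_deriv_gen (z0I a) th b (- / c)). lra. apply z0I_deriv; auto.
Qed.

Lemma fI_Derive a th b c : HypI a -> 0 < b -> candI a b c ->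
  Derive (fI a th) b = th - / (c * z0I a b).
Proof. intros. apply is_derive_unique. apply is_derive_Reals. apply fI_deriv; auto. Qed.

Lemma z0I_Derive a b c : HypI a -> 0 < b -> candI a b c -> Derive (z0I a) b = - / c.
Proof. intros. apply is_derive_unique. apply is_derive_Reals. apply z0I_deriv; auto. Qed.

Definition PsiI a c := c * (1 + ZsI a c).

Lemma PsiI_strict a c c' : HypI a -> 0 < c -> c < c' -> PsiI a c < PsiI a c'.
Proof.
  intros H Hc Hcc. unfold PsiI, ZsI. rewrite !Rmult_plus_distr_l, !Rmult_1_r.
  rewrite <- !Tail_scal.
  assert (Tail (fun i => c * TZ a c i) 2 <= Tail (fun i => c' * TZ a c' i) 2).
  { apply Tail_le.
    - intros k Hk. assert (0 < a k) by (apply apos; auto; lia). unfold TZ.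
      unfold Rmax. destruct (Rle_dec c (a k)); destruct (Rle_dec c' (a k)).
      + replace (c * (a k / a k)) with c by (field; lra). replace (c' * (a k / a k)) with c' by (field; lra). lra.
      + replace (c * (a k / a k)) with c by (field; lra). replace (c' * (a k / c')) with (a k) by (field; lra). lra.
      + lra.
      + replace (c * (a k / c)) with (a k) by (field; lra). replace (c' * (a k / c')) with (a k) by (field; lra). lra.
    - apply (ex_tail_scal c (TZ a c)). apply exTZ; auto.
    - apply (ex_tail_scal c' (TZ a c')). apply exTZ; auto; lra. }
  lra.
Qed.

Lemma PsiI_z0 a b c : candI a b c -> c * z0I a b = PsiI a c.
Proof. intros [_ [_ ->]]. reflexivity. Qed.

Lemma PsiI_pos a c : HypI a -> 0 < c -> 0 < PsiI a c.
Proof. intros H Hc. unfold PsiI. pose proof (ZsI_nonneg a c H Hc). nra. Qed.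

Definition LinvI a b := ln (- Derive (z0I a) b).

Lemma LinvI_eq a b c : HypI a -> 0 < b -> candI a b c -> LinvI a b = - ln c.
Proof.
  intros H Hb Hc. unfold LinvI. rewrite (z0I_Derive a b c) by auto. rewrite Ropp_involutive.
  rewrite ln_Rinv. reflexivity. apply (candI_pos a b c Hc).
Qed.

Lemma LinvI_lip a b : HypI a -> 0 < b -> exists K, 0 < K /\
  forall y, Rabs (y - b) < b / 2 -> Rabs (LinvI a y - LinvI a b) <= K * Rabs (y - b).
Proof.
  intros H Hb. destruct (candI_exists a (b / 2) H ltac:(lra)) as [c2 Hc2].
  pose proof (candI_pos a _ c2 Hc2) as Hc20.
  destruct (a_small a c2 2 H Hc20) as [i0 [Hi0 [_ Ha]]].
  assert (Hai : 0 < a i0) by (apply apos; auto; lia).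
  exists (/ a i0). split. apply Rinv_0_lt_compat; auto.
  intros y Hy. assert (Hyb : b / 2 < y) by (unfold Rabs in Hy; destruct (Rcase_abs _); lra).
  destruct (candI_exists a b H Hb) as [c Hc]. destruct (candI_exists a y H ltac:(lra)) as [c' Hc'].
  rewrite (LinvI_eq a b c), (LinvI_eq a y c') by (auto; lra).
  pose proof (candI_pos a b c Hc). pose proof (candI_pos a y c' Hc').
  assert (Hcb : c2 < c) by (apply (candI_mono a (b/2) b c2 c H); auto; lra).
  assert (Hcy : c2 < c') by (apply (candI_mono a (b/2) y c2 c' H); auto).
  destruct (Rtotal_order b y) as [Hl|[He|Hg]].
  - pose proof (candI_mono a b y c c' H Hl Hc Hc').
    pose proof (PhiI_slope a c c' i0 H H0 (Rlt_le _ _ H2) Hi0 ltac:(lra)).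
    destruct Hc as [_ [P1 _]]. destruct Hc' as [_ [P2 _]]. rewrite P1, P2 in H3.
    rewrite ln_div in H3 by lra.
    assert (ln c < ln c') by (apply ln_increasing; lra).
    rewrite Rabs_left by lra. rewrite (Rabs_right (y - b)) by lra.
    apply Rmult_le_reg_l with (a i0); auto. rewrite <- Rmult_assoc, Rinv_r by lra.
    replace (a i0 * - (- ln c' - - ln c)) with (a i0 * (ln c' - ln c)) by ring. lra.
  - subst y. rewrite (candI_unique a b c c' H Hc Hc'). replace (- ln c' - - ln c') with 0 by ring.
    replace (b - b) with 0 by ring. rewrite Rabs_R0. lra.
  - pose proof (candI_mono a y b c' c H Hg Hc' Hc).
    pose proof (PhiI_slope a c' c i0 H H1 (Rlt_le _ _ H2) Hi0 ltac:(lra)).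
    destruct Hc as [_ [P1 _]]. destruct Hc' as [_ [P2 _]]. rewrite P1, P2 in H3.
    rewrite ln_div in H3 by lra.
    assert (ln c' < ln c) by (apply ln_increasing; lra).
    rewrite Rabs_right by lra. rewrite (Rabs_left (y - b)) by lra.
    apply Rmult_le_reg_l with (a i0); auto. rewrite <- Rmult_assoc, Rinv_r by lra.
    replace (a i0 * (- ln c' - - ln c)) with (a i0 * (ln c - ln c')) by ring. lra.
Qed.

Lemma fI_Derive_cont a th b : HypI a -> 0 < b -> continuity_pt (Derive (fI a th)) b.
Proof.
  intros H Hb. destruct (candI_exists a b H Hb) as [c Hc].
  set (F := fun t => th - exp (LinvI a t) / z0I a t).
  apply (continuity_loc F _ b b Hb).
  - intros y Hy. assert (Hy0 : 0 < y) by (unfold Rabs in Hy; destruct (Rcase_abs _); lra).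
    destruct (candI_exists a y H Hy0) as [c' Hc'].
    unfold F. rewrite (fI_Derive a th y c') by auto. rewrite (LinvI_eq a y c') by auto.
    pose proof (candI_pos a y c' Hc'). pose proof (z0I_ge1 a y c' H Hc').
    rewrite exp_Ropp, exp_ln by auto. field. lra.
  - unfold F. apply (continuity_pt_minus (fun _ => th) (fun t => exp (LinvI a t) / z0I a t)).
    apply continuity_pt_const. intros ? ?; reflexivity.
    apply (continuity_pt_div (comp exp (LinvI a)) (z0I a)).
    + apply continuity_pt_comp. destruct (LinvI_lip a b H Hb) as [K [HK HL]].
      apply (lip_cont _ b (b / 2) K); auto. lra. lra.
      apply derivable_continuous_pt, derivable_pt_exp.
    + apply derivable_continuous_pt. exists (- / c). apply z0I_deriv; auto.
    + pose proof (z0I_ge1 a b c H Hc). lra.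
Qed.

Lemma DerivI_val a th b : HypI a -> 0 < b -> exists c, candI a b c /\
  Derive (fI a th) b = th - / PsiI a c /\ derivable_pt_lim (fI a th) b (Derive (fI a th) b).
Proof.
  intros H Hb. destruct (candI_exists a b H Hb) as [c Hc]. exists c. split; auto.
  rewrite (fI_Derive a th b c) by auto. rewrite (PsiI_z0 a b c Hc). split; auto.
  rewrite <- (PsiI_z0 a b c Hc). apply fI_deriv; auto.
Qed.

Lemma fI_cont a th b : HypI a -> 0 < b -> continuity_pt (fI a th) b.
Proof.
  intros H Hb. destruct (candI_exists a b H Hb) as [c Hc].
  apply derivable_continuous_pt. exists (th - / (c * z0I a b)). apply fI_deriv; auto.
Qed.

Lemma rcont_of_cont (f : R -> R) b : continuity_pt f b ->
  forall eps, 0 < eps -> exists d, 0 < d /\ forall t, b < t < b + d -> Rabs (f t - f b) < eps.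
Proof.
  intros Hc eps Heps. destruct (Hc eps Heps) as [d [Hd Hd2]].
  exists d. split; auto. intros t Ht. apply (Hd2 t). split. split. constructor. lra.
  simpl. unfold R_dist. rewrite Rabs_right; lra.
Qed.

Lemma mvt_fI a th x y : HypI a -> 0 < x < y ->
  exists xi, x < xi < y /\ fI a th y - fI a th x = Derive (fI a th) xi * (y - x).
Proof.
  intros H Hxy. apply mvt_right. lra.
  - intros c Hc. destruct (DerivI_val a th c H ltac:(lra)) as [c' [_ [_ D]]]. auto.
  - intros c Hc. apply fI_cont; auto; lra.
  - apply rcont_of_cont. apply fI_cont; auto; lra.
Qed.

Lemma fI_convex a th : HypI a -> convex_on (fun b => 0 < b) (fI a th).
Proof.
  intros H.
  assert (Hmain : forall x y t, 0 < x -> x < y -> 0 <= t <= 1 ->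
     fI a th (t * x + (1 - t) * y) <= t * fI a th x + (1 - t) * fI a th y).
  { intros x y t Hx Hxy Ht. apply (convex_from_deriv (fI a th) (Derive (fI a th))); auto.
    - intros c Hc. destruct (DerivI_val a th c H ltac:(lra)) as [c' [_ [_ D]]]. auto.
    - intros c Hc. apply fI_cont; auto; lra.
    - apply rcont_of_cont. apply fI_cont; auto.
    - intros u v Hu Huv Hv.
      destruct (DerivI_val a th u H ltac:(lra)) as [cu [Hcu [Du _]]].
      destruct (DerivI_val a th v H ltac:(lra)) as [cv [Hcv [Dv _]]].
      rewrite Du, Dv. destruct Huv as [Huv|Huv].
      + pose proof (candI_mono a u v cu cv H Huv Hcu Hcv).
        pose proof (candI_pos a u cu Hcu).
        pose proof (PsiI_strict a cu cv H H1 H0).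
        pose proof (PsiI_pos a cu H H1).
        apply Rplus_le_compat_l, Ropp_le_contravar, Rinv_le_contravar; lra.
      + subst v. rewrite (candI_unique a u cu cv H Hcu Hcv). lra. }
  intros x y t Hx Hy Ht. destruct (Rtotal_order x y) as [Hl|[He|Hg]].
  - apply Hmain; auto.
  - subst y. replace (t * x + (1 - t) * x) with x by ring. lra.
  - replace (t * x + (1 - t) * y) with ((1 - t) * y + (1 - (1 - t)) * x) by ring.
    replace (t * fI a th x + (1 - t) * fI a th y) with ((1 - t) * fI a th y + (1 - (1 - t)) * fI a th x) by ring.
    apply Hmain; auto; lra.
Qed.

Lemma fI_to_infty a th : HypI a -> 0 < th ->
  filterlim (fI a th) (Rbar_locally p_infty) (Rbar_locally p_infty).
Proof.
  intros H Hth P [M HM]. exists (Rmax 0 (M / th)). intros b Hb. apply HM.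
  assert (Hb0 : 0 < b) by (eapply Rle_lt_trans; [apply Rmax_l|apply Hb]).
  assert (Hb1 : M / th < b) by (eapply Rle_lt_trans; [apply Rmax_r|apply Hb]).
  destruct (candI_exists a b H Hb0) as [c Hc]. pose proof (z0I_ge1 a b c H Hc).
  unfold fI. assert (0 <= ln (z0I a b)) by (rewrite <- ln_1; apply ln_le; lra).
  assert (M < th * b).
  { apply Rmult_lt_compat_l with (r := th) in Hb1; auto. replace (th * (M / th)) with M in Hb1 by (field; lra). lra. }
  lra.
Qed.

Lemma small_b_small_c a c0 : HypI a -> 0 < c0 ->
  forall b c, 0 < b < PhiI a c0 -> candI a b c -> c < c0.
Proof.
  intros H Hc0 b c Hb Hc. destruct (Rlt_or_le c c0) as [Hl|Hl]; auto.
  destruct Hc as [Hc1 [Pc _]]. pose proof (PhiI_mono a c0 c H Hc0 Hl). lra.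
Qed.

Lemma fI_at0 a th : HypI a -> 0 < th ->
  filterlim (fI a th) (at_right 0) (Rbar_locally p_infty).
Proof.
  intros H Hth P [M HM].
  destruct (INR_unbounded (exp M)) as [N0 HN0]. set (N := (N0 + 2)%nat).
  assert (HN : exp M < INR N) by (unfold N; rewrite plus_INR; simpl; lra).
  assert (HaN : 0 < a N) by (apply apos; auto; unfold N; lia).
  pose proof (PhiI_pos a (a N) H HaN) as Hd.
  exists (mkposreal _ Hd). intros b Hb Hb0. simpl in Hb.
  unfold ball in Hb; simpl in Hb; unfold AbsRing_ball, abs, minus, plus, opp in Hb; simpl in Hb.
  rewrite Ropp_0, Rplus_0_r, Rabs_right in Hb by lra.
  apply HM. destruct (candI_exists a b H Hb0) as [c Hc].
  pose proof (small_b_small_c a (a N) H HaN b c (conj Hb0 Hb) Hc) as HcN.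
  pose proof (candI_pos a b c Hc) as Hc0.
  assert (HZ : INR N - 1 <= ZsI a c).
  { unfold ZsI. rewrite (Tail_split _ 2 N) by (try (unfold N; lia); apply exTZ; auto).
    rewrite (sum_ext_loc_R (TZ a c) (fun _ => 1)).
    - rewrite sum_n_m_const. replace (S N - 2)%nat with (N - 1)%nat by (unfold N; lia).
      rewrite minus_INR by (unfold N; lia). simpl.
      assert (0 <= Tail (TZ a c) (S N)) by (apply Tail_nonneg; [intros; apply TZ_bounds; auto; lia|apply exTZ; auto; lia]).
      lra.
    - intros i Hi. unfold TZ. rewrite Rmax_right. field. apply Rgt_not_eq, apos; auto; lia.
      left. apply Rlt_le_trans with (a N); auto. apply (amonI a H); lia. }
  destruct Hc as [_ [_ Zc]]. unfold fI. rewrite Zc.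
  assert (M < ln (1 + ZsI a c)).
  { rewrite <- (ln_exp M). apply ln_increasing. apply exp_pos. lra. }
  nra.
Qed.

Lemma DerivI_at0 a th : HypI a -> 0 < th ->
  filterlim (Derive (fI a th)) (at_right 0) (Rbar_locally m_infty).
Proof.
  intros H Hth P [M HM].
  set (K := Rmax 1 (th - M)). assert (HK : 0 < K) by (unfold K; apply Rlt_le_trans with 1; [lra|apply Rmax_l]).
  set (eps := / K). assert (Heps : 0 < eps) by (apply Rinv_0_lt_compat; auto).
  destruct (Tail_lim a) with (eps := eps / 2) as [N0 HN0]. apply (ex_series_untail _ 1). exact (exA a 1 H ltac:(lia)). lra.
  set (N := (N0 + 2)%nat).
  set (c0 := eps / (2 * INR N + 2)).
  assert (HNR : 0 <= INR N) by apply pos_INR.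
  assert (Hc0 : 0 < c0) by (unfold c0; apply Rdiv_lt_0_compat; lra).
  pose proof (PhiI_pos a c0 H Hc0) as Hd.
  exists (mkposreal _ Hd). intros b Hb Hb0. simpl in Hb.
  unfold ball in Hb; simpl in Hb; unfold AbsRing_ball, abs, minus, plus, opp in Hb; simpl in Hb.
  rewrite Ropp_0, Rplus_0_r, Rabs_right in Hb by lra.
  apply HM. destruct (candI_exists a b H Hb0) as [c Hc].
  pose proof (small_b_small_c a c0 H Hc0 b c (conj Hb0 Hb) Hc) as Hcc.
  pose proof (candI_pos a b c Hc) as Hcp.
  rewrite (fI_Derive a th b c) by auto. rewrite (PsiI_z0 a b c Hc).
  assert (HP : PsiI a c < eps).
  { unfold PsiI, ZsI. rewrite Rmult_plus_distr_l, Rmult_1_r. rewrite <- Tail_scal.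
    rewrite (Tail_split _ 2 N) by (try (unfold N; lia); apply (ex_tail_scal c (TZ a c)); apply exTZ; auto).
    assert (S1 : sum_n_m (fun i => c * TZ a c i) 2 N <= INR N * c).
    { apply Rle_trans with (sum_n_m (fun _ => c) 2 N).
      - apply sum_le_loc. intros k Hk. pose proof (TZ_bounds a c k H Hcp ltac:(lia)).
        unfold TZ in *. assert (0 < a k) by (apply apos; auto; lia).
        assert (a k / Rmax c (a k) <= 1).
        { apply Rcomplements.Rle_div_l. apply Rmax_pos_l; auto. rewrite Rmult_1_l. apply Rmax_r. }
        nra.
      - rewrite sum_n_m_const. replace (S N - 2)%nat with (N - 1)%nat by (unfold N; lia).
        rewrite minus_INR by (unfold N; lia). simpl. nra. }
    assert (S2 : Tail (fun i => c * TZ a c i) (S N) <= Tail a (S N)).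
    { apply Tail_le. intros i Hi. pose proof (TZ_bounds a c i H Hcp ltac:(lia)).
      replace (a i) with (c * (/ c * a i)) by (field; lra). apply Rmult_le_compat_l; lra.
      apply (ex_tail_scal c (TZ a c)). apply exTZ; auto; lia. apply exA; auto; lia. }
    specialize (HN0 (S N) ltac:(unfold N; lia)).
    assert (Tail a (S N) < eps / 2) by (apply Rabs_def2 in HN0; lra).
    assert (c * (INR N + 1) < eps / 2).
    { apply Rlt_le_trans with (c0 * (INR N + 1)). apply Rmult_lt_compat_r; lra.
      unfold c0. right. field. lra. }
    nra. }
  pose proof (PsiI_pos a c H Hcp).
  assert (K < / PsiI a c).
  { unfold eps in HP. apply Rinv_lt_contravar in HP. rewrite Rinv_inv in HP. auto. nra. }
  assert (th - M <= K) by (unfold K; apply Rmax_r). lra.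
Qed.

Lemma mI_facts a th m : HypI a -> 0 < th -> is_mI a th m ->
  (1 <= m)%nat /\ 0 < 1 - th * dI a m /\
  a (m + 1)%nat < (1 - th * dI a m) / (th * INR m) /\
  ((2 <= m)%nat -> (1 - th * dI a m) / (th * INR m) <= a m).
Proof.
  intros H Hth Hm.
  assert (Hd0 : 0 < dI a 0) by (apply dI_pos; auto).
  destruct Hm as [[H1 ->]|[H1 [Hm1 [Hm2 Hm3]]]].
  - apply lt_inv_l in H1; auto.
    pose proof (dI_peel a 1 H ltac:(lia)) as E. simpl in E.
    assert (0 < a 1%nat) by (apply apos; auto). assert (a 2%nat <= a 1%nat) by (apply (amonI a H); lia).
    assert (0 < dI a 1) by (apply dI_pos; auto).
    split. lia. split. nra. split.
    + simpl INR. replace (th * 1) with th by ring. apply Rcomplements.Rlt_div_r. lra.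
      simpl. nra.
    + intros; lia.
  - assert (HmR : 1 <= INR m) by (replace 1 with (INR 1) by reflexivity; apply le_INR; lia).
    pose proof (dI_peel a (m + 1) H ltac:(lia)) as E. replace (m + 1 - 1)%nat with m in E by lia.
    assert (HT : th * (dI a (m + 1) + INR (m + 1) * a (m + 1)%nat) < 1).
    { destruct (Rlt_or_le (th * (dI a (m + 1) + INR (m + 1) * a (m + 1)%nat)) 1) as [Hl|Hl]; [exact Hl|].
      exfalso. apply (proj2 (inv_ge th _ Hth)) in Hl. specialize (Hm3 (m + 1)%nat ltac:(lia) Hl). lia. }
    rewrite plus_INR in HT. simpl INR in HT.
    assert (0 < a (m + 1)%nat) by (apply apos; auto; lia).
    assert (0 <= dI a (m + 1)) by (left; apply dI_pos; auto).
    assert (P1 : 0 <= th * INR m * a (m + 1)%nat) by (apply Rmult_le_pos; [apply Rmult_le_pos|]; lra).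
    assert (HT2 : th * (INR m * a (m + 1)%nat + dI a m) < 1) by (rewrite E; nra).
    split. auto. split. nra. split.
    + apply Rcomplements.Rlt_div_r. nra. nra.
    + intros _. apply Rcomplements.Rle_div_l. nra. apply inv_ge in Hm2; auto. nra.
Qed.

Lemma DerivI_sign_pos a th b c : HypI a -> 0 < th -> 0 < b -> candI a b c ->
  1 / th < PsiI a c -> 0 < Derive (fI a th) b.
Proof.
  intros H Hth Hb Hc HP. rewrite (fI_Derive a th b c) by auto. rewrite (PsiI_z0 a b c Hc).
  pose proof (PsiI_pos a c H (candI_pos a b c Hc)).
  assert (/ PsiI a c < th).
  { apply Rmult_lt_reg_r with (PsiI a c); auto. rewrite Rinv_l by lra.
    apply Rmult_lt_compat_l with (r := th) in HP; auto. replace (th * (1 / th)) with 1 in HP by (field; lra). lra. }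
  lra.
Qed.

Lemma DerivI_sign_neg a th b c : HypI a -> 0 < th -> 0 < b -> candI a b c ->
  PsiI a c < 1 / th -> Derive (fI a th) b < 0.
Proof.
  intros H Hth Hb Hc HP. rewrite (fI_Derive a th b c) by auto. rewrite (PsiI_z0 a b c Hc).
  pose proof (PsiI_pos a c H (candI_pos a b c Hc)).
  assert (th < / PsiI a c).
  { apply Rmult_lt_reg_r with (PsiI a c); auto. rewrite Rinv_l by lra.
    apply Rmult_lt_compat_l with (r := th) in HP; auto. replace (th * (1 / th)) with 1 in HP by (field; lra). lra. }
  lra.
Qed.

Lemma candI_of_Phi a b c : HypI a -> 0 < b -> 0 < c -> PhiI a c = b -> candI a b c.
Proof.
  intros H Hb Hc P. destruct (candI_exists a b H Hb) as [c' Hc'].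
  assert (c = c').
  { destruct Hc' as [Hc1' [P' _]]. destruct (Rtotal_order c c') as [Hl|[He|Hg]]; auto.
    - pose proof (PhiI_strict a c c' H Hc Hl). lra.
    - pose proof (PhiI_strict a c' c H Hc1' Hg). lra. }
  subst c'. auto.
Qed.

Lemma Series_shift1_Tail (g : nat -> R) : Series (fun j => g (j + 1)%nat) = Tail g 1.
Proof. unfold Tail. apply Series_ext. intros; f_equal; lia. Qed.

Lemma ex_shift1_Tail (g : nat -> R) : ex_series (fun j => g (j + 1)%nat) -> ex_series (fun j => g (1 + j)%nat).
Proof. apply ex_series_ext. intros; f_equal; lia. Qed.

Lemma ex_Tail_shift1 (g : nat -> R) : ex_series (fun j => g (1 + j)%nat) -> ex_series (fun j => g (j + 1)%nat).
Proof. apply ex_series_ext. intros; f_equal; lia. Qed.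

Lemma feasI_nonneg a x : feasibleI a x -> forall i, (1 <= i)%nat -> 0 <= x i.
Proof.
  intros [H1 [H2 H3]] i Hi. induction i as [|i IH]. lia.
  destruct (Nat.eq_dec i 0) as [->|Hne]. rewrite H1; lra.
  apply Rle_trans with (x i). apply IH; lia. replace (S i) with (i + 1)%nat by lia. apply H2; lia.
Qed.

Definition xcand (a : nat -> R) (c b : R) (i : nat) : R := ycand a c i / b.

Lemma xcand_terms a c b i : HypI a -> 0 < c -> 0 < b -> (2 <= i)%nat ->
  exp (- b * xcand a c b i) = TZ a c i /\ a i * xcand a c b i = / b * TP a c i.
Proof.
  intros H Hc Hb Hi. unfold xcand, ycand. assert (i <> 1%nat) by lia. apply Nat.eqb_neq in H0. rewrite H0.
  split.
  - replace (- b * (ln (Rmax c (a i) / a i) / b)) with (- ln (Rmax c (a i) / a i)) by (field; lra).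
    apply ycand_facts; auto; lia.
  - unfold TP. field. lra.
Qed.

Lemma xcand_1 a c b : xcand a c b 1 = 0.
Proof. unfold xcand, ycand. simpl. unfold Rdiv; ring. Qed.

Lemma candI_feasible a b c : HypI a -> 0 < b -> candI a b c -> feasibleI a (xcand a c b).
Proof.
  intros H Hb [Hc [Pc Zc]]. split; [|split].
  - apply xcand_1.
  - intros i Hi. destruct (Nat.eq_dec i 1) as [->|Hi1].
    + rewrite xcand_1. unfold xcand, ycand. simpl. apply Rdiv_le_0_compat; auto.
      apply ycand_facts; auto.
    + unfold xcand, ycand. assert (E1 : Nat.eqb i 1 = false) by (apply Nat.eqb_neq; auto).
      assert (E2 : Nat.eqb (i + 1) 1 = false) by (apply Nat.eqb_neq; lia). rewrite E1, E2.
      apply Rmult_le_compat_r. left; apply Rinv_0_lt_compat; auto.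
      assert (0 < a i) by (apply apos; auto). assert (0 < a (i + 1)%nat) by (apply apos; auto; lia).
      apply ln_le. apply Rdiv_lt_0_compat; auto. apply Rmax_pos_l; auto.
      assert (Ha : a (i + 1)%nat <= a i) by (apply (amonI a H); lia).
      unfold Rmax. destruct (Rle_dec c (a i)); destruct (Rle_dec c (a (i + 1)%nat)).
      * replace (a i / a i) with 1 by (field; lra). replace (a (i+1)%nat / a (i+1)%nat) with 1 by (field; lra). lra.
      * replace (a i / a i) with 1 by (field; lra). apply Rcomplements.Rle_div_r; lra.
      * lra.
      * unfold Rdiv. apply Rmult_le_compat_l. lra. apply Rinv_le_contravar; lra.
  - assert (Ex : ex_series (fun j => a (1 + j)%nat * xcand a c b (1 + j)%nat)).
    { apply (ex_series_unshift1). apply (ex_series_ext (fun j => / b * TP a c (2 + j))).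
      intros j. symmetry. apply xcand_terms; auto; lia. apply (ex_tail_scal (/ b) (TP a c) 2). apply exTP; auto. }
    assert (Sv : Tail (fun i => a i * xcand a c b i) 1 = 1).
    { rewrite Tail_first by auto. rewrite xcand_1, Rmult_0_r, Rplus_0_l.
      rewrite (Tail_ext_loc _ (fun i => / b * TP a c i)) by (intros; apply xcand_terms; auto).
      rewrite Tail_scal. fold (PhiI a c). rewrite Pc. field. lra. }
    apply (ex_Tail_shift1 (fun i => a i * xcand a c b i)) in Ex.
    pose proof (Series_correct _ Ex). rewrite (Series_shift1_Tail (fun i => a i * xcand a c b i)), Sv in H0. auto.
Qed.

Lemma objI_cand a b c : HypI a -> 0 < b -> candI a b c ->
  ex_series (objI_terms b (xcand a c b)) /\ Series (objI_terms b (xcand a c b)) = 1 + ZsI a c.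
Proof.
  intros H Hb Hc. pose proof Hc as [Hc0 [Pc Zc]].
  assert (Ex : ex_series (fun j => exp (- b * xcand a c b (1 + j)%nat))).
  { apply ex_series_unshift1. apply (ex_series_ext (fun j => TZ a c (2 + j))).
    intros j. symmetry. apply xcand_terms; auto; lia. apply exTZ; auto. }
  split.
  - unfold objI_terms. apply (ex_Tail_shift1 (fun i => exp (- b * xcand a c b i))). auto.
  - unfold objI_terms. rewrite (Series_shift1_Tail (fun i => exp (- b * xcand a c b i))).
    rewrite Tail_first by auto. rewrite xcand_1. rewrite Rmult_0_r, exp_0. f_equal.
    unfold ZsI. apply Tail_ext_loc. intros; apply xcand_terms; auto.
Qed.

Lemma minI_ident a b c x : HypI a -> 0 < b -> candI a b c -> minimizerI a b x ->
  forall i, (1 <= i)%nat -> x i = xcand a c b i.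
Proof.
  intros H Hb Hc [Hf [Hex Hmin]] i Hi. pose proof Hc as [Hc0 [Pc Zc]].
  destruct (Nat.eq_dec i 1) as [->|Hi1].
  { rewrite xcand_1. apply Hf. }
  destruct (Req_dec (x i) (xcand a c b i)) as [E|Hne]; auto. exfalso.
  destruct (objI_cand a b c H Hb Hc) as [Exc Sc].
  pose proof (Hmin _ (candI_feasible a b c H Hb Hc) Exc) as Hle. rewrite Sc in Hle.
  pose proof (feasI_nonneg a x Hf) as Hnn.
  destruct Hf as [Hx1 [_ Hsum]].
  assert (Exs : ex_series (fun j => a (1 + j)%nat * x (1 + j)%nat)).
  { apply (ex_shift1_Tail (fun i => a i * x i)). exists 1. auto. }
  assert (Ssum : Tail (fun i => a i * x i) 1 = 1).
  { rewrite <- (Series_shift1_Tail (fun i => a i * x i)). apply is_series_unique. auto. }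
  rewrite Tail_first in Ssum by auto. rewrite Hx1, Rmult_0_r, Rplus_0_l in Ssum.
  assert (Exo : ex_series (fun j => exp (- b * x (1 + j)%nat))) by (apply (ex_shift1_Tail (fun i => exp (- b * x i))); auto).
  unfold objI_terms in Hle. rewrite (Series_shift1_Tail (fun i => exp (- b * x i))) in Hle.
  rewrite Tail_first in Hle by auto. rewrite Hx1, Rmult_0_r, exp_0 in Hle.
  pose proof (key_strictI a c (fun k => b * x k) i H Hc0) as K.
  assert (E1 : ex_series (fun j => a (2 + j)%nat * (b * x (2 + j)%nat))).
  { apply (ex_series_ext (fun j => b * (a (2 + j)%nat * x (2 + j)%nat))). intros; toR; ring.
    apply ex_series_scal_R. apply (ex_tail_S (fun i => a i * x i) 1). auto. }
  assert (E2 : ex_series (fun j => exp (- (b * x (2 + j)%nat)))).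
  { apply (ex_series_ext (fun j => exp (- b * x (2 + j)%nat))). intros; f_equal; ring.
    apply (ex_tail_S (fun i => exp (- b * x i)) 1). auto. }
  assert (ZsI a c - / c * (Tail (fun k => a k * (b * x k)) 2 - PhiI a c) < Tail (fun k => exp (- (b * x k))) 2).
  { apply K; auto. intros k Hk. apply Rmult_le_pos. lra. apply Hnn; lia. lia.
    intros Habs. apply Hne. unfold xcand, ycand. assert (i <> 1%nat) by lia. apply Nat.eqb_neq in H0. rewrite H0.
    rewrite <- Habs. field. lra. }
  rewrite (Tail_ext_loc (fun k => a k * (b * x k)) (fun k => b * (a k * x k))) in H0 by (intros; ring).
  rewrite Tail_scal, Ssum, Pc in H0.
  rewrite (Tail_ext_loc (fun k => exp (- (b * x k))) (fun k => exp (- b * x k))) in H0 by (intros; f_equal; ring).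
  replace (b * 1 - b) with 0 in H0 by ring. lra.
Qed.

Lemma fI_inc_right a th b0 b : HypI a -> 0 < b0 < b ->
  (forall xi, b0 < xi < b -> 0 < Derive (fI a th) xi) -> fI a th b0 < fI a th b.
Proof.
  intros H Hb D. destruct (mvt_fI a th b0 b H Hb) as [xi [Hxi E]].
  specialize (D xi Hxi). assert (0 < Derive (fI a th) xi * (b - b0)) by (apply Rmult_lt_0_compat; lra). lra.
Qed.

Lemma fI_inc_left a th b0 b : HypI a -> 0 < b < b0 ->
  (forall xi, b < xi < b0 -> Derive (fI a th) xi < 0) -> fI a th b0 < fI a th b.
Proof.
  intros H Hb D. destruct (mvt_fI a th b b0 H Hb) as [xi [Hxi E]].
  specialize (D xi Hxi). assert (Derive (fI a th) xi * (b0 - b) < 0).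
  { assert (0 < b0 - b) by lra. nra. }
  lra.
Qed.

Lemma yTZ a c i : HypI a -> 0 < c -> (2 <= i)%nat ->
  ln (Rmax c (a i) / a i) * TZ a c i = / c * TP a c i.
Proof.
  intros H Hc Hi. assert (0 < a i) by (apply apos; auto; lia). unfold TZ, TP, Rmax.
  destruct (Rle_dec c (a i)).
  - replace (a i / a i) with 1 by (field; lra). rewrite ln_1. ring.
  - field. lra.
Qed.

Lemma part_ii :
  (forall (a : nat -> R) (theta : R) (x : R -> nat -> R) (m : nat),
    (forall i, (1 <= i)%nat -> 0 < a i) ->
    (forall i, (1 <= i)%nat -> a (i + 1)%nat <= a i) ->
    ex_series (fun j => a (j + 1)%nat) ->
    Series (fun j => a (j + 1)%nat) <= 1 ->
    ex_series (fun j => eta (a (j + 1)%nat)) ->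
    (forall b, 0 < b -> minimizerI a b (x b)) ->
    0 < theta ->
    is_mI a theta m ->
    let f := fI a theta in
    let bs := sI a m + dI a m * ln ((1 - theta * dI a m) / (theta * INR m)) in
    (forall b, 0 < b -> 0 < f b) /\
    convex_on (fun b => 0 < b) f /\
    (forall b, 0 < b -> ex_derive f b) /\
    (forall b, 0 < b -> continuous (Derive f) b) /\
    filterlim f (at_right 0) (Rbar_locally p_infty) /\
    filterlim (Derive f) (at_right 0) (Rbar_locally m_infty) /\
    filterlim f (Rbar_locally p_infty) (Rbar_locally p_infty) /\
    0 < bs /\
    (forall b, 0 < b -> f bs <= f b) /\
    (forall b, 0 < b -> f b = f bs -> b = bs) /\
    f bs = theta * sI a m + eta (1 - theta * dI a m)
           + (1 - theta * dI a m) * ln (INR m) + dI a m * eta theta /\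
    (forall i, (1 <= i <= m)%nat -> x bs i = 0) /\
    (forall i, (m < i)%nat ->
       x bs i = 1 / bs * ln ((1 - theta * dI a m) / (a i * theta * INR m))) /\
    ex_series (fun j => x bs (j + 1)%nat * exp (- bs * x bs (j + 1)%nat)) /\
    Series (fun j => x bs (j + 1)%nat * exp (- bs * x bs (j + 1)%nat))
      = theta * Series (fun j => exp (- bs * x bs (j + 1)%nat))).
Proof.
  intros a theta x m Hp Hmo Hex Hs Hee Hmin Hth Hm f bs. subst f.
  assert (H : HypI a) by (repeat split; auto).
  destruct (mI_facts a theta m H Hth Hm) as [Hm1 [Hpos [Hlo Hhi]]].
  set (cs := (1 - theta * dI a m) / (theta * INR m)) in *.
  assert (HmR : 1 <= INR m) by (replace 1 with (INR 1) by reflexivity; apply le_INR; lia).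
  assert (Hcs0 : 0 < cs) by (unfold cs; apply Rdiv_lt_0_compat; nra).
  destruct (PhiZs_pieceI a m cs H Hm1 Hcs0 (Rlt_le _ _ Hlo) Hhi) as [Pcs Zcs].
  assert (Hbs : 0 < bs) by (unfold bs; rewrite <- Pcs; apply PhiI_pos; auto).
  assert (Hcand : candI a bs cs) by (apply candI_of_Phi; auto).
  assert (HPsi : PsiI a cs = 1 / theta).
  { unfold PsiI. rewrite Zcs. replace (INR (m - 1)) with (INR m - 1) by (rewrite minus_INR by lia; reflexivity).
    unfold cs. field. split; lra. }
  assert (Dright : forall xi, bs < xi -> 0 < Derive (fI a theta) xi).
  { intros xi Hxi. destruct (candI_exists a xi H ltac:(lra)) as [c Hc].
    apply (DerivI_sign_pos a theta xi c); auto. lra.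
    pose proof (candI_mono a bs xi cs c H Hxi Hcand Hc).
    pose proof (PsiI_strict a cs c H Hcs0 H0). lra. }
  assert (Dleft : forall xi, 0 < xi < bs -> Derive (fI a theta) xi < 0).
  { intros xi Hxi. destruct (candI_exists a xi H ltac:(lra)) as [c Hc].
    apply (DerivI_sign_neg a theta xi c); auto. lra.
    pose proof (candI_mono a xi bs c cs H (proj2 Hxi) Hc Hcand).
    pose proof (PsiI_strict a c cs H (candI_pos a xi c Hc) H0). lra. }
  assert (Strict : forall b, 0 < b -> b <> bs -> fI a theta bs < fI a theta b).
  { intros b Hb Hne. destruct (Rtotal_order b bs) as [Hl|[He|Hg]].
    - apply fI_inc_left; auto. intros xi Hxi. apply Dleft. lra.
    - contradiction.
    - apply fI_inc_right; auto. intros xi Hxi. apply Dright. lra. }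
  assert (Hz0 : z0I a bs = 1 / (theta * cs)).
  { destruct Hcand as [_ [_ Z]]. rewrite Z. unfold PsiI in HPsi.
    apply Rmult_eq_reg_l with cs. 2: lra. rewrite HPsi. field. split; lra. }
  pose proof (minI_ident a bs cs (x bs) H Hbs Hcand (Hmin bs Hbs)) as MI.
  destruct (objI_cand a bs cs H Hbs Hcand) as [Exo So].
  split.
  { intros b Hb. destruct (candI_exists a b H Hb) as [c Hc]. pose proof (z0I_ge1 a b c H Hc).
    unfold fI. assert (0 <= ln (z0I a b)) by (rewrite <- ln_1; apply ln_le; lra). nra. }
  split. apply fI_convex; auto.
  split.
  { intros b Hb. destruct (DerivI_val a theta b H Hb) as [c [_ [_ D]]].
    exists (Derive (fI a theta) b). apply is_derive_Reals; auto. }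
  split.
  { intros b Hb. apply continuity_pt_filterlim. apply fI_Derive_cont; auto. }
  split. apply fI_at0; auto.
  split. apply DerivI_at0; auto.
  split. apply fI_to_infty; auto.
  split. auto.
  split.
  { intros b Hb. destruct (Req_dec b bs) as [->|Hne]. lra. left; apply Strict; auto. }
  split.
  { intros b Hb E. destruct (Req_dec b bs) as [->|Hne]; auto. specialize (Strict b Hb Hne). lra. }
  split.
  { unfold fI. rewrite Hz0. unfold bs. fold cs.
    assert (Hd : 0 < dI a m) by (apply dI_pos; auto).
    rewrite !eta_pos by lra.
    assert (Lcs : ln cs = ln (1 - theta * dI a m) - ln theta - ln (INR m)).
    { unfold cs. rewrite ln_div by nra. rewrite ln_mult by lra. ring. }
    assert (L2 : ln (1 / (theta * cs)) = - ln theta - ln cs).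
    { unfold Rdiv. rewrite Rmult_1_l. rewrite ln_Rinv by nra. rewrite ln_mult by lra. ring. }
    rewrite L2, Lcs. ring. }
  split.
  { intros i Hi. rewrite MI by lia. unfold xcand, ycand. destruct (Nat.eqb i 1) eqn:Ei. unfold Rdiv; ring.
    apply Nat.eqb_neq in Ei. rewrite Rmax_right. replace (a i / a i) with 1 by (field; apply Rgt_not_eq, apos; auto; lia).
    rewrite ln_1. unfold Rdiv; ring. apply Rle_trans with (a m). apply Hhi; lia. apply (amonI a H); lia. }
  split.
  { intros i Hi. rewrite MI by lia. unfold xcand, ycand. destruct (Nat.eqb i 1) eqn:Ei.
    apply Nat.eqb_eq in Ei; lia.
    rewrite Rmax_left. unfold Rdiv at 1. rewrite Rmult_comm. unfold Rdiv. rewrite Rmult_1_l. f_equal. f_equal.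
    unfold cs. field. split. nra. split. lra. apply Rgt_not_eq, apos; auto; lia.
    apply Rle_trans with (a (m + 1)%nat). apply (amonI a H); lia. lra. }
  assert (Eterm : forall i, (2 <= i)%nat -> x bs i * exp (- bs * x bs i) = / (bs * cs) * TP a cs i).
  { intros i Hi. rewrite MI by lia. destruct (xcand_terms a cs bs i H Hcs0 Hbs Hi) as [T1 _]. rewrite T1.
    unfold xcand, ycand. assert (E : Nat.eqb i 1 = false) by (apply Nat.eqb_neq; lia). rewrite E.
    unfold Rdiv. rewrite Rmult_assoc, (Rmult_comm (/ bs)), <- Rmult_assoc.
    replace (ln (Rmax cs (a i) * / a i) * TZ a cs i) with (/ cs * TP a cs i) by (symmetry; exact (yTZ a cs i H Hcs0 Hi)). field. lra. }
  assert (Ex2 : ex_series (fun j => x bs (2 + j)%nat * exp (- bs * x bs (2 + j)%nat))).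
  { apply (ex_series_ext (fun j => / (bs * cs) * TP a cs (2 + j))). intros j. symmetry. apply Eterm; lia.
    apply (ex_tail_scal _ (TP a cs) 2). apply exTP; auto. }
  assert (Ex1 : ex_series (fun j => x bs (1 + j)%nat * exp (- bs * x bs (1 + j)%nat))).
  { apply ex_series_unshift1. auto. }
  split.
  { apply (ex_Tail_shift1 (fun i => x bs i * exp (- bs * x bs i))). auto. }
  rewrite (Series_shift1_Tail (fun i => x bs i * exp (- bs * x bs i))).
  rewrite Tail_first by auto.
  assert (Hx1 : x bs 1%nat = 0) by (rewrite MI by lia; apply xcand_1). rewrite Hx1, Rmult_0_l, Rplus_0_l.
  rewrite (Tail_ext_loc _ (fun i => / (bs * cs) * TP a cs i)) by (intros; apply Eterm; auto).
  rewrite Tail_scal. fold (PhiI a cs). rewrite Pcs. fold bs.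
  assert (So2 : Series (fun j => exp (- bs * x bs (j + 1)%nat)) = 1 + ZsI a cs).
  { rewrite <- So. unfold objI_terms. apply Series_ext. intros j. rewrite MI by lia. reflexivity. }
  rewrite So2. unfold PsiI in HPsi.
  replace (1 + ZsI a cs) with (1 / (theta * cs)) by (apply Rmult_eq_reg_l with cs; [rewrite HPsi; field; split; lra | lra]).
  field. split; lra.
Qed.

Theorem lemma5 :
  (* (i) finite n *)
  (forall (n : nat) (a : nat -> R) (theta : R) (x : R -> nat -> R) (m mt : nat),
    (2 <= n)%nat ->
    (forall i, (1 <= i <= n)%nat -> 0 < a i) ->
    (forall i, (1 <= i < n)%nat -> a (i + 1)%nat <= a i) ->
    sum_n_m a 1 n <= 1 ->
    (forall b, 0 < b -> minimizerF n a b (x b)) ->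
    0 < theta ->
    is_mF n a theta m ->
    is_mtilde n a mt ->
    let f := fF n a theta in
    (forall b, 0 <= b -> 0 < f b) /\
    convex_on (fun b => 0 <= b) f /\
    (forall b, 0 < b -> ex_derive f b) /\
    (forall b, 0 < b -> continuous (Derive f) b) /\
    filterlim (fun h => (f h - f 0) / h) (at_right 0)
      (locally (theta - 1 / (a n * INR n))) /\
    filterlim (Derive f) (at_right 0) (locally (theta - 1 / (a n * INR n))) /\
    f 0 = ln (INR n) /\
    filterlim f (Rbar_locally p_infty) (Rbar_locally p_infty) /\
    (exists bs : R,
      0 <= bs /\
      (forall b, 0 <= b -> f bs <= f b) /\
      (forall b, 0 <= b -> f b = f bs -> b = bs) /\
      (a n * INR n >= 1 / theta -> bs = 0 /\ f bs = ln (INR n)) /\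
      (a n * INR n < 1 / theta ->
         bs = sF n a m + dF n a m * ln ((1 - theta * dF n a m) / (theta * INR m)) /\
         f bs = bs * theta + ln (INR m / (1 - dF n a m * theta)) /\
         (forall i, (1 <= i <= m)%nat -> x bs i = 0) /\
         (forall i, (m < i <= n)%nat ->
            x bs i = 1 / bs * ln ((1 - theta * dF n a m) / (a i * theta * INR m))))) /\
    (a n * INR n >= 1 / theta ->
      (forall i, (1 <= i <= mt)%nat ->
         filterlim (fun b => x b i) (at_right 0) (locally 0)) /\
      (forall i, (mt < i <= n)%nat ->
         filterlim (fun b => x b i) (at_right 0)
           (locally (1 / (a n * INR (n - mt)))))))
  /\
  (* (ii) n = +oo *)
  (forall (a : nat -> R) (theta : R) (x : R -> nat -> R) (m : nat),
    (forall i, (1 <= i)%nat -> 0 < a i) ->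
    (forall i, (1 <= i)%nat -> a (i + 1)%nat <= a i) ->
    ex_series (fun j => a (j + 1)%nat) ->
    Series (fun j => a (j + 1)%nat) <= 1 ->
    ex_series (fun j => eta (a (j + 1)%nat)) ->
    (forall b, 0 < b -> minimizerI a b (x b)) ->
    0 < theta ->
    is_mI a theta m ->
    let f := fI a theta in
    let bs := sI a m + dI a m * ln ((1 - theta * dI a m) / (theta * INR m)) in
    (forall b, 0 < b -> 0 < f b) /\
    convex_on (fun b => 0 < b) f /\
    (forall b, 0 < b -> ex_derive f b) /\
    (forall b, 0 < b -> continuous (Derive f) b) /\
    filterlim f (at_right 0) (Rbar_locally p_infty) /\
    filterlim (Derive f) (at_right 0) (Rbar_locally m_infty) /\
    filterlim f (Rbar_locally p_infty) (Rbar_locally p_infty) /\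
    0 < bs /\
    (forall b, 0 < b -> f bs <= f b) /\
    (forall b, 0 < b -> f b = f bs -> b = bs) /\
    f bs = theta * sI a m + eta (1 - theta * dI a m)
           + (1 - theta * dI a m) * ln (INR m) + dI a m * eta theta /\
    (forall i, (1 <= i <= m)%nat -> x bs i = 0) /\
    (forall i, (m < i)%nat ->
       x bs i = 1 / bs * ln ((1 - theta * dI a m) / (a i * theta * INR m))) /\
    ex_series (fun j => x bs (j + 1)%nat * exp (- bs * x bs (j + 1)%nat)) /\
    Series (fun j => x bs (j + 1)%nat * exp (- bs * x bs (j + 1)%nat))
      = theta * Series (fun j => exp (- bs * x bs (j + 1)%nat))).
Proof.
  split.
  - exact part_i.
  - exact part_ii.
Qed.
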